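(* Let $\mathbb{F}_{3^6}=\mathbb{F}_3(\xi)$ where $\xi$ is a root of $x^6-x^4+x^2-x-1\in\mathbb{F}_3[x]$, and let $\lambda=\xi^{91}$. Define $$f_1(x)=x^{270}-x^{246}+x^{90}-x^{82}-x^{54}+x^{30}-x^{10}-x^{2},$$ $$f_2(x)=\lambda^3\left(x^{270}-x^{246}-\lambda^2x^{90}+\lambda^2x^{82}-x^{54}+x^{30}+\lambda^2x^{10}+\lambda^2x^2\right),$$ and the commutative presemifields $P_i=(\mathbb{F}_{3^6},+,*_i)$, $i=1,2$, by $x*_i y=\tfrac12\big(f_i(x+y)-f_i(x)-f_i(y)\big)$. Then $P_1$ and $P_2$ are isotopic but not strongly isotopic; equivalently, $f_1$ and $f_2$ are planar functions that are not affine equivalent, while $x*_2y=(\lambda*_1x)*_1y$ for all $x,y$.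
   Context: A presemifield $(\mathbb{F}_{p^n},+,* )$ is an algebraic structure where $*$ is biadditive (distributive over $+$) and has no zero divisors. Two presemifields $(\mathbb{F}_{p^n},+,* )$ and $(\mathbb{F}_{p^n},+,\star)$ are isotopic if there exist linearized permutation polynomials $L,M,N\in\mathbb{F}_{p^n}[x]$ with $M(x)\star N(y)=L(x*y)$ for all $x,y$; they are strongly isotopic if such an isotopism exists with $M=N$. Two functions $f,g$ on $\mathbb{F}_{p^n}$ are affine equivalent if $g=l_1\circ f\circ l_2$ with $l_1,l_2$ affine permutations (an affine function being a constant plus a linearized polynomial). A function $f$ on $\mathbb{F}_{p^n}$, $p$ odd, is planar if $x\mapsto f(x+a)-f(x)$ is a bijection for every $a\neq0$. The polynomial $f_1$ is $x\mapsto x\star x$ for the Lunardon–Marino–Polverino–Trombetti–Bierbrauer semifield $(\mathbb{F}_{3^6},+,\star)$ with $q=3,m=3$, and $\lambda$ lies in its middle nucleus but not its nucleus. *)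

(* Defs.v *)
From HB Require Import structures.
From mathcomp Require Import all_boot all_order all_algebra all_field.
Set Implicit Arguments. Unset Strict Implicit. Unset Printing Implicit Defensive.
Import GRing.Theory.
Local Open Scope ring_scope.

Section Defs.
Variable F : finFieldType.

Definition linearized_fun (p : nat) (L : F -> F) : Prop :=
  exists a : seq F, forall x, L x = \sum_(i < size a) a`_i * x ^+ (p ^ i).

Definition linperm (p : nat) (L : F -> F) : Prop :=
  linearized_fun p L /\ bijective L.

Definition affine_perm (p : nat) (l : F -> F) : Prop :=
  (exists (c : F) (L : F -> F), linearized_fun p L /\ forall x, l x = c + L x)
  /\ bijective l.

Definition affine_equiv (p : nat) (f g : F -> F) : Prop :=
  exists l1 l2 : F -> F, affine_perm p l1 /\ affine_perm p l2 /\
    forall x, g x = l1 (f (l2 x)).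

Definition presemifield (mul : F -> F -> F) : Prop :=
  (forall x y z, mul (x + y) z = mul x z + mul y z) /\
  (forall x y z, mul x (y + z) = mul x y + mul x z) /\
  (forall x y, mul x y = 0 -> x = 0 \/ y = 0).

Definition isotopic (p : nat) (mul star : F -> F -> F) : Prop :=
  exists L M N : F -> F, [/\ linperm p L, linperm p M, linperm p N &
    forall x y, star (M x) (N y) = L (mul x y)].

Definition strongly_isotopic (p : nat) (mul star : F -> F -> F) : Prop :=
  exists L M : F -> F, [/\ linperm p L, linperm p M &
    forall x y, star (M x) (M y) = L (mul x y)].

Definition planar (f : F -> F) : Prop :=
  forall a : F, a != 0 -> bijective (fun x => f (x + a) - f x).

Definition psf_mul (f : F -> F) (x y : F) : F :=
  (f (x + y) - f x - f y) / 2%:R.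

Definition f1 (x : F) : F :=
  x ^+ 270 - x ^+ 246 + x ^+ 90 - x ^+ 82 - x ^+ 54 + x ^+ 30 - x ^+ 10 - x ^+ 2.

Definition f2 (lam x : F) : F :=
  lam ^+ 3 * (x ^+ 270 - x ^+ 246 - lam ^+ 2 * x ^+ 90 + lam ^+ 2 * x ^+ 82
              - x ^+ 54 + x ^+ 30 + lam ^+ 2 * x ^+ 10 + lam ^+ 2 * x ^+ 2).

End Defs.

(* Main.v *)
Require Import Defs.
From HB Require Import structures.
From mathcomp Require Import all_boot all_order all_algebra all_field.
From Stdlib Require Import FunctionalExtensionality.
Set Implicit Arguments. Unset Strict Implicit. Unset Printing Implicit Defensive.

Inductive t3 := Z0 | Z1 | Z2.
Definition add3 a b := match a, b with
 | Z0, x => x | x, Z0 => x | Z1, Z1 => Z2 | Z1, Z2 => Z0 | Z2, Z1 => Z0 | Z2, Z2 => Z1 end.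
Definition opp3 a := match a with Z0 => Z0 | Z1 => Z2 | Z2 => Z1 end.
Definition mul3 a b := match a with Z0 => Z0 | Z1 => b | Z2 => opp3 b end.
Definition eq3 a b := match a, b with Z0,Z0 | Z1,Z1 | Z2,Z2 => true | _,_ => false end.
Lemma eq3P : Equality.axiom eq3. Proof. by case; case; constructor. Qed.
HB.instance Definition _ := hasDecEq.Build t3 eq3P.

Record V := mkV { c0 : t3; c1 : t3; c2 : t3; c3 : t3; c4 : t3; c5 : t3 }.
Definition veq u v := [&& eq3 (c0 u) (c0 v), eq3 (c1 u) (c1 v), eq3 (c2 u) (c2 v),
  eq3 (c3 u) (c3 v), eq3 (c4 u) (c4 v) & eq3 (c5 u) (c5 v)].
Lemma veqP : Equality.axiom veq.
Proof.
case=> a b c d e f [a' b' c' d' e' f']; rewrite /veq /=.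
by case: eq3P=> [->|h]; [case: eq3P=> [->|h]|]; [case: eq3P=> [->|h]| |];
 [case: eq3P=> [->|h]| | |]; [case: eq3P=> [->|h]| | | |]; [case: eq3P=> [->|h]| | | | |];
 constructor=> //; case.
Qed.
HB.instance Definition _ := hasDecEq.Build V veqP.

Definition vzero := mkV Z0 Z0 Z0 Z0 Z0 Z0.
Definition vadd u v := mkV (add3 (c0 u) (c0 v)) (add3 (c1 u) (c1 v)) (add3 (c2 u) (c2 v))
  (add3 (c3 u) (c3 v)) (add3 (c4 u) (c4 v)) (add3 (c5 u) (c5 v)).
Definition vopp u := mkV (opp3 (c0 u)) (opp3 (c1 u)) (opp3 (c2 u)) (opp3 (c3 u)) (opp3 (c4 u)) (opp3 (c5 u)).
Definition vscale a u := mkV (mul3 a (c0 u)) (mul3 a (c1 u)) (mul3 a (c2 u))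
  (mul3 a (c3 u)) (mul3 a (c4 u)) (mul3 a (c5 u)).
Definition co (v : V) (k : nat) : t3 :=
  match k with 0 => c0 v | 1 => c1 v | 2 => c2 v | 3 => c3 v | 4 => c4 v | _ => c5 v end.
Definition e (k : nat) : V :=
  match k with 0 => mkV Z1 Z0 Z0 Z0 Z0 Z0 | 1 => mkV Z0 Z1 Z0 Z0 Z0 Z0
  | 2 => mkV Z0 Z0 Z1 Z0 Z0 Z0 | 3 => mkV Z0 Z0 Z0 Z1 Z0 Z0
  | 4 => mkV Z0 Z0 Z0 Z0 Z1 Z0 | 5 => mkV Z0 Z0 Z0 Z0 Z0 Z1 | _ => vzero end.
Definition lin (c : V) (w : nat -> V) : V :=
  vadd (vscale (c0 c) (w 0)) (vadd (vscale (c1 c) (w 1)) (vadd (vscale (c2 c) (w 2))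
  (vadd (vscale (c3 c) (w 3)) (vadd (vscale (c4 c) (w 4)) (vscale (c5 c) (w 5)))))).
Definition dot (a z : V) : t3 :=
  add3 (mul3 (c0 a) (c0 z)) (add3 (mul3 (c1 a) (c1 z)) (add3 (mul3 (c2 a) (c2 z))
  (add3 (mul3 (c3 a) (c3 z)) (add3 (mul3 (c4 a) (c4 z)) (mul3 (c5 a) (c5 z)))))).
Definition BV (T : nat -> nat -> V) (u v : V) : V := lin v (fun j => lin u (fun i => T i j)).

Definition all3 := [:: Z0; Z1; Z2].
Definition allV : seq V := flatten [seq flatten [seq flatten [seq flatten [seq flatten
  [seq [seq mkV a b c d e f | f <- all3] | e <- all3] | d <- all3] | c <- all3] | b <- all3] | a <- all3].
Definition all3b (P : t3 -> bool) := [&& P Z0, P Z1 & P Z2].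
Definition forallV (P : V -> bool) :=
  all3b (fun a => all3b (fun b => all3b (fun c => all3b (fun d => all3b (fun e =>
   all3b (fun f => P (mkV a b c d e f))))))).
Lemma all3b_spec P : all3b P -> forall a, P a.
Proof. by case/and3P=> ? ? ? []. Qed.
Lemma forallV_spec P : forallV P -> forall v, P v.
Proof.
move=> H [a b c d e f].
move: (all3b_spec H a) => /all3b_spec /(_ b) /all3b_spec /(_ c) /all3b_spec /(_ d)
  /all3b_spec /(_ e) /all3b_spec /(_ f); done.
Qed.
Lemma mem_allV v : v \in allV.
Proof. by apply: (forallV_spec (P := fun v => v \in allV)); vm_compute. Qed.
Lemma uniq_allV : uniq allV. Proof. by vm_compute. Qed.

Definition rvec := mkV Z1 Z1 Z2 Z0 Z1 Z0.
Definition shift (v : V) : V := vadd (mkV Z0 (c0 v) (c1 v) (c2 v) (c3 v) (c4 v)) (vscale (c5 v) rvec).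
Definition Tab1list : seq (seq V) := [:: [:: mkV Z1 Z0 Z0 Z0 Z0 Z0; mkV Z0 Z1 Z0 Z0 Z0 Z0; mkV Z0 Z0 Z1 Z0 Z0 Z0; mkV Z0 Z0 Z0 Z1 Z0 Z0; mkV Z0 Z0 Z0 Z0 Z1 Z0; mkV Z0 Z0 Z0 Z0 Z0 Z1]; [:: mkV Z0 Z1 Z0 Z0 Z0 Z0; mkV Z1 Z2 Z0 Z2 Z1 Z2; mkV Z1 Z0 Z1 Z2 Z0 Z2; mkV Z0 Z1 Z2 Z1 Z1 Z1; mkV Z2 Z1 Z1 Z0 Z0 Z0; mkV Z1 Z1 Z2 Z1 Z0 Z2]; [:: mkV Z0 Z0 Z1 Z0 Z0 Z0; mkV Z1 Z0 Z1 Z2 Z0 Z2; mkV Z1 Z1 Z0 Z0 Z0 Z2; mkV Z1 Z1 Z0 Z0 Z2 Z0; mkV Z1 Z2 Z1 Z2 Z0 Z0; mkV Z2 Z1 Z0 Z1 Z0 Z2]; [:: mkV Z0 Z0 Z0 Z1 Z0 Z0; mkV Z0 Z1 Z2 Z1 Z1 Z1; mkV Z1 Z1 Z0 Z0 Z2 Z0; mkV Z0 Z1 Z1 Z0 Z0 Z0; mkV Z2 Z1 Z0 Z0 Z1 Z0; mkV Z0 Z1 Z2 Z0 Z0 Z1]; [:: mkV Z0 Z0 Z0 Z0 Z1 Z0; mkV Z2 Z1 Z1 Z0 Z0 Z0; mkV Z1 Z2 Z1 Z2 Z0 Z0; mkV Z2 Z1 Z0 Z0 Z1 Z0; mkV Z0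 Z1 Z2 Z0 Z0 Z1; mkV Z2 Z1 Z0 Z1 Z2 Z2]; [:: mkV Z0 Z0 Z0 Z0 Z0 Z1; mkV Z1 Z1 Z2 Z1 Z0 Z2; mkV Z2 Z1 Z0 Z1 Z0 Z2; mkV Z0 Z1 Z2 Z0 Z0 Z1; mkV Z2 Z1 Z0 Z1 Z2 Z2; mkV Z0 Z0 Z1 Z0 Z1 Z2]].
Definition Tab2list : seq (seq V) := [:: [:: mkV Z2 Z2 Z1 Z2 Z0 Z2; mkV Z2 Z1 Z0 Z1 Z1 Z0; mkV Z0 Z2 Z1 Z0 Z1 Z1; mkV Z1 Z1 Z1 Z1 Z1 Z1; mkV Z1 Z2 Z0 Z1 Z2 Z1; mkV Z1 Z2 Z1 Z0 Z2 Z2]; [:: mkV Z2 Z1 Z0 Z1 Z1 Z0; mkV Z0 Z0 Z0 Z0 Z2 Z0; mkV Z0 Z0 Z1 Z1 Z2 Z2; mkV Z2 Z0 Z0 Z0 Z2 Z1; mkV Z1 Z0 Z0 Z0 Z0 Z1; mkV Z0 Z0 Z1 Z2 Z2 Z1]; [:: mkV Z0 Z2 Z1 Z0 Z1 Z1; mkV Z0 Z0 Z1 Z1 Z2 Z2; mkV Z0 Z1 Z0 Z1 Z0 Z2; mkV Z0 Z2 Z0 Z2 Z2 Z0; mkV Z1 Z0 Z2 Z0 Z2 Z0; mkV Z0 Z1 Z2 Z1 Z0 Z1]; [:: mkV Z1 Z1 Z1 Z1 Z1 Z1; mkV Z2 Z0 Z0 Z0 Z2 Z1; mkV Z0 Z2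 Z0 Z2 Z2 Z0; mkV Z0 Z2 Z2 Z2 Z1 Z2; mkV Z1 Z0 Z1 Z0 Z1 Z0; mkV Z2 Z1 Z2 Z0 Z0 Z1]; [:: mkV Z1 Z2 Z0 Z1 Z2 Z1; mkV Z1 Z0 Z0 Z0 Z0 Z1; mkV Z1 Z0 Z2 Z0 Z2 Z0; mkV Z1 Z0 Z1 Z0 Z1 Z0; mkV Z2 Z0 Z0 Z1 Z1 Z1; mkV Z0 Z2 Z1 Z1 Z2 Z0]; [:: mkV Z1 Z2 Z1 Z0 Z2 Z2; mkV Z0 Z0 Z1 Z2 Z2 Z1; mkV Z0 Z1 Z2 Z1 Z0 Z1; mkV Z2 Z1 Z2 Z0 Z0 Z1; mkV Z0 Z2 Z1 Z1 Z2 Z0; mkV Z2 Z2 Z0 Z2 Z0 Z0]].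
Definition lamV : V := mkV Z2 Z2 Z1 Z2 Z0 Z2.
Definition aVlist : seq V := [:: mkV Z1 Z2 Z1 Z2 Z0 Z2; mkV Z0 Z0 Z0 Z0 Z0 Z0; mkV Z0 Z0 Z0 Z0 Z0 Z0; mkV Z0 Z0 Z0 Z0 Z0 Z0; mkV Z0 Z0 Z0 Z0 Z0 Z0; mkV Z0 Z0 Z0 Z0 Z0 Z0].
Definition W0list : seq V := [:: mkV Z0 Z2 Z1 Z2 Z1 Z0; mkV Z2 Z1 Z2 Z1 Z0 Z1; mkV Z0 Z2 Z1 Z2 Z2 Z2; mkV Z0 Z0 Z0 Z1 Z1 Z0; mkV Z0 Z1 Z2 Z0 Z0 Z2; mkV Z0 Z0 Z1 Z2 Z2 Z0].
Definition a0 : V := mkV Z1 Z0 Z0 Z0 Z0 Z0.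
Definition b0 : V := mkV Z0 Z2 Z0 Z0 Z0 Z0.
Definition Clist : seq (seq V) := [:: [:: mkV Z1 Z0 Z0 Z0 Z0 Z0; mkV Z0 Z1 Z0 Z0 Z0 Z0; mkV Z0 Z0 Z1 Z0 Z0 Z0; mkV Z0 Z0 Z0 Z1 Z0 Z0; mkV Z0 Z0 Z0 Z0 Z1 Z0; mkV Z0 Z0 Z0 Z0 Z0 Z1]; [:: mkV Z0 Z1 Z0 Z0 Z0 Z0; mkV Z0 Z0 Z1 Z0 Z0 Z0; mkV Z0 Z0 Z0 Z1 Z0 Z0; mkV Z0 Z0 Z0 Z0 Z1 Z0; mkV Z0 Z0 Z0 Z0 Z0 Z1; mkV Z1 Z1 Z2 Z0 Z1 Z0]; [:: mkV Z0 Z0 Z1 Z0 Z0 Z0; mkV Z0 Z0 Z0 Z1 Z0 Z0; mkV Z0 Z0 Z0 Z0 Z1 Z0; mkV Z0 Z0 Z0 Z0 Z0 Z1; mkV Z1 Z1 Z2 Z0 Z1 Z0; mkV Z0 Z1 Z1 Z2 Z0 Z1]; [:: mkV Z0 Z0 Z0 Z1 Z0 Z0; mkV Z0 Z0 Z0 Z0 Z1 Z0; mkV Z0 Z0 Z0 Z0 Z0 Z1; mkV Z1 Z1 Z2 Z0 Z1 Z0; mkV Z0 Z1 Z1 Z2 Z0 Z1; mkV Z1 Z1 Z0 Z1 Z0 Z0]; [:: mkV Z0 Z0 Z0 Z0 Z1 Z0; mkV Z0 Z0 Z0 Z0 Z0 Z1; mkV Z1 Z1 Z2 Z0 Z1 Z0;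 mkV Z0 Z1 Z1 Z2 Z0 Z1; mkV Z1 Z1 Z0 Z1 Z0 Z0; mkV Z0 Z1 Z1 Z0 Z1 Z0]; [:: mkV Z0 Z0 Z0 Z0 Z0 Z1; mkV Z1 Z1 Z2 Z0 Z1 Z0; mkV Z0 Z1 Z1 Z2 Z0 Z1; mkV Z1 Z1 Z0 Z1 Z0 Z0; mkV Z0 Z1 Z1 Z0 Z1 Z0; mkV Z0 Z0 Z1 Z1 Z0 Z1]].

Definition vsub u v := vadd u (vopp v).
Definition Tab1 i j := nth vzero (nth [::] Tab1list i) j.
Definition Tab2 i j := nth vzero (nth [::] Tab2list i) j.
Definition Cm i j := nth vzero (nth [::] Clist i) j.
Definition cvec k := iter k shift (e 0).
Definition vmul := BV Cm.
Definition vpow u n := iter n (vmul u) (e 0).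
Record V6 := M6 { p0 : V; p1 : V; p2 : V; p3 : V; p4 : V; p5 : V }.
Definition at6 (W : V6) (j : nat) : V :=
  match j with 0 => p0 W | 1 => p1 W | 2 => p2 W | 3 => p3 W | 4 => p4 W | _ => p5 W end.
Definition mk6 (h : nat -> V) : V6 := M6 (h 0) (h 1) (h 2) (h 3) (h 4) (h 5).
Definition BVrow (T : nat -> nat -> V) (u : V) : V6 := mk6 (fun j => lin u (fun i => T i j)).
Definition psfV (f : V -> V) (x y : V) : V := vopp (vsub (vsub (f (vadd x y)) (f x)) (f y)).
Definition W0 j := nth vzero W0list j.
Definition X2 (v : V) := lin v W0.
Definition aV j := nth vzero aVlist j.
Definition vfr (i : nat) (u : V) := iter i (fun z => vpow z 3) u.
Definition PVgen (f : nat -> V) : V :=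
  vadd (f 0) (vadd (f 1) (vadd (f 2) (vadd (f 3) (vadd (f 4) (f 5))))).
Definition PV (u : V) : V := PVgen (fun i => vmul (aV i) (vfr i u)).
Definition ppoly := [:: Z1; Z0; Z0; Z0; Z0; Z2; Z2].
Definition peval (X : V -> V) (v : V) : V :=
  foldl (fun r c => vadd (X r) (vscale c v)) vzero ppoly.
Definition gcol (T : nat -> nat -> V) (a w : V) : V :=
  mkV (dot a (BV T (e 0) w)) (dot a (BV T (e 1) w)) (dot a (BV T (e 2) w))
      (dot a (BV T (e 3) w)) (dot a (BV T (e 4) w)) (dot a (BV T (e 5) w)).
Definition gm (T : nat -> nat -> V) (a : V) : V6 := mk6 (fun j => gcol T a (e j)).
Definition Zc (T : nat -> nat -> V) (a : V) := count (fun x => dot a (BV T x x) == Z0) allV.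
Definition Zcs (sq : seq V) (a : V) := count (fun s => dot a s == Z0) sq.
Definition imgsOf (a : V) := let Ga := gm Tab1 a in [seq lin w (at6 Ga) | w <- allV].
Definition Hof (a : V) : V6 := let im := imgsOf a in mk6 (fun k => nth vzero allV (index (e k) im)).
Definition checkA (gtab : seq V6) (a : V) : bool :=
  let Ga := gm Tab1 a in
  let H := Hof a in
  [&& all (fun p => (p.2 == vzero) ==> (p.1 == vzero)) (zip allV (imgsOf a)),
      all (fun k => lin (at6 H k) (at6 Ga) == e k) (iota 0 6) &
      all (fun Gb => let W := mk6 (fun j => lin (at6 Gb j) (at6 H)) in
                     peval (fun v => lin v (at6 W)) (e 0) != vzero) gtab].
Definition invlist : seq V := [:: mkV Z0 Z0 Z0 Z0 Z0 Z0; mkV Z1 Z0 Z0 Z0 Z0 Z0; mkV Z2 Z0 Z0 Z0 Z0 Z0; mkV Z2 Z1 Z0 Z2 Z0 Z1; mkV Z2 Z2 Z0 Z0 Z1 Z2; mkV Z0 Z1 Z0 Z0 Z1 Z1; mkV Z1 Z2 Z0 Z1 Z0 Z2; mkV Z0 Z2 Z0 Z0 Z2 Z2; mkV Z1 Z1 Z0 Z0 Z2 Z1; mkV Z2 Z2 Z2 Z1 Z1 Z2; mkV Z2 Z0 Z2 Z1 Z2 Z1; mkV Z2 Z1 Z0 Z0 Z0 Z1; mkV Z0 Z2 Z0 Z2 Z2 Z2; mkV Z0 Z2 Z2 Z2 Z1 Z0; mkV Z0 Z2 Z2 Z0 Z0 Z1; mkV Z1 Z0 Z0 Z1 Z1 Z0;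 mkV Z1 Z0 Z1 Z2 Z1 Z1; mkV Z1 Z2 Z1 Z0 Z0 Z1; mkV Z1 Z1 Z1 Z2 Z2 Z1; mkV Z1 Z2 Z0 Z0 Z0 Z2; mkV Z1 Z0 Z1 Z2 Z1 Z2; mkV Z2 Z0 Z0 Z2 Z2 Z0; mkV Z2 Z1 Z2 Z0 Z0 Z2; mkV Z2 Z0 Z2 Z1 Z2 Z2; mkV Z0 Z1 Z0 Z1 Z1 Z1; mkV Z0 Z1 Z1 Z0 Z0 Z2; mkV Z0 Z1 Z1 Z1 Z2 Z0; mkV Z0 Z1 Z1 Z2 Z2 Z2; mkV Z1 Z2 Z2 Z0 Z1 Z0; mkV Z1 Z0 Z0 Z1 Z1 Z1; mkV Z1 Z1 Z1 Z0 Z1 Z2; mkV Z2 Z2 Z1 Z1 Z0 Z2; mkV Z0 Z1 Z1 Z2 Z0 Z1; mkV Z2 Z2 Z0 Z1 Z1 Z2; mkV Z2 Z2 Z0 Z2 Z1 Z0; mkV Z1 Z0 Z1 Z2 Z2 Z1; mkV Z2 Z0 Z2 Z2 Z2 Z0; mkV Z1 Z1 Z1 Z1 Z0 Z2; mkV Z2 Z1 Z0 Z2 Z1 Z0; mkV Z2 Z2 Z2 Z1 Z0 Z0; mkV Z0 Z1 Z0 Z1 Z2 Z2; mkV Z0 Z1 Z2 Z2 Z1 Z2; mkV Z2 Z2 Z0 Z0 Z1 Z0; mkV Z2 Z2 Z2 Z0 Z2 Z2; mkV Z2 Z2 Z1 Z2 Z1 Z0; mkV Z2 Z1 Z1 Z0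 Z0 Z1; mkV Z0 Z2 Z0 Z1 Z1 Z1; mkV Z2 Z2 Z1 Z2 Z0 Z1; mkV Z2 Z2 Z2 Z0 Z1 Z1; mkV Z0 Z1 Z0 Z0 Z0 Z2; mkV Z0 Z2 Z1 Z0 Z0 Z2; mkV Z1 Z2 Z0 Z2 Z1 Z1; mkV Z2 Z2 Z1 Z1 Z2 Z1; mkV Z0 Z1 Z1 Z1 Z0 Z0; mkV Z0 Z2 Z2 Z1 Z1 Z1; mkV Z2 Z0 Z0 Z2 Z2 Z2; mkV Z2 Z1 Z1 Z0 Z2 Z0; mkV Z1 Z1 Z0 Z2 Z2 Z1; mkV Z2 Z0 Z2 Z1 Z1 Z2; mkV Z1 Z1 Z0 Z1 Z2 Z0; mkV Z2 Z2 Z2 Z0 Z2 Z1; mkV Z0 Z2 Z2 Z1 Z0 Z2; mkV Z1 Z1 Z2 Z2 Z0 Z1; mkV Z1 Z2 Z2 Z0 Z0 Z2; mkV Z1 Z1 Z2 Z1 Z0 Z2; mkV Z0 Z1 Z0 Z2 Z2 Z2; mkV Z2 Z1 Z0 Z1 Z2 Z2; mkV Z0 Z2 Z2 Z2 Z0 Z0; mkV Z1 Z1 Z2 Z2 Z1 Z2; mkV Z1 Z1 Z1 Z0 Z2 Z2; mkV Z0 Z1 Z2 Z0 Z0 Z1; mkV Z0 Z2 Z0 Z0 Z0 Z1; mkV Z1 Z0 Z1 Z1 Z1 Z0; mkV Z1 Z2 Z0 Z1 Z2 Z0; mkV Z2 Z2 Z2 Z2 Z0 Z1; mkV Z1 Z1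 Z0 Z0 Z2 Z0; mkV Z1 Z1 Z2 Z1 Z2 Z0; mkV Z1 Z1 Z1 Z0 Z1 Z1; mkV Z1 Z1 Z1 Z2 Z0 Z0; mkV Z0 Z2 Z1 Z1 Z2 Z1; mkV Z0 Z2 Z0 Z2 Z1 Z1; mkV Z1 Z1 Z2 Z2 Z2 Z0; mkV Z1 Z0 Z0 Z1 Z0 Z2; mkV Z0 Z2 Z2 Z1 Z2 Z0; mkV Z1 Z0 Z0 Z0 Z0 Z1; mkV Z2 Z0 Z2 Z0 Z1 Z2; mkV Z2 Z0 Z1 Z2 Z0 Z2; mkV Z2 Z1 Z1 Z0 Z1 Z1; mkV Z0 Z1 Z2 Z1 Z2 Z0; mkV Z0 Z2 Z1 Z1 Z0 Z0; mkV Z0 Z2 Z0 Z0 Z2 Z1; mkV Z0 Z0 Z0 Z1 Z2 Z2; mkV Z1 Z2 Z0 Z2 Z1 Z2; mkV Z0 Z0 Z1 Z1 Z2 Z2; mkV Z0 Z0 Z2 Z1 Z0 Z2; mkV Z2 Z1 Z1 Z0 Z2 Z1; mkV Z1 Z1 Z2 Z0 Z1 Z0; mkV Z2 Z2 Z0 Z1 Z1 Z0; mkV Z2 Z1 Z1 Z1 Z0 Z1; mkV Z0 Z2 Z1 Z2 Z2 Z2; mkV Z1 Z0 Z0 Z0 Z1 Z2; mkV Z1 Z1 Z2 Z2 Z0 Z2; mkV Z0 Z2 Z2 Z2 Z0 Z2; mkV Z0 Z2 Z1 Z0 Z1 Z0; mkV Z2 Z1 Z0 Z2 Z2 Z0;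 mkV Z2 Z2 Z2 Z1 Z1 Z1; mkV Z1 Z0 Z0 Z1 Z0 Z0; mkV Z0 Z0 Z0 Z2 Z2 Z2; mkV Z1 Z1 Z2 Z0 Z0 Z2; mkV Z0 Z2 Z1 Z0 Z0 Z0; mkV Z0 Z0 Z2 Z1 Z2 Z2; mkV Z0 Z2 Z1 Z2 Z2 Z1; mkV Z0 Z1 Z2 Z1 Z2 Z1; mkV Z1 Z2 Z2 Z2 Z2 Z1; mkV Z2 Z2 Z2 Z2 Z0 Z2; mkV Z1 Z2 Z1 Z0 Z2 Z0; mkV Z1 Z2 Z1 Z0 Z1 Z0; mkV Z0 Z1 Z1 Z1 Z0 Z2; mkV Z0 Z0 Z2 Z2 Z0 Z0; mkV Z0 Z1 Z0 Z2 Z1 Z0; mkV Z1 Z0 Z1 Z2 Z2 Z0; mkV Z2 Z0 Z1 Z1 Z2 Z1; mkV Z2 Z2 Z0 Z2 Z0 Z2; mkV Z1 Z2 Z2 Z1 Z2 Z0; mkV Z0 Z0 Z0 Z1 Z0 Z2; mkV Z0 Z0 Z0 Z0 Z2 Z0; mkV Z0 Z2 Z0 Z2 Z0 Z2; mkV Z1 Z0 Z1 Z1 Z2 Z1; mkV Z0 Z2 Z2 Z2 Z2 Z0; mkV Z0 Z1 Z0 Z0 Z2 Z2; mkV Z2 Z2 Z2 Z2 Z1 Z2; mkV Z2 Z2 Z1 Z1 Z2 Z2; mkV Z0 Z0 Z2 Z2 Z0 Z2; mkV Z2 Z1 Z2 Z0 Z2 Z2; mkV Z2 Z0 Z2 Z1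 Z1 Z1; mkV Z2 Z0 Z0 Z1 Z1 Z2; mkV Z1 Z0 Z0 Z0 Z1 Z1; mkV Z0 Z0 Z0 Z1 Z0 Z1; mkV Z2 Z0 Z1 Z1 Z1 Z0; mkV Z1 Z2 Z2 Z2 Z0 Z1; mkV Z2 Z0 Z1 Z1 Z0 Z0; mkV Z0 Z0 Z2 Z1 Z1 Z2; mkV Z0 Z1 Z0 Z2 Z2 Z1; mkV Z1 Z2 Z0 Z1 Z0 Z0; mkV Z0 Z1 Z0 Z2 Z1 Z2; mkV Z2 Z0 Z1 Z0 Z0 Z2; mkV Z0 Z0 Z0 Z2 Z1 Z2; mkV Z1 Z0 Z0 Z0 Z2 Z0; mkV Z2 Z0 Z0 Z1 Z0 Z2; mkV Z0 Z1 Z2 Z2 Z2 Z0; mkV Z2 Z1 Z0 Z0 Z2 Z0; mkV Z0 Z1 Z1 Z0 Z1 Z1; mkV Z2 Z2 Z1 Z1 Z0 Z0; mkV Z1 Z1 Z2 Z0 Z1 Z1; mkV Z0 Z1 Z2 Z0 Z2 Z1; mkV Z1 Z1 Z0 Z2 Z0 Z2; mkV Z0 Z0 Z1 Z0 Z1 Z2; mkV Z1 Z2 Z2 Z2 Z2 Z2; mkV Z0 Z0 Z1 Z0 Z1 Z1; mkV Z1 Z1 Z1 Z0 Z0 Z0; mkV Z1 Z1 Z1 Z0 Z0 Z2; mkV Z2 Z1 Z0 Z1 Z1 Z1; mkV Z2 Z2 Z1 Z1 Z1 Z0; mkV Z0 Z1 Z1 Z2 Z1 Z0; mkV Z2 Z0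 Z0 Z2 Z0 Z1; mkV Z1 Z2 Z2 Z0 Z2 Z2; mkV Z0 Z1 Z2 Z2 Z0 Z0; mkV Z0 Z2 Z1 Z2 Z1 Z0; mkV Z2 Z0 Z0 Z0 Z0 Z2; mkV Z1 Z0 Z2 Z1 Z0 Z1; mkV Z1 Z0 Z1 Z0 Z2 Z1; mkV Z0 Z1 Z2 Z1 Z1 Z1; mkV Z2 Z2 Z1 Z1 Z0 Z1; mkV Z2 Z0 Z0 Z0 Z2 Z1; mkV Z1 Z1 Z1 Z2 Z2 Z2; mkV Z0 Z0 Z0 Z1 Z1 Z1; mkV Z2 Z0 Z0 Z2 Z0 Z0; mkV Z0 Z1 Z1 Z1 Z0 Z1; mkV Z1 Z2 Z0 Z1 Z1 Z0; mkV Z0 Z1 Z2 Z0 Z2 Z0; mkV Z0 Z1 Z0 Z0 Z1 Z2; mkV Z2 Z1 Z0 Z1 Z2 Z1; mkV Z0 Z0 Z0 Z2 Z1 Z1; mkV Z2 Z2 Z1 Z0 Z2 Z0; mkV Z1 Z2 Z2 Z2 Z0 Z2; mkV Z1 Z1 Z0 Z2 Z2 Z0; mkV Z0 Z0 Z2 Z2 Z1 Z1; mkV Z1 Z2 Z2 Z0 Z1 Z2; mkV Z0 Z0 Z1 Z2 Z0 Z1; mkV Z1 Z0 Z0 Z2 Z2 Z1; mkV Z0 Z0 Z0 Z2 Z0 Z2; mkV Z2 Z0 Z0 Z0 Z2 Z2; mkV Z0 Z0 Z1 Z2 Z2 Z1; mkV Z2 Z1 Z0 Z2 Z0 Z0;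 mkV Z0 Z2 Z0 Z1 Z1 Z2; mkV Z1 Z0 Z2 Z2 Z2 Z0; mkV Z1 Z0 Z2 Z2 Z0 Z0; mkV Z2 Z1 Z1 Z1 Z0 Z2; mkV Z2 Z2 Z1 Z0 Z2 Z2; mkV Z2 Z2 Z0 Z1 Z0 Z1; mkV Z0 Z2 Z1 Z0 Z1 Z2; mkV Z2 Z2 Z2 Z0 Z0 Z0; mkV Z1 Z2 Z0 Z2 Z2 Z2; mkV Z2 Z2 Z2 Z0 Z0 Z1; mkV Z0 Z0 Z2 Z0 Z2 Z1; mkV Z0 Z0 Z2 Z0 Z2 Z2; mkV Z2 Z1 Z1 Z1 Z1 Z1; mkV Z0 Z2 Z0 Z1 Z2 Z1; mkV Z0 Z0 Z0 Z1 Z2 Z1; mkV Z1 Z0 Z2 Z0 Z0 Z1; mkV Z1 Z2 Z0 Z0 Z1 Z0; mkV Z1 Z1 Z2 Z2 Z0 Z0; mkV Z0 Z2 Z2 Z0 Z2 Z2; mkV Z2 Z0 Z0 Z0 Z1 Z0; mkV Z0 Z2 Z1 Z1 Z1 Z0; mkV Z1 Z0 Z0 Z2 Z0 Z1; mkV Z2 Z2 Z1 Z0 Z0 Z1; mkV Z0 Z0 Z1 Z2 Z1 Z1; mkV Z0 Z1 Z2 Z0 Z0 Z0; mkV Z1 Z1 Z1 Z1 Z0 Z1; mkV Z2 Z1 Z2 Z0 Z2 Z0; mkV Z2 Z1 Z2 Z0 Z1 Z0; mkV Z0 Z1 Z2 Z1 Z1 Z2; mkV Z2 Z1 Z1 Z1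 Z1 Z2; mkV Z0 Z2 Z1 Z2 Z1 Z2; mkV Z0 Z1 Z0 Z1 Z0 Z1; mkV Z0 Z1 Z1 Z1 Z1 Z0; mkV Z2 Z0 Z2 Z2 Z1 Z2; mkV Z0 Z0 Z1 Z1 Z0 Z1; mkV Z1 Z0 Z1 Z2 Z2 Z2; mkV Z1 Z2 Z1 Z0 Z1 Z1; mkV Z0 Z2 Z0 Z0 Z1 Z1; mkV Z1 Z1 Z2 Z2 Z1 Z1; mkV Z1 Z1 Z1 Z1 Z2 Z1; mkV Z0 Z2 Z2 Z2 Z0 Z1; mkV Z0 Z2 Z0 Z1 Z2 Z0; mkV Z0 Z0 Z1 Z1 Z0 Z0; mkV Z2 Z1 Z1 Z2 Z1 Z0; mkV Z0 Z0 Z0 Z0 Z1 Z0; mkV Z0 Z0 Z0 Z2 Z0 Z1; mkV Z2 Z0 Z2 Z1 Z1 Z0; mkV Z1 Z1 Z0 Z1 Z0 Z1; mkV Z1 Z0 Z2 Z2 Z1 Z2; mkV Z0 Z0 Z2 Z1 Z0 Z1; mkV Z0 Z1 Z0 Z0 Z1 Z0; mkV Z2 Z0 Z1 Z0 Z2 Z1; mkV Z2 Z1 Z1 Z2 Z2 Z1; mkV Z0 Z0 Z1 Z2 Z1 Z2; mkV Z2 Z0 Z1 Z0 Z0 Z0; mkV Z2 Z2 Z1 Z2 Z0 Z0; mkV Z0 Z2 Z2 Z0 Z1 Z1; mkV Z2 Z2 Z1 Z0 Z0 Z2; mkV Z2 Z1 Z0 Z2 Z1 Z1; mkV Z2 Z1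 Z2 Z2 Z2 Z2; mkV Z1 Z2 Z2 Z1 Z2 Z2; mkV Z1 Z1 Z0 Z2 Z2 Z2; mkV Z0 Z1 Z2 Z1 Z0 Z2; mkV Z0 Z0 Z2 Z1 Z0 Z0; mkV Z1 Z0 Z2 Z1 Z2 Z2; mkV Z2 Z2 Z1 Z0 Z0 Z0; mkV Z0 Z0 Z0 Z2 Z2 Z0; mkV Z2 Z0 Z0 Z2 Z1 Z2; mkV Z2 Z0 Z2 Z1 Z2 Z0; mkV Z1 Z1 Z0 Z2 Z1 Z2; mkV Z1 Z2 Z1 Z2 Z0 Z0; mkV Z1 Z1 Z0 Z0 Z0 Z2; mkV Z1 Z2 Z2 Z0 Z1 Z1; mkV Z2 Z1 Z1 Z0 Z0 Z0; mkV Z1 Z1 Z0 Z1 Z1 Z1; mkV Z2 Z1 Z1 Z1 Z2 Z0; mkV Z2 Z0 Z0 Z2 Z1 Z0; mkV Z2 Z0 Z0 Z2 Z2 Z1; mkV Z1 Z0 Z0 Z0 Z2 Z2; mkV Z0 Z0 Z1 Z2 Z2 Z0; mkV Z1 Z2 Z2 Z2 Z2 Z0; mkV Z0 Z0 Z1 Z1 Z2 Z1; mkV Z1 Z1 Z2 Z0 Z2 Z1; mkV Z0 Z1 Z2 Z0 Z1 Z1; mkV Z1 Z0 Z1 Z1 Z2 Z0; mkV Z0 Z1 Z1 Z2 Z2 Z0; mkV Z0 Z0 Z2 Z1 Z1 Z1; mkV Z1 Z1 Z2 Z0 Z2 Z2; mkV Z0 Z2 Z1 Z0 Z2 Z0;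 mkV Z0 Z1 Z0 Z2 Z2 Z0; mkV Z2 Z2 Z1 Z0 Z1 Z0; mkV Z2 Z0 Z0 Z0 Z1 Z2; mkV Z2 Z2 Z1 Z2 Z2 Z2; mkV Z1 Z0 Z1 Z0 Z2 Z0; mkV Z0 Z0 Z0 Z0 Z0 Z1; mkV Z1 Z2 Z0 Z0 Z2 Z0; mkV Z0 Z0 Z2 Z0 Z1 Z2; mkV Z0 Z2 Z1 Z2 Z0 Z2; mkV Z2 Z1 Z2 Z1 Z0 Z1; mkV Z1 Z1 Z2 Z1 Z0 Z1; mkV Z2 Z0 Z1 Z1 Z1 Z2; mkV Z1 Z2 Z0 Z2 Z0 Z1; mkV Z0 Z0 Z1 Z1 Z1 Z1; mkV Z2 Z1 Z2 Z2 Z2 Z0; mkV Z2 Z2 Z2 Z1 Z2 Z0; mkV Z2 Z0 Z0 Z0 Z2 Z0; mkV Z2 Z1 Z0 Z0 Z2 Z1; mkV Z2 Z2 Z0 Z0 Z2 Z2; mkV Z0 Z1 Z0 Z0 Z0 Z0; mkV Z0 Z0 Z2 Z2 Z2 Z1; mkV Z1 Z2 Z2 Z1 Z0 Z1; mkV Z1 Z0 Z2 Z2 Z2 Z2; mkV Z2 Z2 Z2 Z0 Z2 Z0; mkV Z1 Z0 Z1 Z1 Z2 Z2; mkV Z1 Z1 Z1 Z0 Z2 Z1; mkV Z2 Z1 Z0 Z1 Z0 Z0; mkV Z0 Z2 Z2 Z0 Z2 Z1; mkV Z0 Z1 Z2 Z2 Z0 Z1; mkV Z2 Z2 Z2 Z0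 Z0 Z2; mkV Z2 Z1 Z0 Z2 Z2 Z2; mkV Z2 Z0 Z2 Z1 Z0 Z0; mkV Z0 Z1 Z1 Z2 Z1 Z2; mkV Z1 Z1 Z1 Z1 Z2 Z2; mkV Z0 Z1 Z2 Z0 Z1 Z2; mkV Z2 Z1 Z1 Z2 Z0 Z1; mkV Z2 Z2 Z0 Z2 Z0 Z0; mkV Z2 Z1 Z1 Z0 Z1 Z2; mkV Z0 Z0 Z2 Z2 Z2 Z0; mkV Z1 Z1 Z0 Z2 Z1 Z0; mkV Z2 Z0 Z2 Z2 Z0 Z0; mkV Z0 Z0 Z0 Z2 Z2 Z1; mkV Z1 Z0 Z0 Z2 Z1 Z0; mkV Z1 Z0 Z0 Z2 Z0 Z2; mkV Z2 Z1 Z0 Z0 Z0 Z0; mkV Z2 Z2 Z0 Z1 Z0 Z2; mkV Z0 Z1 Z0 Z0 Z2 Z1; mkV Z0 Z2 Z1 Z2 Z2 Z0; mkV Z0 Z2 Z1 Z1 Z2 Z2; mkV Z1 Z2 Z2 Z2 Z1 Z2; mkV Z2 Z1 Z2 Z2 Z1 Z0; mkV Z1 Z0 Z2 Z0 Z2 Z1; mkV Z1 Z1 Z1 Z1 Z1 Z1; mkV Z1 Z2 Z1 Z2 Z1 Z0; mkV Z2 Z1 Z2 Z2 Z0 Z0; mkV Z0 Z2 Z0 Z0 Z1 Z0; mkV Z1 Z0 Z2 Z1 Z1 Z1; mkV Z2 Z1 Z1 Z2 Z2 Z0; mkV Z1 Z0 Z2 Z2 Z0 Z2; mkV Z0 Z1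 Z2 Z1 Z2 Z2; mkV Z2 Z1 Z2 Z2 Z2 Z1; mkV Z1 Z1 Z0 Z1 Z1 Z2; mkV Z1 Z2 Z0 Z1 Z0 Z1; mkV Z0 Z0 Z2 Z2 Z1 Z0; mkV Z1 Z2 Z1 Z0 Z1 Z2; mkV Z1 Z2 Z0 Z0 Z0 Z1; mkV Z2 Z1 Z2 Z0 Z0 Z1; mkV Z0 Z1 Z2 Z1 Z0 Z0; mkV Z1 Z1 Z1 Z0 Z2 Z0; mkV Z2 Z0 Z0 Z1 Z0 Z0; mkV Z1 Z2 Z2 Z1 Z1 Z1; mkV Z0 Z2 Z2 Z0 Z0 Z0; mkV Z1 Z2 Z2 Z0 Z0 Z1; mkV Z2 Z2 Z2 Z2 Z1 Z0; mkV Z1 Z0 Z2 Z1 Z0 Z0; mkV Z2 Z1 Z2 Z1 Z0 Z2; mkV Z0 Z2 Z2 Z0 Z0 Z2; mkV Z2 Z2 Z2 Z1 Z0 Z1; mkV Z2 Z0 Z2 Z2 Z2 Z1; mkV Z1 Z1 Z0 Z1 Z0 Z2; mkV Z1 Z0 Z1 Z0 Z1 Z2; mkV Z2 Z0 Z1 Z0 Z1 Z1; mkV Z2 Z2 Z1 Z1 Z2 Z0; mkV Z0 Z2 Z2 Z1 Z2 Z2; mkV Z2 Z0 Z2 Z0 Z0 Z2; mkV Z0 Z1 Z0 Z2 Z1 Z1; mkV Z1 Z0 Z1 Z1 Z0 Z1; mkV Z0 Z2 Z1 Z0 Z1 Z1; mkV Z2 Z2 Z2 Z1 Z1 Z0;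 mkV Z0 Z0 Z1 Z0 Z2 Z0; mkV Z2 Z1 Z2 Z2 Z0 Z2; mkV Z0 Z0 Z0 Z0 Z1 Z2; mkV Z0 Z0 Z0 Z2 Z0 Z0; mkV Z2 Z0 Z0 Z1 Z1 Z1; mkV Z0 Z2 Z2 Z0 Z1 Z0; mkV Z2 Z0 Z2 Z0 Z2 Z0; mkV Z1 Z2 Z0 Z0 Z2 Z1; mkV Z0 Z2 Z0 Z2 Z1 Z2; mkV Z2 Z2 Z1 Z1 Z1 Z1; mkV Z1 Z1 Z1 Z2 Z1 Z1; mkV Z0 Z0 Z1 Z0 Z0 Z1; mkV Z2 Z2 Z2 Z2 Z0 Z0; mkV Z0 Z2 Z2 Z1 Z0 Z0; mkV Z2 Z1 Z2 Z2 Z1 Z2; mkV Z1 Z0 Z0 Z2 Z2 Z0; mkV Z1 Z2 Z1 Z0 Z0 Z0; mkV Z0 Z1 Z2 Z0 Z0 Z2; mkV Z0 Z1 Z2 Z2 Z2 Z2; mkV Z1 Z1 Z0 Z2 Z1 Z1; mkV Z1 Z0 Z2 Z0 Z0 Z2; mkV Z0 Z0 Z1 Z0 Z2 Z2; mkV Z2 Z1 Z0 Z1 Z1 Z2; mkV Z1 Z1 Z2 Z2 Z2 Z1; mkV Z0 Z2 Z2 Z0 Z2 Z0; mkV Z0 Z1 Z1 Z0 Z2 Z1; mkV Z2 Z0 Z2 Z1 Z0 Z2; mkV Z2 Z1 Z0 Z0 Z2 Z2; mkV Z1 Z2 Z1 Z2 Z2 Z0; mkV Z0 Z2 Z2 Z2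 Z1 Z2; mkV Z1 Z1 Z1 Z2 Z1 Z2; mkV Z2 Z1 Z2 Z0 Z1 Z2; mkV Z2 Z0 Z1 Z1 Z0 Z2; mkV Z1 Z2 Z1 Z2 Z2 Z2; mkV Z0 Z1 Z2 Z2 Z0 Z2; mkV Z2 Z0 Z1 Z0 Z2 Z0; mkV Z2 Z1 Z0 Z0 Z1 Z1; mkV Z2 Z2 Z0 Z0 Z0 Z0; mkV Z0 Z1 Z0 Z2 Z0 Z1; mkV Z0 Z0 Z1 Z0 Z1 Z0; mkV Z1 Z0 Z0 Z2 Z1 Z1; mkV Z1 Z1 Z0 Z1 Z2 Z1; mkV Z1 Z0 Z1 Z2 Z0 Z2; mkV Z2 Z2 Z0 Z0 Z2 Z0; mkV Z2 Z0 Z0 Z0 Z0 Z1; mkV Z1 Z0 Z2 Z2 Z1 Z1; mkV Z2 Z0 Z1 Z2 Z0 Z1; mkV Z2 Z1 Z1 Z0 Z1 Z0; mkV Z1 Z0 Z1 Z1 Z0 Z2; mkV Z2 Z1 Z1 Z1 Z2 Z2; mkV Z2 Z1 Z1 Z2 Z1 Z2; mkV Z0 Z2 Z1 Z1 Z2 Z0; mkV Z1 Z0 Z1 Z0 Z1 Z1; mkV Z0 Z2 Z2 Z2 Z2 Z2; mkV Z1 Z0 Z2 Z2 Z1 Z0; mkV Z0 Z2 Z0 Z1 Z0 Z1; mkV Z1 Z2 Z1 Z0 Z2 Z2; mkV Z1 Z1 Z1 Z2 Z0 Z1; mkV Z1 Z2 Z1 Z1 Z0 Z2; mkV Z0 Z2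 Z0 Z2 Z0 Z0; mkV Z1 Z0 Z2 Z1 Z2 Z0; mkV Z0 Z0 Z1 Z0 Z0 Z2; mkV Z2 Z1 Z0 Z2 Z1 Z2; mkV Z1 Z0 Z0 Z1 Z2 Z2; mkV Z2 Z2 Z0 Z0 Z2 Z1; mkV Z1 Z0 Z2 Z0 Z2 Z0; mkV Z0 Z0 Z2 Z1 Z2 Z0; mkV Z1 Z0 Z0 Z2 Z1 Z2; mkV Z1 Z0 Z1 Z0 Z0 Z2; mkV Z2 Z1 Z0 Z1 Z0 Z1; mkV Z1 Z0 Z2 Z1 Z1 Z0; mkV Z1 Z1 Z1 Z1 Z1 Z0; mkV Z1 Z2 Z1 Z1 Z2 Z2; mkV Z2 Z2 Z1 Z2 Z2 Z0; mkV Z1 Z1 Z0 Z0 Z2 Z2; mkV Z1 Z2 Z2 Z2 Z0 Z0; mkV Z1 Z1 Z0 Z1 Z2 Z2; mkV Z1 Z2 Z2 Z1 Z0 Z0; mkV Z2 Z2 Z0 Z0 Z0 Z2; mkV Z0 Z1 Z1 Z2 Z2 Z1; mkV Z1 Z0 Z1 Z0 Z0 Z0; mkV Z1 Z1 Z0 Z1 Z1 Z0; mkV Z0 Z1 Z1 Z1 Z1 Z2; mkV Z2 Z1 Z2 Z1 Z1 Z2; mkV Z0 Z0 Z1 Z1 Z0 Z2; mkV Z1 Z1 Z2 Z0 Z1 Z2; mkV Z0 Z1 Z1 Z1 Z2 Z2; mkV Z0 Z0 Z0 Z0 Z1 Z1; mkV Z0 Z0 Z0 Z1 Z2 Z0;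 mkV Z1 Z0 Z0 Z1 Z0 Z1; mkV Z1 Z2 Z0 Z2 Z1 Z0; mkV Z0 Z1 Z0 Z2 Z0 Z0; mkV Z2 Z0 Z1 Z2 Z2 Z1; mkV Z0 Z1 Z2 Z2 Z2 Z1; mkV Z2 Z1 Z2 Z1 Z2 Z2; mkV Z1 Z0 Z1 Z0 Z2 Z2; mkV Z0 Z1 Z0 Z1 Z2 Z0; mkV Z2 Z2 Z0 Z1 Z0 Z0; mkV Z2 Z1 Z0 Z2 Z2 Z1; mkV Z1 Z0 Z2 Z1 Z2 Z1; mkV Z0 Z0 Z2 Z0 Z0 Z0; mkV Z0 Z1 Z0 Z0 Z0 Z1; mkV Z0 Z1 Z0 Z1 Z1 Z0; mkV Z1 Z2 Z1 Z2 Z1 Z2; mkV Z1 Z1 Z1 Z1 Z1 Z2; mkV Z0 Z2 Z0 Z2 Z0 Z1; mkV Z0 Z1 Z1 Z2 Z0 Z2; mkV Z1 Z0 Z1 Z1 Z1 Z1; mkV Z0 Z2 Z0 Z2 Z2 Z1; mkV Z2 Z2 Z1 Z2 Z1 Z1; mkV Z1 Z0 Z2 Z0 Z1 Z1; mkV Z2 Z2 Z1 Z2 Z1 Z2; mkV Z2 Z1 Z0 Z1 Z1 Z0; mkV Z1 Z1 Z2 Z1 Z1 Z2; mkV Z0 Z0 Z1 Z2 Z0 Z2; mkV Z1 Z0 Z2 Z0 Z1 Z2; mkV Z0 Z2 Z0 Z0 Z2 Z0; mkV Z1 Z1 Z2 Z1 Z0 Z0; mkV Z1 Z1 Z2 Z0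 Z0 Z1; mkV Z0 Z1 Z1 Z0 Z2 Z2; mkV Z1 Z2 Z2 Z1 Z1 Z2; mkV Z1 Z0 Z2 Z0 Z0 Z0; mkV Z0 Z0 Z2 Z1 Z2 Z1; mkV Z1 Z0 Z0 Z1 Z2 Z1; mkV Z2 Z2 Z0 Z1 Z2 Z1; mkV Z1 Z0 Z1 Z2 Z1 Z0; mkV Z1 Z2 Z2 Z0 Z0 Z0; mkV Z1 Z2 Z2 Z2 Z1 Z0; mkV Z2 Z2 Z0 Z2 Z2 Z2; mkV Z2 Z1 Z2 Z1 Z0 Z0; mkV Z2 Z1 Z1 Z0 Z2 Z2; mkV Z2 Z2 Z0 Z0 Z0 Z1; mkV Z1 Z2 Z0 Z1 Z2 Z2; mkV Z2 Z1 Z1 Z2 Z1 Z1; mkV Z1 Z2 Z1 Z1 Z1 Z1; mkV Z2 Z0 Z1 Z2 Z1 Z1; mkV Z0 Z0 Z0 Z1 Z1 Z0; mkV Z1 Z1 Z2 Z0 Z0 Z0; mkV Z2 Z2 Z0 Z1 Z1 Z1; mkV Z0 Z0 Z1 Z2 Z0 Z0; mkV Z0 Z2 Z1 Z2 Z0 Z1; mkV Z1 Z2 Z1 Z1 Z1 Z0; mkV Z1 Z0 Z0 Z0 Z1 Z0; mkV Z1 Z1 Z1 Z2 Z1 Z0; mkV Z0 Z0 Z1 Z1 Z1 Z2; mkV Z2 Z0 Z1 Z1 Z1 Z1; mkV Z2 Z1 Z1 Z2 Z0 Z2; mkV Z1 Z2 Z0 Z0 Z1 Z2; mkV Z0 Z2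 Z0 Z0 Z0 Z0; mkV Z1 Z1 Z0 Z0 Z1 Z1; mkV Z0 Z2 Z2 Z1 Z2 Z1; mkV Z0 Z2 Z1 Z0 Z2 Z1; mkV Z2 Z2 Z2 Z2 Z1 Z1; mkV Z0 Z0 Z1 Z1 Z1 Z0; mkV Z1 Z0 Z1 Z1 Z0 Z0; mkV Z2 Z2 Z0 Z1 Z2 Z0; mkV Z1 Z2 Z2 Z1 Z0 Z2; mkV Z1 Z2 Z2 Z0 Z2 Z1; mkV Z1 Z1 Z0 Z1 Z0 Z0; mkV Z1 Z1 Z1 Z0 Z1 Z0; mkV Z2 Z2 Z2 Z0 Z1 Z2; mkV Z2 Z0 Z2 Z2 Z1 Z1; mkV Z1 Z1 Z1 Z0 Z0 Z1; mkV Z1 Z0 Z1 Z2 Z0 Z0; mkV Z1 Z2 Z0 Z1 Z1 Z1; mkV Z1 Z2 Z0 Z2 Z0 Z0; mkV Z0 Z2 Z1 Z1 Z0 Z2; mkV Z0 Z1 Z1 Z0 Z1 Z2; mkV Z1 Z0 Z0 Z1 Z2 Z0; mkV Z2 Z0 Z0 Z0 Z1 Z1; mkV Z1 Z0 Z0 Z1 Z1 Z2; mkV Z2 Z2 Z1 Z0 Z1 Z2; mkV Z2 Z0 Z2 Z2 Z1 Z0; mkV Z0 Z2 Z1 Z0 Z2 Z2; mkV Z0 Z0 Z2 Z1 Z1 Z0; mkV Z0 Z0 Z2 Z2 Z1 Z2; mkV Z2 Z1 Z1 Z1 Z1 Z0; mkV Z0 Z0 Z0 Z0 Z0 Z2;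 mkV Z0 Z0 Z1 Z0 Z2 Z1; mkV Z2 Z1 Z0 Z0 Z1 Z0; mkV Z1 Z0 Z2 Z2 Z2 Z1; mkV Z0 Z0 Z2 Z2 Z2 Z2; mkV Z2 Z1 Z0 Z1 Z0 Z2; mkV Z0 Z1 Z2 Z1 Z0 Z1; mkV Z2 Z2 Z1 Z2 Z0 Z2; mkV Z1 Z2 Z1 Z2 Z0 Z2; mkV Z0 Z2 Z2 Z1 Z1 Z0; mkV Z2 Z2 Z1 Z0 Z1 Z1; mkV Z0 Z0 Z1 Z2 Z2 Z2; mkV Z1 Z0 Z0 Z0 Z2 Z1; mkV Z2 Z0 Z2 Z0 Z1 Z0; mkV Z1 Z1 Z2 Z1 Z1 Z1; mkV Z0 Z1 Z2 Z0 Z1 Z0; mkV Z1 Z1 Z2 Z0 Z2 Z0; mkV Z0 Z2 Z0 Z1 Z1 Z0; mkV Z2 Z1 Z2 Z1 Z1 Z1; mkV Z1 Z0 Z2 Z0 Z1 Z0; mkV Z0 Z2 Z1 Z1 Z0 Z1; mkV Z0 Z0 Z2 Z0 Z2 Z0; mkV Z2 Z2 Z0 Z2 Z1 Z2; mkV Z2 Z0 Z0 Z1 Z2 Z2; mkV Z1 Z2 Z0 Z0 Z2 Z2; mkV Z0 Z2 Z0 Z1 Z0 Z2; mkV Z1 Z1 Z0 Z0 Z0 Z0; mkV Z0 Z1 Z2 Z2 Z1 Z0; mkV Z0 Z1 Z1 Z1 Z1 Z1; mkV Z2 Z0 Z2 Z0 Z2 Z2; mkV Z2 Z2 Z2 Z1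 Z0 Z2; mkV Z0 Z1 Z0 Z1 Z0 Z0; mkV Z2 Z1 Z2 Z2 Z0 Z1; mkV Z2 Z0 Z1 Z1 Z2 Z0; mkV Z2 Z1 Z2 Z0 Z1 Z1; mkV Z0 Z1 Z0 Z2 Z0 Z2; mkV Z2 Z0 Z2 Z1 Z0 Z1; mkV Z1 Z0 Z0 Z0 Z0 Z2; mkV Z1 Z1 Z0 Z0 Z1 Z0; mkV Z2 Z0 Z2 Z2 Z0 Z1; mkV Z1 Z2 Z2 Z1 Z2 Z1; mkV Z1 Z2 Z2 Z2 Z1 Z1; mkV Z2 Z0 Z1 Z1 Z2 Z2; mkV Z1 Z2 Z2 Z0 Z2 Z0; mkV Z1 Z0 Z2 Z1 Z0 Z2; mkV Z0 Z0 Z0 Z0 Z2 Z2; mkV Z2 Z0 Z0 Z2 Z0 Z2; mkV Z0 Z0 Z0 Z2 Z1 Z0; mkV Z0 Z2 Z1 Z1 Z1 Z2; mkV Z2 Z0 Z2 Z0 Z1 Z1; mkV Z1 Z2 Z1 Z2 Z1 Z1; mkV Z2 Z1 Z0 Z1 Z2 Z0; mkV Z1 Z0 Z2 Z1 Z1 Z2; mkV Z0 Z2 Z0 Z1 Z0 Z0; mkV Z0 Z1 Z0 Z1 Z0 Z2; mkV Z2 Z0 Z2 Z2 Z2 Z2; mkV Z0 Z2 Z2 Z1 Z0 Z1; mkV Z1 Z1 Z2 Z1 Z2 Z1; mkV Z2 Z2 Z1 Z2 Z2 Z1; mkV Z1 Z2 Z0 Z2 Z2 Z0; mkV Z0 Z1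 Z0 Z1 Z1 Z2; mkV Z2 Z0 Z1 Z0 Z2 Z2; mkV Z1 Z1 Z2 Z1 Z2 Z2; mkV Z0 Z2 Z0 Z2 Z1 Z0; mkV Z1 Z2 Z0 Z1 Z1 Z2; mkV Z1 Z1 Z0 Z2 Z0 Z0; mkV Z0 Z2 Z0 Z2 Z2 Z0; mkV Z2 Z2 Z2 Z2 Z2 Z1; mkV Z2 Z1 Z2 Z1 Z2 Z1; mkV Z2 Z0 Z1 Z2 Z1 Z2; mkV Z0 Z2 Z0 Z0 Z0 Z2; mkV Z0 Z0 Z1 Z0 Z0 Z0; mkV Z2 Z0 Z1 Z2 Z1 Z0; mkV Z1 Z2 Z0 Z1 Z2 Z1; mkV Z0 Z0 Z2 Z0 Z0 Z1; mkV Z0 Z0 Z1 Z2 Z1 Z0; mkV Z2 Z0 Z2 Z0 Z0 Z1; mkV Z2 Z0 Z0 Z1 Z2 Z1; mkV Z2 Z0 Z0 Z2 Z1 Z1; mkV Z2 Z0 Z1 Z0 Z1 Z0; mkV Z1 Z1 Z0 Z0 Z1 Z2; mkV Z1 Z1 Z0 Z0 Z0 Z1; mkV Z2 Z0 Z2 Z0 Z0 Z0; mkV Z0 Z2 Z2 Z1 Z1 Z2; mkV Z0 Z0 Z2 Z2 Z0 Z1; mkV Z0 Z2 Z2 Z2 Z1 Z1; mkV Z2 Z2 Z1 Z0 Z2 Z1; mkV Z2 Z2 Z0 Z2 Z2 Z0; mkV Z1 Z2 Z1 Z2 Z2 Z1; mkV Z0 Z2 Z2 Z2 Z2 Z1;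 mkV Z1 Z2 Z0 Z2 Z0 Z2; mkV Z2 Z2 Z2 Z2 Z2 Z0; mkV Z2 Z0 Z1 Z2 Z2 Z0; mkV Z2 Z1 Z1 Z1 Z0 Z0; mkV Z2 Z1 Z1 Z2 Z0 Z0; mkV Z2 Z2 Z0 Z2 Z1 Z1; mkV Z2 Z1 Z2 Z2 Z1 Z1; mkV Z2 Z2 Z0 Z0 Z1 Z1; mkV Z1 Z1 Z2 Z1 Z1 Z0; mkV Z0 Z0 Z0 Z1 Z1 Z2; mkV Z2 Z0 Z0 Z1 Z0 Z1; mkV Z2 Z0 Z0 Z1 Z2 Z0; mkV Z0 Z1 Z2 Z1 Z1 Z0; mkV Z2 Z1 Z1 Z1 Z2 Z1; mkV Z0 Z1 Z2 Z2 Z1 Z1; mkV Z1 Z2 Z0 Z0 Z0 Z0; mkV Z0 Z2 Z0 Z0 Z1 Z2; mkV Z1 Z1 Z0 Z2 Z0 Z1; mkV Z0 Z2 Z1 Z2 Z1 Z1; mkV Z2 Z2 Z0 Z2 Z2 Z1; mkV Z1 Z2 Z1 Z1 Z1 Z2; mkV Z2 Z1 Z0 Z0 Z0 Z2; mkV Z0 Z2 Z1 Z2 Z0 Z0; mkV Z1 Z2 Z1 Z0 Z0 Z2; mkV Z2 Z1 Z0 Z2 Z0 Z2; mkV Z2 Z1 Z2 Z0 Z2 Z1; mkV Z0 Z0 Z1 Z1 Z2 Z0; mkV Z1 Z2 Z1 Z1 Z2 Z0; mkV Z2 Z2 Z2 Z2 Z2 Z2; mkV Z2 Z0 Z1 Z0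 Z1 Z2; mkV Z2 Z0 Z1 Z2 Z2 Z2; mkV Z2 Z0 Z1 Z1 Z0 Z1; mkV Z1 Z2 Z2 Z1 Z1 Z0; mkV Z2 Z1 Z2 Z1 Z2 Z0; mkV Z0 Z1 Z0 Z0 Z2 Z0; mkV Z1 Z2 Z1 Z1 Z0 Z0; mkV Z1 Z0 Z1 Z0 Z1 Z0; mkV Z0 Z1 Z0 Z1 Z2 Z1; mkV Z2 Z1 Z0 Z0 Z1 Z2; mkV Z1 Z1 Z1 Z1 Z0 Z0; mkV Z1 Z2 Z1 Z1 Z2 Z1; mkV Z0 Z1 Z1 Z2 Z0 Z0; mkV Z1 Z1 Z2 Z2 Z2 Z2; mkV Z0 Z0 Z2 Z0 Z0 Z2; mkV Z2 Z2 Z2 Z1 Z2 Z2; mkV Z0 Z1 Z1 Z0 Z1 Z0; mkV Z1 Z0 Z1 Z2 Z0 Z1; mkV Z0 Z2 Z2 Z0 Z1 Z2; mkV Z2 Z2 Z2 Z1 Z2 Z1; mkV Z1 Z0 Z2 Z2 Z0 Z1; mkV Z1 Z2 Z1 Z0 Z2 Z1; mkV Z1 Z2 Z0 Z0 Z1 Z1; mkV Z0 Z1 Z1 Z1 Z2 Z1; mkV Z2 Z1 Z2 Z1 Z1 Z0; mkV Z2 Z0 Z0 Z1 Z1 Z0; mkV Z0 Z2 Z1 Z0 Z0 Z1; mkV Z2 Z1 Z2 Z0 Z0 Z0; mkV Z0 Z0 Z2 Z0 Z1 Z1; mkV Z2 Z2 Z1 Z1 Z1 Z2; mkV Z1 Z2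 Z0 Z2 Z2 Z1; mkV Z0 Z2 Z1 Z1 Z1 Z1; mkV Z2 Z0 Z1 Z0 Z0 Z1; mkV Z2 Z2 Z0 Z1 Z2 Z2; mkV Z2 Z2 Z2 Z0 Z1 Z0; mkV Z2 Z1 Z1 Z2 Z2 Z2; mkV Z1 Z0 Z0 Z2 Z0 Z0; mkV Z2 Z0 Z1 Z2 Z0 Z0; mkV Z0 Z1 Z1 Z0 Z0 Z1; mkV Z1 Z2 Z1 Z2 Z0 Z1; mkV Z0 Z1 Z1 Z0 Z0 Z0; mkV Z1 Z1 Z1 Z1 Z2 Z0; mkV Z2 Z1 Z1 Z0 Z0 Z2; mkV Z2 Z0 Z2 Z2 Z0 Z2; mkV Z1 Z1 Z1 Z2 Z2 Z0; mkV Z0 Z1 Z2 Z0 Z2 Z2; mkV Z0 Z0 Z0 Z1 Z0 Z0; mkV Z0 Z1 Z1 Z0 Z2 Z0; mkV Z1 Z0 Z0 Z2 Z2 Z2; mkV Z0 Z0 Z2 Z0 Z1 Z0; mkV Z0 Z0 Z0 Z0 Z2 Z1; mkV Z1 Z2 Z1 Z1 Z0 Z1; mkV Z1 Z1 Z1 Z2 Z0 Z2; mkV Z2 Z2 Z0 Z2 Z0 Z1; mkV Z1 Z0 Z1 Z1 Z1 Z2; mkV Z0 Z1 Z1 Z2 Z1 Z1; mkV Z0 Z2 Z0 Z1 Z2 Z2; mkV Z1 Z0 Z1 Z0 Z0 Z1; mkV Z2 Z0 Z2 Z0 Z2 Z1; mkV Z1 Z1 Z2 Z2 Z1 Z0;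 mkV Z1 Z0 Z2 Z0 Z2 Z2].

Definition t3n (t : t3) : nat := match t with Z0 => 0 | Z1 => 1 | Z2 => 2 end.
Definition code (v : V) : nat := t3n (c0 v) + 3 * (t3n (c1 v) + 3 * (t3n (c2 v) + 3 * (t3n (c3 v) + 3 * (t3n (c4 v) + 3 * t3n (c5 v))))).
Definition vinv (v : V) := nth vzero invlist (code v).

Definition dofV (l : seq (V * nat * nat)) (x : V) : V :=
  foldr (fun t acc => vadd (vmul t.1.1 (vmul (vfr t.1.2 x) (vfr t.2 x))) acc) vzero l.
Definition vm1 := vopp (e 0).
Definition lV1 : seq (V * nat * nat) := [:: (e 0, 5, 3); (vm1, 5, 1); (e 0, 4, 2); (vm1, 4, 0);
  (vm1, 3, 3); (e 0, 3, 1); (vm1, 2, 0); (vm1, 0, 0)].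
Definition lV2 : seq (V * nat * nat) := [:: (e 0, 5, 3); (vm1, 5, 1); (vopp (vpow lamV 2), 4, 2);
  (vpow lamV 2, 4, 0); (vm1, 3, 3); (e 0, 3, 1); (vpow lamV 2, 2, 0); (vpow lamV 2, 0, 0)].
Definition linW (W : V6) (v : V) : V := lin v (at6 W).
Definition ft (LV : V -> V) (a : V) : V :=
  mkV (dot a (LV (e 0))) (dot a (LV (e 1))) (dot a (LV (e 2)))
      (dot a (LV (e 3))) (dot a (LV (e 4))) (dot a (LV (e 5))).
Definition GA0 : V6 := M6 (mkV Z2 Z2 Z0 Z1 Z0 Z0) (mkV Z0 Z2 Z2 Z0 Z1 Z0) (mkV Z0 Z0 Z2 Z2 Z0 Z1) (mkV Z1 Z1 Z2 Z2 Z0 Z0) (mkV Z0 Z1 Z1 Z2 Z2 Z0) (mkV Z0 Z0 Z1 Z1 Z2 Z2).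
Definition GAi0 : V6 := M6 (mkV Z1 Z0 Z1 Z2 Z2 Z1) (mkV Z1 Z2 Z2 Z1 Z0 Z2) (mkV Z2 Z0 Z0 Z2 Z0 Z0) (mkV Z0 Z2 Z0 Z0 Z2 Z0) (mkV Z0 Z0 Z2 Z0 Z0 Z2) (mkV Z2 Z2 Z1 Z2 Z2 Z0).
Definition GL0 : V6 := M6 (mkV Z2 Z0 Z0 Z1 Z2 Z0) (mkV Z1 Z1 Z2 Z0 Z1 Z0) (mkV Z2 Z2 Z0 Z0 Z2 Z1) (mkV Z1 Z2 Z2 Z1 Z2 Z2) (mkV Z2 Z2 Z2 Z2 Z0 Z1) (mkV Z1 Z1 Z1 Z0 Z1 Z2).
Definition GLi0 : V6 := M6 (mkV Z2 Z0 Z0 Z0 Z2 Z2) (mkV Z2 Z2 Z0 Z2 Z1 Z2) (mkV Z0 Z0 Z1 Z0 Z0 Z1) (mkV Z2 Z2 Z1 Z1 Z2 Z2) (mkV Z2 Z2 Z1 Z1 Z0 Z0) (mkV Z0 Z1 Z2 Z0 Z0 Z1).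
Definition GA1 : V6 := M6 (mkV Z1 Z0 Z0 Z0 Z0 Z0) (mkV Z0 Z0 Z0 Z1 Z0 Z0) (mkV Z1 Z1 Z2 Z0 Z1 Z0) (mkV Z0 Z1 Z1 Z0 Z1 Z0) (mkV Z0 Z1 Z1 Z2 Z1 Z2) (mkV Z1 Z2 Z2 Z1 Z0 Z2).
Definition GAi1 : V6 := M6 (mkV Z1 Z0 Z0 Z0 Z0 Z0) (mkV Z2 Z2 Z2 Z0 Z1 Z2) (mkV Z2 Z0 Z1 Z2 Z0 Z0) (mkV Z0 Z1 Z0 Z0 Z0 Z0) (mkV Z2 Z1 Z0 Z2 Z2 Z1) (mkV Z0 Z2 Z0 Z1 Z2 Z0).
Definition GL1 : V6 := M6 (mkV Z1 Z0 Z0 Z0 Z0 Z0) (mkV Z0 Z0 Z0 Z1 Z0 Z0) (mkV Z1 Z1 Z2 Z0 Z1 Z0) (mkV Z0 Z1 Z1 Z0 Z1 Z0) (mkV Z0 Z1 Z1 Z2 Z1 Z2) (mkV Z1 Z2 Z2 Z1 Z0 Z2).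
Definition GLi1 : V6 := M6 (mkV Z1 Z0 Z0 Z0 Z0 Z0) (mkV Z2 Z2 Z2 Z0 Z1 Z2) (mkV Z2 Z0 Z1 Z2 Z0 Z0) (mkV Z0 Z1 Z0 Z0 Z0 Z0) (mkV Z2 Z1 Z0 Z2 Z2 Z1) (mkV Z0 Z2 Z0 Z1 Z2 Z0).
Definition repsF : seq V := [:: mkV Z0 Z0 Z0 Z0 Z0 Z0; mkV Z1 Z0 Z0 Z0 Z0 Z0; mkV Z0 Z1 Z0 Z0 Z0 Z0; mkV Z1 Z1 Z0 Z0 Z0 Z0; mkV Z2 Z1 Z0 Z0 Z0 Z0; mkV Z2 Z1 Z1 Z0 Z0 Z0; mkV Z0 Z1 Z0 Z1 Z0 Z0; mkV Z0 Z2 Z0 Z1 Z0 Z0].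
Definition repsU : seq V := [:: mkV Z0 Z0 Z0 Z0 Z0 Z0; mkV Z1 Z0 Z0 Z0 Z0 Z0; mkV Z0 Z1 Z0 Z0 Z0 Z0; mkV Z1 Z1 Z0 Z0 Z0 Z0; mkV Z2 Z0 Z1 Z0 Z0 Z0].
Definition wordFlist : seq (seq nat) := [:: [:: ]; [:: ]; [:: 1; 0; 1; 0; 1; 0; 1; 1; 1]; [:: ]; [:: ]; [:: ]; [:: 1; 1; 1]; [:: 1; 1; 0; 1; 1; 0; 1; 1; 0]; [:: 1; 0; 1; 0; 1; 1; 1; 1; 0]; [:: 0; 1]; [:: 1; 1; 1]; [:: 0; 1; 0; 1]; [:: 0; 0; 0; 0]; [:: 1; 1; 1]; [:: ]; [:: 0; 0; 0]; [:: 1; 0; 1; 0; 1; 0]; [:: 0; 1; 1; 1; 1; 0; 1]; [:: 1; 1; 1; 0; 1]; [:: 0; 0; 1; 0; 0; 1; 0]; [:: 1; 0; 1; 0; 1; 0]; [:: 1; 1; 0; 1]; [:: 1; 0; 0; 1; 1; 0; 0; 1; 1; 0]; [:: 1; 1; 1]; [:: 0; 1; 1; 0; 1]; [:: 0; 1]; [:: 0; 1; 0; 1; 0; 1]; [:: 0; 0; 1; 1]; [:: 0]; [:: 1; 0; 0; 1; 0; 0; 1]; [:: ]; [:: 0; 0; 1]; [:: 1; 1; 0; 1; 1; 0]; [:: ]; [:: 1; 1; 0; 0; 1; 1; 0]; [:: 0; 1; 0; 0]; [:: 1; 0; 1; 0; 0]; [:: 1; 0]; [:: 1; 0; 0; 1;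 0; 0; 1]; [:: 1]; [:: 0; 0; 1; 0; 1]; [:: 0; 1; 0; 0]; [:: 0; 0; 0; 0; 0]; [:: 1; 1; 1; 1; 0; 1]; [:: 0; 0; 0; 1; 0]; [:: 1; 0; 1; 0; 0]; [:: 1; 0; 0; 1; 0; 0; 1; 1; 1]; [:: 0; 1; 0; 1; 1; 0]; [:: 0; 1; 1; 0; 1; 0]; [:: 1; 0; 1; 1]; [:: 0; 1; 0; 0; 1]; [:: 1; 1; 1; 1; 1]; [:: 0; 0; 1; 0; 1; 0; 1]; [:: 0; 1; 0; 0; 1; 1; 1; 1; 1]; [:: 1; 0; 1; 0; 0]; [:: 0; 1; 0; 1; 1; 0]; [:: 1; 1; 0; 1; 0; 1; 0; 1; 1; 0]; [:: 0; 1; 0; 1; 0]; [:: 1; 1; 0; 0; 1]; [:: 0; 1; 1; 1; 0; 1]; [:: 0; 1; 0; 1; 1; 1; 1; 0; 1]; [:: 0; 1; 0; 1; 0; 0; 1; 1; 0]; [:: 0; 0; 0; 0; 0; 0; 1; 0]; [:: 0; 0; 1; 1]; [:: 1; 0; 0; 1; 0; 0; 1]; [:: 0; 0; 1; 0; 1; 1; 1; 1]; [:: 0; 1; 1; 0; 1; 1; 0; 1]; [:: 0; 0; 0; 0; 0; 0]; [:: 0; 1; 1; 1]; [:: 1; 0; 0; 1; 1]; [:: 1; 1; 0; 0]; [:: 0; 1; 0; 0; 1; 0; 1]; [:: 0; 0; 1; 1]; [:: 0; 0; 1; 0; 1; 1]; [:: 0; 0; 0; 0; 1; 0; 0]; [::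 1; 0; 0; 1; 1; 1; 1; 1]; [:: 0; 0; 0; 0; 0; 0; 0; 1; 0; 0]; [:: 0; 1; 0; 1; 0; 1; 1; 0; 1]; [:: 0; 0; 0; 0; 1; 0]; [:: 0; 0; 0; 0; 0; 0; 1]; [:: 1; 0; 0; 1; 0; 0]; [:: 1; 1; 0; 1; 1]; [:: 0; 1; 1; 0]; [:: 0; 0; 1; 1; 0; 0; 1; 1; 0]; [:: 0; 1; 0; 1; 0; 0; 1; 1]; [:: 0; 0; 1; 0; 1; 0; 0]; [:: 0; 0; 0]; [:: 0; 1; 1; 0; 0; 1; 1; 0]; [:: 0; 0; 1; 0; 1; 0; 0]; [:: 0; 1; 0; 1; 0]; [:: 0; 0; 1; 0; 0; 1; 0; 1]; [:: 0; 1; 0; 0; 1; 1; 0]; [:: 1; 1; 0; 0; 1; 1; 0; 1; 1; 0]; [:: 1; 0; 1; 0; 1; 1; 1]; [:: 0; 0; 0; 1; 0; 0]; [:: 0; 1; 0; 1; 0; 1; 1; 1]; [:: 0; 1; 0; 0; 1; 0; 1; 0; 1]; [:: 1; 0; 1; 0; 1; 1; 0]; [:: 0; 0; 0; 0; 0; 0; 1; 0; 0]; [:: 0; 0]; [:: 0; 0; 0; 0; 0; 0; 0]; [:: 0; 0; 0; 0; 1]; [:: 0; 1; 1; 1; 0]; [:: 0; 1; 1; 1; 0; 1]; [:: 1; 0; 0; 1; 0; 0]; [:: 0; 1; 0; 0; 1; 0; 0]; [:: 0; 0; 1; 1; 1]; [:: 0; 0; 0]; [:: 1; 0; 1; 1;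 1; 0]; [:: 1; 1; 1; 1]; [:: 1; 0; 1; 1; 0]; [:: 1; 0; 0; 1; 0; 0; 1; 0; 1]; [:: 1; 0; 1; 0; 1; 1; 1; 1]; [:: 1; 0; 1; 1; 1; 1; 1; 0]; [:: 0; 1; 1]; [:: 0; 1; 0; 0; 1; 0; 1; 1; 1]; [:: 0; 0; 1; 0]; [:: 0; 1; 1; 1; 1; 1]; [:: 1; 0; 1]; [:: 0; 1; 1; 0; 1; 0; 1]; [:: 0; 0; 0; 0; 0; 0; 0; 1; 0; 0]; [:: 0; 0; 0; 0; 0; 0; 0]; [:: 0; 0; 1; 0]; [:: 1; 0; 0]; [:: 0; 1; 1; 0; 0; 1]; [:: 0; 0; 0; 0; 0]; [:: 0; 1; 0; 1; 0; 0; 1; 1; 0; 1]; [:: 1]; [:: 0; 0; 1; 1; 1; 1; 0]; [:: 0; 1; 1]; [:: 0; 1; 0; 0; 1; 0]; [:: 0; 0; 0; 0; 0; 1]; [:: 0; 1; 0; 0; 1; 0; 0]; [:: 1; 0; 1; 0; 1]; [:: 0; 0; 1; 1; 0; 1]; [:: 0; 1; 0; 1; 1; 1; 0; 1]; [:: 1; 0; 0; 1]; [:: 0; 1; 0; 1; 0; 0]; [:: 1; 0; 1; 1; 1; 1; 1]; [:: 1; 1; 1; 0; 0; 1; 1; 0]; [:: 0; 0; 1; 0; 1; 0]; [:: 1; 0; 0; 1; 0; 1; 0]; [:: 1; 1; 1; 1; 0]; [:: 0; 0; 0; 0; 0; 0; 0; 1]; [:: 1; 1; 0; 0]; [:: 1;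 1; 0; 1]; [:: 0; 0; 1; 0; 0]; [:: 0; 0; 1; 0; 1; 0; 0; 1]; [:: 1; 0; 0; 1; 0; 1]; [:: 1; 0; 0; 1; 1; 0]; [:: 0; 1; 1; 1; 1; 0]; [:: 0; 0; 0; 1]; [:: 0; 0; 1; 0; 1; 0; 1]; [:: 0; 0; 0; 0; 0; 1; 0; 0]; [:: 0; 0; 0; 0; 1; 0; 0]; [:: 1; 1; 1; 1; 1; 0]; [:: 0; 0; 1; 1; 0; 0; 1; 1; 0; 1]; [:: 0; 0; 0; 0; 0; 0; 0; 0]; [:: 0; 0; 0; 0; 0; 0; 0; 1]; [:: 0; 0; 1; 0; 1; 0; 0; 1]; [:: 1; 1; 0; 1]; [:: 1; 0; 0; 1; 1; 0; 1; 1; 1]; [:: 0; 1; 1; 0; 0; 1; 1; 0]; [:: 0; 1; 1; 0; 1; 1]; [:: 0; 0; 1; 0; 1; 0; 0]; [:: 1; 1; 0; 1; 1]; [:: 1; 1]; [:: 0; 1; 1; 0]; [:: 1; 1; 0; 1; 1]; [:: 1; 0; 1; 0; 0; 1; 1; 1; 1; 0]; [:: 0; 1; 1; 0]; [:: 1; 0; 1; 0; 0; 1; 1; 1; 1]; [:: 0; 0; 0; 0; 0; 0; 0; 0; 1; 0]; [:: 1; 0; 0; 1; 1; 0; 1; 1; 1; 0]; [:: 1; 0; 1; 0]; [:: 1; 0; 1; 0; 0; 1; 0; 1; 1; 1]; [:: 1; 0; 1; 0; 0; 1]; [:: 1; 0; 1; 0; 0; 1]; [:: 0; 0; 1; 0;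 1]; [:: 1; 0; 1; 0; 0; 1; 1]; [:: 0; 1; 0]; [:: 0; 0; 0]; [:: 1; 1; 0; 0; 1; 0]; [:: 1; 0; 1; 1; 0; 1]; [:: 0; 0; 1; 0]; [:: 0; 0; 1; 1; 0; 0; 1; 1]; [:: 0; 1; 0; 0; 1; 0; 0; 1; 1; 1]; [:: 1; 1; 1; 1; 1]; [:: 0; 0; 0; 0; 0; 0; 0; 0; 1]; [:: 1; 1; 0; 1; 1; 1; 0]; [:: 1; 1; 0]; [:: 0; 0; 1; 1; 0]; [:: 1; 0; 1; 1]; [:: 0; 0; 1; 0; 0]; [:: 0; 1; 0; 1; 0; 1; 1; 0]; [:: 1; 1; 0; 1; 1; 0; 0; 1; 1; 0]; [:: 0; 1; 1]; [:: 1; 0; 1; 1; 1; 0; 1]; [:: 0; 1; 0]; [:: 0; 1; 0; 1; 0; 1; 1; 1; 0]; [:: 1; 0]; [:: 0; 1; 1; 0; 1]; [:: 0; 0; 0; 0; 0; 0]; [:: 0; 1; 0; 1; 0; 0; 1]; [:: 0; 1; 1; 0; 1; 1; 1]; [:: 0; 0; 1; 0; 0]; [:: 1; 0; 0; 1; 0; 1; 1; 1; 1]; [:: 0; 1; 0; 0; 1]; [:: 0; 0; 0; 0; 0; 0; 0; 1]; [:: 0; 1; 0; 1; 0; 0; 1]; [:: 0; 0; 1; 0; 1; 0; 1; 1; 0]; [:: 0; 1; 1; 1]; [:: 0; 0; 0; 0; 0; 0; 0; 1; 0]; [:: 0; 1; 1; 0; 1]; [:: 1; 1; 0; 0; 1];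 [:: 0; 1; 1; 0; 0; 1; 0]; [:: 0; 0; 1; 1; 0; 1; 1]; [:: 0; 1; 0; 0; 1; 0; 1; 0]; [:: 0; 1; 1; 0; 1; 1; 0]; [:: 0; 0; 1; 0; 1; 0]; [:: 1; 0; 1; 1; 0]; [:: 1; 0; 1; 1; 1; 1]; [:: 1; 0; 1; 0; 1; 1]; [:: 1; 0; 0; 1; 0; 1; 0; 1; 1; 1; 0]; [:: 1; 0; 0; 1; 0; 0; 1; 0; 1; 1; 1]; [:: 1; 1; 0; 1; 1; 0; 1]; [:: 1; 0; 1; 0; 0; 1; 1; 0]; [:: 0; 0; 0; 0; 1; 0]; [:: 1; 0; 1; 0]; [:: 1; 0; 0; 1; 1]; [:: 0; 1; 0; 0; 1; 0; 0; 1]; [:: 1; 0; 0]; [:: 1; 0; 0]; [:: 1; 0; 1]; [:: 1; 0; 1; 1; 0; 0; 1; 1; 0]; [:: 1; 0; 0; 1; 1; 1]; [:: 1]; [:: 0; 0; 0; 0; 0; 1]; [:: 1; 0; 0; 1; 1; 1; 1; 1]; [:: 0; 0; 1; 0; 0; 1; 1]; [:: 0; 0; 0; 1; 0]; [:: 0; 0; 0; 0; 0; 0; 1; 0; 0]; [:: 0; 0; 1; 0; 0; 1; 1; 1; 1; 1]; [:: 0; 0; 1; 0; 1; 1; 1; 1; 0]; [:: 1; 1; 0; 0; 1; 1; 0; 0; 1; 1; 0]; [:: 0; 0; 0; 0; 0; 0; 1; 0; 0]; [:: 0; 1; 0; 0; 1; 0; 1; 1; 1; 0; 1]; [:: 0;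 1; 0; 0; 1; 0]; [:: 0; 0; 1; 0; 0; 1]; [:: 1; 1; 0; 0; 1; 0; 1; 0; 1; 1; 0]; [:: 0; 1; 1; 0; 0]; [:: 0; 0; 1; 1; 0; 1]; [:: 0; 0; 0; 0]; [:: 1]; [:: 0; 0; 1; 0; 0; 1]; [:: 0; 1; 1; 0; 1; 0; 1]; [:: 0; 1; 1; 0; 0]; [:: 0; 0; 1; 1; 0]; [:: 0; 1; 0; 0; 1; 0; 0; 1]; [:: 1; 1; 1; 1; 0; 1]; [:: 1; 0; 0; 1; 0; 0; 1; 1]; [:: 1; 0; 0]; [:: 0; 1; 1; 0; 1; 1; 0]; [:: 0; 1; 0; 1; 1]; [:: 0; 0; 0; 0]; [:: 1; 0; 1; 0; 1]; [:: 0; 1; 1; 0; 1; 1; 0; 0; 1; 1; 0]; [:: 0; 0; 1; 0; 1; 0]; [:: 1; 1; 0; 0; 1; 0; 1]; [:: 0; 1; 1; 0; 0]; [:: 0; 1; 0; 0; 1; 0; 1]; [:: 0; 1; 1; 0; 0; 1; 0]; [:: 0; 0; 1; 0; 1; 0; 1]; [:: 1; 0; 1; 1]; [:: 1; 1; 0]; [:: 0; 0; 0; 0; 0; 0]; [:: 1; 0; 0; 1; 0; 1; 0; 1; 1; 1]; [:: 0; 0; 0; 0; 1; 0; 0]; [:: 1; 1; 0]; [:: 0; 0; 0; 0; 0; 0; 0; 0; 1; 0]; [:: 0; 0; 0; 0; 0; 0; 0; 0]; [:: 0; 0; 0; 0; 0; 1; 0]; [:: 1; 1; 0; 1; 1;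 1; 0]; [:: 0; 1; 0; 0; 1; 0; 1; 1]; [:: 0; 1; 0; 1; 0; 1; 0; 1]; [:: 0; 1; 0; 1; 1; 1]; [:: 1; 1; 0; 1; 1; 1]; [:: 0; 0; 1; 0; 0]; [:: 0; 1; 0]; [:: 1; 0]; [:: 1; 1; 0; 0; 1]; [:: 1; 1; 0; 0]; [:: 1; 0; 0; 1]; [:: 0; 0; 1; 0; 1; 0]; [:: 0; 1; 0; 1; 0; 0; 1; 0; 1]; [:: 1; 0; 0; 1; 1; 1; 1]; [:: 1; 1; 0; 1; 1; 1]; [:: 1; 0; 0; 1; 0; 1; 0; 1; 1; 0]; [:: 1; 1; 1; 0; 1; 1; 0]; [:: 0; 1; 0; 1; 0]; [:: 0; 0]; [:: 0; 0; 1; 0; 1; 0; 0; 1; 1; 1]; [:: 1; 0; 1; 0; 0; 1; 0]; [:: 0; 0; 1; 1; 1]; [:: 0; 0; 1; 0; 1; 0; 1; 1; 1; 0]; [:: 1; 0; 0; 1; 0; 0; 1; 1]; [:: 0; 0; 0; 0; 0; 1; 0; 0]; [:: 1; 1; 0; 0; 1; 0]; [:: 1; 1; 0; 1]; [:: 1; 0; 1; 0]; [:: 0; 0]; [:: 0; 0; 0; 0; 0; 0; 0; 0; 1; 0]; [:: 0; 0; 1; 0; 0; 1; 0]; [:: 0; 0; 1]; [:: 0; 1; 0; 1; 1; 1; 1; 0]; [:: 0; 0; 0; 0; 0; 0; 0; 1; 0]; [:: 0; 1; 1; 1; 1; 0; 0; 1; 1; 0]; [:: 1; 0; 1; 0;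 0; 1; 1; 0; 1]; [:: 0; 0; 0; 0; 0; 0; 0; 1; 0]; [:: 0; 0; 0; 1; 0; 0]; [:: 1; 1; 0; 1; 0; 1]; [:: 0; 0; 0; 1]; [:: 1; 0; 0; 1; 0; 1; 1]; [:: 1; 1; 0; 1]; [:: 1; 0; 1; 1; 1; 1; 1]; [:: 0; 0; 1; 0; 0; 1; 1; 1]; [:: 0; 1; 0; 1; 0; 0]; [:: 1; 1; 0; 0]; [:: 1; 1; 0; 0; 1]; [:: 0; 0; 0; 0; 0; 0; 0; 0]; [:: 1; 0; 0; 1; 0; 1; 0]; [:: 0; 1; 0; 1; 0; 0]; [:: 1; 0; 1; 0; 0; 1; 0; 1]; [:: 0; 0; 0; 0; 0; 1; 0; 0]; [:: 0; 1; 1; 1; 1; 1]; [:: 1; 1; 1; 1; 0]; [:: 0; 1; 0; 0; 1; 1; 1; 1]; [:: 0; 0; 1; 0; 1; 1; 1; 0]; [:: 1; 0; 0; 1; 0; 1]; [:: 0; 0; 0; 0]; [:: 1; 1; 1; 1; 1; 0]; [:: 0; 1; 0; 1; 0; 1; 1; 1; 0; 1]; [:: 0; 1; 1; 0]; [:: 0; 0; 0; 0; 0; 0]; [:: 0; 0; 1; 1; 1; 1; 1; 0]; [:: 0; 1; 1; 1; 1; 0]; [:: 0]; [:: 1; 0; 0; 1]; [:: 0; 1; 1; 0]; [:: 1; 1; 0; 0; 1; 0; 1]; [:: 0; 0; 0; 0; 1; 0; 0]; [:: 1; 0; 1; 0]; [:: 0; 1; 1; 0; 1; 1; 1; 0];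 [:: 1]; [:: 0; 0; 1; 0; 1; 0; 0; 1]; [:: 1; 0; 0; 1]; [:: 1; 0; 0; 1; 0; 0; 1; 1; 1; 1; 0]; [:: 1; 0; 0]; [:: 0; 0; 1; 1; 1; 1; 0]; [:: 0; 0; 1; 0; 0]; [:: 0; 1; 1; 1; 1; 1]; [:: 1; 0; 1; 1; 1; 0; 1]; [:: 1; 0; 1; 0; 1]; [:: 0; 0; 1; 1; 0; 1; 1]; [:: 0; 0; 1; 0]; [:: 1; 0; 1; 1; 1; 1]; [:: 0; 1; 0; 1; 0; 0; 1; 0]; [:: 0; 1; 1; 0; 0; 1; 1; 1]; [:: 0; 0; 1; 0; 1; 1; 1; 0; 1]; [:: 1; 1; 0; 1; 0]; [:: 1; 0; 1; 1; 0]; [:: 0; 1; 0; 1; 0; 1; 1]; [:: 0; 1; 1]; [:: 0; 0; 1; 0; 1; 1; 1; 0; 1]; [:: 0; 0; 1; 0; 0]; [:: 1; 0; 1; 0; 1]; [:: 0; 1; 0; 0; 1; 0; 1; 0; 1; 1; 1]; [:: 0; 1; 0; 0; 1; 0]; [:: 0; 1; 0; 0; 1; 0; 0]; [:: 0; 0; 1; 0; 1; 1]; [:: 0; 0; 0; 1; 0; 0]; [:: 0; 1; 0; 1; 1; 1; 1; 1]; [:: 0; 0; 0; 0; 1]; [:: 1; 0; 1; 0; 1; 1; 0]; [:: 0; 1; 1; 1; 1; 0; 1]; [:: 0; 1; 0; 1; 0]; [:: 0; 0; 0; 1; 0; 0]; [:: 0; 1; 0; 1; 1]; [:: 0; 0;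 1; 0]; [:: 0; 1; 0; 0; 1; 1; 0; 1; 1; 1]; [:: 0; 1; 0; 0; 1; 0; 1; 1; 1; 0]; [:: 0; 0; 0]; [:: 1; 0; 1; 0; 0]; [:: 0; 1; 0; 1]; [:: 0; 0; 1; 0; 1]; [:: 1; 1; 0; 0; 1; 1; 0; 1]; [:: 0; 1; 1; 1; 0]; [:: 1; 0; 1; 1; 0; 1; 1; 0]; [:: 0; 0; 1; 0; 0; 1; 1]; [:: 0; 0]; [:: 0; 1; 1; 0; 1; 1]; [:: 1; 0; 1; 0; 0]; [:: 0; 0]; [:: 0; 0; 1; 0; 1; 1; 1; 1; 1]; [:: 1; 0; 1; 0; 0; 1]; [:: 1; 1; 0; 0; 1; 1]; [:: 0; 0; 1]; [:: 0; 0; 1; 1; 0; 0; 1; 1; 1]; [:: 1; 0; 0; 1; 1]; [:: 0; 0; 1; 1; 1; 1]; [:: 1; 0; 0; 1; 0]; [:: 0; 1; 0; 0]; [:: 0]; [:: 0; 1; 0; 1; 0; 0; 1; 1; 0]; [:: 0; 0; 1; 1]; [:: 0; 1; 0; 1; 0; 1; 0]; [:: 0; 0; 0; 0; 0; 0; 0; 1; 0; 0]; [:: 0; 1; 0; 0]; [:: 1; 0; 0; 1; 0; 0]; [:: 1; 0; 0; 1; 1; 1; 1; 0]; [:: 0; 1; 0; 0; 1; 1; 1]; [:: 1; 0; 1]; [:: 0; 0; 1; 1; 0; 0]; [:: 0; 0; 0; 0; 0; 0; 1]; [:: 1; 0; 0; 1; 0; 1; 1; 1; 0]; [:: 0; 0;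 1; 1; 0; 0]; [:: 0; 1; 0; 1; 1; 1; 0]; [:: 1; 0; 1; 0; 1; 0; 1; 1; 1; 0]; [:: 1; 0; 0; 1; 0]; [:: 1; 0; 0; 1; 1; 1; 1; 1]; [:: 1; 0]; [:: 0; 0; 1; 1; 0; 1; 1; 1; 0]; [:: 0; 0; 1; 1; 1; 1; 1]; [:: 0; 1; 0; 0; 1; 0; 0; 1; 1]; [:: 1; 0; 1; 0; 0; 1; 1]; [:: 1; 0; 0; 1; 1; 1; 1; 1]; [:: 0; 1; 0; 1; 1; 0; 1; 1; 1]; [:: 0; 0; 1]; [:: 0; 1; 0; 1; 0]; [:: 1; 1; 0; 0; 1; 1]; [:: 0; 1; 0; 1; 0; 1; 0]; [:: 1; 0; 1; 0; 1; 1; 1; 0]; [:: 1; 1; 0; 0; 1]; [:: 1; 0; 0; 1; 0; 1; 1; 1; 0]; [:: 0; 1; 0; 1; 0; 1]; [:: 1; 0; 0; 1; 0; 1; 1; 1; 0; 1]; [:: 0; 1; 0; 0; 1; 0]; [:: 0; 1; 0; 1; 0; 1]; [:: 1; 1; 0; 0; 1; 1; 1]; [:: 1; 0; 0; 1; 0; 1; 0; 1]; [:: 0; 0; 1; 1; 1; 1; 1]; [:: 1; 1; 0; 0]; [:: 0; 1; 0; 0; 1; 1; 1; 1; 0; 1]; [:: 1; 0; 1; 0; 1; 0; 1]; [:: 1; 0; 1; 1; 0; 1; 1; 1; 0]; [:: 0]; [:: 1; 0; 0; 1; 1]; [:: 0; 0; 0; 0; 0; 0; 0; 1; 0; 0];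 [:: 0; 0; 1; 0; 1]; [:: 0; 1; 0]; [:: 0; 1; 0; 1; 1; 1; 1]; [:: 0; 1]; [:: 1; 1]; [:: 1; 1; 1; 0; 1]; [:: 0; 0; 1; 1; 0; 0; 1]; [:: 0; 0; 1]; [:: 0; 1; 0; 1]; [:: 0; 0; 0; 0; 0; 0; 0; 0]; [:: 1; 1; 1; 1; 0; 1]; [:: 1; 0; 0; 1; 0; 1]; [:: 0; 1]; [:: 0; 0]; [:: 0; 0; 1; 0; 1; 0; 1; 1]; [:: 0; 1; 1; 0; 0; 1; 0; 1]; [:: 1; 0]; [:: 1; 0; 0; 1; 0]; [:: 0; 0; 1; 1; 0; 0; 1; 1; 1]; [:: 1; 1; 1; 1]; [:: 1; 0; 0; 1; 0]; [:: 0; 0; 0; 0; 0; 1; 0]; [:: 0]; [:: 0; 0; 1; 1; 0; 1; 1; 0]; [:: 0; 0; 1; 0; 0; 1; 0; 1; 1; 1]; [:: 0; 0; 1; 0]; [:: 0; 0; 0; 1; 0; 0]; [:: 0; 0; 1; 0; 0; 1; 0]; [:: 0; 1; 1; 1; 1; 1]; [:: 0; 0; 1; 0]; [:: 1; 0; 1; 1; 1; 1; 0; 1]; [:: 0; 0; 0; 0]; [:: 1; 0; 0]; [:: 0; 0; 1; 0; 0; 1]; [:: 1; 0; 1; 1; 1; 1; 0; 1]; [:: 0; 1; 1; 0; 0]; [:: 1; 0; 1]; [:: 0; 0; 0; 0; 0; 1]; [:: 0; 0; 1; 0; 0; 1; 0; 1]; [:: 1; 1; 1; 1]; [:: 0;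 1; 1]; [:: 0; 0; 1; 0; 0; 1]; [:: 0; 1; 0; 0; 1; 1; 0; 1]; [:: 1; 0; 1; 0; 0; 1; 0; 1; 1; 1; 0]; [:: 1; 1; 1; 1; 0; 1; 1; 0]; [:: 1; 0; 0; 1; 0; 0; 1; 0]; [:: 0; 1; 0; 1; 0; 0; 1; 0; 1; 1; 1]; [:: 0; 1; 1; 0; 0]; [:: 0; 0; 0; 0; 1; 0]; [:: 1; 0; 1; 0; 1]; [:: 0; 0; 1; 0; 1; 1; 1]; [:: 1; 0; 0; 1; 1; 0; 1; 1; 0]; [:: 1; 0; 1; 1; 1; 0]; [:: 1; 0; 0; 1]; [:: 0; 0; 1; 0; 0; 1]; [:: 1; 0; 1; 1; 1; 1; 0]; [:: 1; 1]; [:: 1; 0; 1; 0; 1; 0; 0; 1; 1; 0]; [:: 1; 0; 1; 0; 0; 1]; [:: 0; 1; 0; 1; 1; 0; 1]; [:: 0; 1; 1; 1; 1; 1; 0]; [:: 1; 0; 1; 0; 0; 1; 1; 1; 1]; [:: 1; 1; 0; 1]; [:: 0; 1; 1; 0; 1; 1; 1]; [:: 0; 0; 0; 1]; [:: 0; 0; 1; 1; 1; 1; 0; 1]; [:: 0; 0; 0; 0; 0; 0; 0]; [:: 0; 0; 0; 0; 0; 0; 0; 1; 0]; [:: 0; 1; 0; 1; 0; 0; 1]; [:: 0; 0; 1; 1; 0; 0; 1; 1]; [:: 0; 0; 0; 1]; [:: 0; 0; 1; 1; 0; 0; 1; 1; 0]; [:: 0; 0; 0; 0; 0; 0; 0;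 0; 1]; [:: 0; 1; 0]; [:: 1; 0; 1; 0; 0; 1; 0]; [:: 0; 1; 0; 0; 1; 1; 0]; [:: 0; 1; 0; 1]; [:: 1; 1; 1; 1; 1]; [:: 0; 0; 0; 0; 0; 0; 1; 0]; [:: 0; 1; 0; 0; 1; 0; 0]; [:: 0; 0; 0; 0; 1]; [:: 1; 0; 1; 0; 1; 1; 1; 0; 1]; [:: 1; 0; 1; 1]; [:: 0; 1]; [:: 1; 0; 0; 1; 0; 1]; [:: 1; 0; 1; 1; 1; 1; 1]; [:: 0; 1; 0; 1; 0; 0]; [:: 1; 0]; [:: 0; 1; 0]; [:: 1; 1; 1; 1; 0; 0; 1; 1; 0]; [:: 0; 1; 0; 1; 0; 0]; [:: 0; 0; 0; 0; 0; 1; 0; 0]; [:: 1; 0; 0; 1; 1; 0]; [:: 1; 0; 0; 1]; [:: 1; 1; 0; 1; 0; 1]; [:: 0; 1; 0; 1; 0; 0; 1; 1; 1]; [:: 0; 0; 1; 1; 0; 1; 1; 1]; [:: 0; 1; 0; 0; 1]; [:: 0]; [:: 0; 0; 1; 1; 0]; [:: 0; 0; 0; 0; 1]; [:: 0; 1]; [:: 1; 0; 0; 1; 0; 1; 1; 1; 1]; [:: 0; 0; 1; 0; 0; 1; 0; 1; 1]; [:: 1; 1; 0]; [:: 0; 1; 1; 0; 0; 1; 1; 0; 1]; [:: 0; 1; 0; 0; 1; 1; 1; 1]; [:: 1; 1; 1; 0; 1]; [:: 1; 0; 1; 1; 1]; [:: 0; 1; 0; 1; 1; 1; 0]; [:: 1;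 0; 0; 1; 0; 1; 1; 1]; [:: 0; 0; 0; 0; 0; 0; 1; 0]; [:: 0; 0; 0; 0; 0; 0; 1]; [:: 1; 1; 0; 1; 1; 0]; [:: 0; 0; 1]; [:: 0; 1; 1; 0; 1; 0]; [:: 0; 0; 1; 1; 0; 0]; [:: 1; 1; 0; 0; 1; 1; 0]; [:: 0; 1; 0; 0]; [:: 1; 0; 0; 1; 0]; [:: 0; 0; 1; 0; 1; 1; 1; 1]; [:: 0; 0; 0; 0; 0]; [:: 1; 0; 0; 1; 1; 1; 1; 0]; [:: 0; 1; 0; 0; 1; 0; 1]; [:: 1; 1; 0; 0; 1; 1]; [:: 0; 0; 0; 1; 0]; [:: 0]; [:: 0; 1; 0; 0]; [:: 0; 0; 0; 1; 0]; [:: 1; 1; 1; 0]; [:: 1; 1; 0; 0; 1; 1]; [:: 1; 0; 0; 1; 0]; [:: 0; 1; 0; 0; 1; 0]; [:: 0; 0; 0; 0; 0; 0; 1]; [:: 1; 1; 0; 1; 0; 0; 1; 1; 0]; [:: 0; 0; 1; 0; 1]; [:: 0; 1; 1; 0; 0; 1]; [:: 0; 0; 0; 0; 0; 1; 0]; [:: 0; 0; 1; 0; 0; 1; 1; 1; 1; 0]; [:: 1; 1; 1; 0; 0; 1]; [:: 1; 0; 0; 1; 1; 1; 1; 0; 1]; [:: 0; 0; 1; 0; 0; 1; 0]; [:: 1; 1; 1; 1; 1]; [:: 1; 0; 0; 1; 0; 1]; [:: 0; 0; 1; 1; 0; 1; 1; 0]; [:: 1]; [:: 0; 1]; [:: 0;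 0; 1; 1; 0; 0]; [:: 0; 0; 1; 1; 0; 0; 1]; [:: 0; 1; 0; 1]; [:: 0; 0; 0; 0; 0; 0; 0; 0; 1]; [:: 1; 0; 0; 1]; [:: 0; 1; 0; 1; 1; 1; 1]; [:: 0; 1; 1; 1; 1]; [:: 1; 0; 1]; [:: 0; 0; 0; 0; 0; 1; 0]; [:: 0; 0; 1; 1; 0; 0; 1]; [:: 1; 1; 0; 0; 1]; [:: 1; 0; 1; 0; 1; 1; 0; 1]; [:: 0; 0; 1; 1; 0; 0]; [:: 1; 0; 0]; [:: 1; 0; 0; 1; 0; 1; 1]; [:: 0; 1; 1; 1; 1]; [:: 1; 0; 1; 0; 0; 1; 1; 1]; [:: 0; 0; 1; 1; 1; 1]; [:: 1; 0; 1; 0; 1; 1]; [:: 1; 1]; [:: 1; 1; 1; 0]; [:: 1; 0; 0; 1; 1; 0; 1]; [:: 0; 0; 0; 0; 0]; [:: 0; 0; 0; 0; 0; 0; 1; 0]; [:: 1; 0; 0; 1; 0; 0; 1; 1; 1; 1]; [:: 1; 0; 1; 0; 1; 1; 1; 0]; [:: 1; 0; 1; 1; 1; 1; 1]; [:: 0; 1; 0; 0; 1]; [:: 0; 0; 1; 1; 0; 1]; [:: 1; 0; 0; 1; 0; 0]; [:: 0; 0; 0; 1; 0]; [:: 1; 1; 1; 1]; [:: 0; 1; 0; 1; 0; 1; 0; 1; 1; 1]; [:: 1; 0; 0; 1; 0; 0; 1; 1; 1; 1]; [:: 0; 0; 1; 1; 1; 1; 1]; [:: 0; 0; 1; 1;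 1; 1; 0; 1]; [:: 0; 1; 0; 0; 1; 1]; [:: 1]; [:: 1; 0; 1; 1; 1]; [:: 0; 1; 0; 1; 1; 1; 0; 1]; [:: 1; 1; 1]; [:: 1; 0; 1]; [:: 1; 1; 1; 0; 1; 0; 1; 1; 0]; [:: 1; 0; 0; 1; 0; 1; 1; 1; 1; 0]; [:: 1; 1; 0]; [:: 0; 1; 1; 0; 0; 1; 1]; [:: 1; 0; 1; 1]; [:: 1; 1; 0; 1; 1]; [:: 1; 1; 0]; [:: 0; 1; 0; 0; 1]; [:: 1; 0; 0; 1; 1; 1; 1; 0; 1]; [:: 0; 1; 0; 0; 1; 1]; [:: 0; 0; 1; 0; 1; 0; 0]; [:: 1; 0; 0; 1; 1; 1; 1]; [:: 1; 0; 0; 1; 1; 1; 1; 1; 0]; [:: 0; 0; 1; 0; 1; 0; 0]; [:: 1; 0]; [:: 0; 0; 1; 0; 1; 1; 1; 0]; [:: 0; 0; 1; 0; 1; 0; 1; 1; 0]; [:: 0; 0; 1; 1; 0]; [:: 0; 0; 1; 0; 1; 1; 1; 1; 0; 1]; [:: 0; 1; 0]; [:: 0; 1; 0; 1; 0; 1; 1; 0]; [:: 0; 0; 1; 1; 0; 1; 1; 0; 1]; [:: 0; 0; 1; 0; 1; 0; 1; 1; 1; 0; 1]; [:: 0; 0; 0]; [:: 1; 0; 1; 0; 1; 0; 1; 1; 0]; [:: 1; 1; 0; 0; 1; 1; 1]; [:: 0; 0; 1; 1; 0; 0; 1]; [:: 0; 1; 1; 0; 0; 1; 1]; [:: 1;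 0; 1; 0]; [:: 0; 1; 1; 0]; [:: 1; 0; 0; 1; 0; 0; 1]; [:: 0; 0; 1; 0; 1; 0; 1; 1; 0; 1]; [:: 0; 0; 0; 0; 0; 0; 0; 0; 1]; [:: 1; 1]; [:: 0; 0; 1; 0; 0; 1; 1; 1; 1; 0; 1]; [:: 0; 1; 1; 0; 0; 1; 0; 1]; [:: 0; 0; 0; 0; 0; 0; 0; 0; 1; 0]; [:: 1; 0; 1; 0; 0; 1]; [:: 0; 1; 1; 0; 0; 1]; [:: 1; 1; 1; 1; 1]; [:: 0; 0; 0; 1]; [:: 0; 0; 1]; [:: 1; 0; 0; 1; 0; 1; 1; 1; 0; 1]; [:: 1; 0; 1; 0; 1; 1; 1; 0; 1]; [:: 0; 0; 1; 1]; [:: 0; 0; 1; 0; 1; 0; 0; 1; 1]; [:: 0; 0; 1; 0; 0; 1; 0; 1]; [:: 0; 0; 0; 0; 0; 0; 0]; [:: 1; 0; 0; 1; 0; 0; 1]; [:: 0; 0; 1; 0; 0; 1; 0]; [:: 0; 0; 1; 1; 1; 1; 1]; [:: 1; 0; 0; 1; 0; 0]; [:: 1; 0; 1; 1; 1; 1; 0]; [:: 0; 0]; [:: 1; 1]; [:: 0; 1; 0; 0; 1; 0; 0]; [:: 0; 0; 0; 0; 1; 0]; [:: 0; 0; 1; 0; 0; 1; 1; 1; 1]; [:: 0; 0; 0; 0; 0; 1]; [:: 0; 0; 0; 0; 0; 0; 0; 1]; [:: 1; 0; 1; 0; 0; 1; 1; 0]; [:: 0; 1; 1; 0; 1]; [::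 1; 0; 1; 0; 1; 1; 1; 1]; [:: 0; 0; 1; 1; 0]; [:: 0; 1; 0; 1; 0; 0; 1; 0]; [:: 1; 1; 1; 1]; [:: 0; 1; 0; 0; 1; 0; 1; 0]; [:: 0; 1; 0; 0; 1; 0; 0; 1]; [:: 1; 0; 1]; [:: 1; 0; 1; 1; 0; 1; 1; 1]; [:: 0; 0; 1; 0; 1; 0]; [:: 0; 1; 1; 0; 0; 1]; [:: 1; 1; 0; 1; 0; 1; 1; 0]; [:: 0; 0; 1; 0; 1; 0; 1; 1; 1]; [:: 1; 0; 0; 1; 0; 0; 1; 0]; [:: 0; 0; 1; 1; 0; 1; 1; 1]; [:: 1; 1; 0; 1; 0]; [:: 0; 1; 1; 0; 0; 1; 1; 1]; [:: 0; 0; 1; 0; 0; 1; 1; 1; 1]; [:: 1; 0; 0; 1; 1; 1]; [:: 0; 1; 0; 0; 1; 1; 1; 1; 0]; [:: 0; 0; 0; 0; 0; 0; 1; 0; 0]].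
Definition wordUlist : seq (seq nat) := [:: [:: ]; [:: ]; [:: 0; 0; 1; 0; 0; 1; 0; 0]; [:: ]; [:: ]; [:: 0; 1; 0; 1]; [:: 0; 1; 0; 0; 1; 0; 0; 1; 1; 1; 1; 0]; [:: 0; 0; 0; 0; 1; 1; 0; 0]; [:: 1; 0; 1; 0; 0; 1; 0; 1; 0; 1; 1; 0]; [:: 1; 0; 0; 1; 0; 1; 0; 1; 1; 0]; [:: 0; 1; 0; 1; 0; 0]; [:: ]; [:: 0; 0; 0; 1; 0; 1]; [:: 0; 0; 1; 1; 0; 1; 1; 1; 0; 1; 1; 0]; [:: 0; 0; 0; 0; 0; 1; 1]; [:: 0; 0; 1; 0; 1]; [:: 1; 1; 0; 0; 1; 1]; [:: 0; 0; 1; 1]; [:: 0; 1; 0; 0; 1; 0; 1; 1; 1; 0]; [:: 1; 0; 0; 1; 1; 1]; [:: 0; 0; 0; 0; 1; 0; 1; 0]; [:: 0; 0; 0; 0; 0; 1; 1; 0; 0]; [:: 0; 0; 0; 0; 1; 0; 0; 1; 0; 0]; [:: 0; 1; 1; 0; 1; 0; 0; 1]; [:: 1; 0; 1; 0]; [:: 0; 0; 1; 1; 0]; [:: 0; 0; 0; 0; 0; 0; 0; 0; 1; 0]; [:: 1; 1; 1; 1; 1]; [:: 1; 1; 1; 1; 1]; [:: 0; 0; 0; 0; 1]; [:: 0; 0; 1; 0; 1; 0; 0]; [:: 0; 0; 0; 1; 0]; [:: 0; 0; 1; 1; 0; 1]; [:: 0; 1; 0; 0]; [:: 1; 0; 1;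 1; 0; 1; 0]; [:: 1; 0; 0; 1; 0; 0; 1; 0]; [:: 0; 0; 0; 0; 1; 0; 1]; [:: 1; 0]; [:: 1; 0; 1; 1; 1; 1; 1]; [:: 0; 0; 1; 1; 0; 1; 1]; [:: 0; 1; 1; 0]; [:: 1; 1; 1; 0]; [:: 1; 1; 0; 0]; [:: 0; 1; 0; 0; 1; 0; 1]; [:: 1; 0; 0; 1; 0; 1; 0; 1; 1; 0]; [:: 0; 1; 0; 1; 0; 1; 0]; [:: 0; 1; 1; 0; 0; 1; 1; 0; 1; 1; 0]; [:: 1; 1; 0; 0; 1; 1; 1]; [:: 0; 0]; [:: 1; 0; 1; 0; 1; 0; 1; 0]; [:: 0; 0; 0; 0; 0; 1; 0; 0]; [:: 0; 0; 0; 1; 1]; [:: 1; 0; 1; 0; 1; 0]; [:: 0; 0; 0; 1]; [:: 0; 1; 0; 0; 1; 0; 1; 0; 1; 1; 0]; [:: 1; 1; 1; 0; 1; 1; 0; 1; 1]; [:: 0; 1; 0; 0; 1; 0; 1; 0; 1; 1; 0]; [:: 1; 0; 1; 1; 0; 1; 1; 1; 1; 0]; [:: 0; 1; 0; 0; 1; 0; 0]; [:: 0; 1; 0; 1; 1; 1; 0]; [:: 0; 0; 0; 0; 0; 1; 0; 1; 0]; [:: 0; 1; 0; 1; 1; 1]; [:: 1; 1; 0; 1; 1; 1; 1; 1; 0]; [:: 1; 0; 1; 0; 1; 0; 0]; [:: 1]; [:: 1; 1; 0; 0; 1; 0; 1; 0; 1; 1; 0]; [:: 1; 1; 0]; [::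 1; 1; 0; 1; 1; 1; 1; 1]; [:: 0; 1; 0; 1; 0; 1]; [:: 1; 1]; [:: 0; 0; 1; 1; 1; 1; 0; 1; 0; 1; 1; 0]; [:: 0; 1; 0; 1; 0; 1; 1; 0]; [:: 0; 1; 0; 1; 0]; [:: 1; 1; 1; 1; 0; 1; 1]; [:: 1; 1; 1; 1; 0; 1; 1; 1]; [:: 0; 0; 0; 1; 1; 0]; [:: 0; 1; 0; 0; 1; 0; 1; 1; 1; 0]; [:: 1; 0; 0; 1; 0; 1; 0]; [:: 0; 1; 1; 0; 1; 0; 1]; [:: 0; 1; 1; 1]; [:: 0; 0; 1; 0]; [:: 1; 0; 1; 0; 0; 1; 0]; [:: 0; 0; 0; 0; 1]; [:: 1; 0; 0; 1; 1; 0]; [:: 1; 1; 1; 0; 1; 1]; [:: 1; 1; 1; 0; 1; 1; 1]; [:: 0; 0; 0; 0; 1; 0]; [:: 1; 0; 1; 1; 1; 0]; [:: 0; 0; 0; 0; 0; 1; 0; 0]; [:: 0; 1; 0; 1; 1; 0; 1; 1; 0]; [:: 0; 1; 0; 0; 1; 1; 0]; [:: 0; 0; 0; 1; 0; 1; 0]; [:: 0; 1; 0; 0; 1; 1; 1; 1; 1; 0]; [:: 1; 1; 1; 1]; [:: 1; 1; 1; 1]; [:: 1; 0; 1; 0; 1; 1; 1; 1]; [:: 0; 0; 1; 0]; [:: 1; 0; 1; 1; 0; 0]; [:: 1; 0; 1; 0; 1; 1; 0; 1; 1; 0]; [:: 1; 1; 0; 0; 1; 0; 1]; [:: 1; 1;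 0; 1; 1; 1; 1; 1]; [:: 1; 1; 1; 0; 0; 1]; [:: 1; 1; 1; 1; 1]; [:: 0; 0; 1; 0; 1; 0; 1; 1; 0]; [:: 0; 0; 0; 0; 1; 0; 0]; [:: 1; 0; 1; 0; 0; 1; 1; 0; 1; 1; 0]; [:: 0; 0; 1; 0; 0; 1]; [:: 0; 1; 0; 0; 1; 1; 0; 1; 1]; [:: 0; 1; 0; 1; 0; 0; 1]; [:: 1; 0; 1; 1; 1; 1]; [:: 1; 1; 0; 1; 1; 1; 1; 0; 0; 1]; [:: 0; 1; 0; 1; 0; 1; 0; 1; 0]; [:: 0; 0; 1; 0; 1; 0]; [:: 1; 1; 1; 1; 0; 1; 1; 1; 0]; [:: 0; 1; 1; 0; 1; 0; 1; 1; 0]; [:: 1; 1; 0; 1; 1; 0]; [:: 1; 0; 1; 0; 1; 1; 1; 1; 0]; [:: 0; 1; 1; 0; 1; 1; 0; 1; 1; 0]; [:: 1; 1; 0; 1; 0; 1; 1; 0]; [:: 0; 1; 0; 1; 0; 1; 0; 1; 1; 0]; [:: 0; 0; 0; 0; 0; 0; 0; 1; 0; 0]; [:: 1; 1; 1; 1; 0; 1; 1; 0]; [:: 0; 1; 1; 0; 1]; [:: 1; 1; 0]; [:: 1; 1; 0; 0; 1; 0; 0]; [:: 1; 1; 0; 0; 1; 0; 1; 1; 1; 0]; [:: 0; 1; 1; 0; 0; 1; 0; 0]; [:: 1; 0; 1; 1; 0; 1; 1; 0]; [:: 1; 1; 1; 1; 0]; [:: 1; 1; 0; 1; 1; 1;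 0; 1; 1; 0]; [:: 1; 1; 1; 0; 1; 1; 1; 1; 0]; [:: 1; 0; 1; 0; 0; 1; 1; 0; 1; 1; 0]; [:: 1; 0; 1; 0; 0; 1]; [:: 0; 1]; [:: 1; 0; 0; 1; 1; 0; 1; 1; 0]; [:: 0; 1; 0; 1; 0; 0]; [:: 1; 0; 0; 1; 0; 0]; [:: 0; 0; 0; 0]; [:: 0; 0; 0; 1; 1]; [:: 0; 0; 1; 1; 0]; [:: 0; 1; 0; 1; 0; 1; 0; 0]; [:: 0; 0; 0; 0; 0; 1; 0]; [:: 1; 1; 1; 0; 1; 0; 1]; [:: 0; 0; 0; 0; 0; 0; 1; 0]; [:: 0; 0; 0; 1; 0; 0]; [:: 0; 1; 0; 1; 0; 0]; [:: 0; 0; 0; 0; 0; 0; 0; 1; 0; 0]; [:: 0; 0; 0; 0; 0]; [:: 0; 1; 1; 0; 1; 0]; [:: 0; 0; 1; 0; 0; 1; 0]; [:: 0; 1; 1; 1; 0; 1; 0]; [:: 1; 1; 0; 1; 1; 1; 0; 1; 0]; [:: 0; 0; 0; 1; 0; 0; 1]; [:: 1; 1; 0; 0; 1]; [:: 1; 0; 1]; [:: 0; 1; 0; 1; 1; 0; 1; 0]; [:: 0; 0; 0; 0; 0; 0; 1]; [:: 0; 0; 0; 0; 0; 0; 0; 1]; [:: 1; 0; 0; 1; 1]; [:: 0; 1; 1; 0; 0; 1; 0; 1; 0]; [:: 0; 1; 1; 1; 0; 1; 1; 0]; [:: 1; 0; 1; 1; 1; 1; 0]; [:: 0; 1; 0;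 1; 0; 0; 1]; [:: 0; 1; 0; 0; 1; 1]; [:: 1; 1; 0; 1; 1; 1; 1; 0; 1]; [:: 1; 1; 1; 1; 0; 0]; [:: 1; 0; 1; 1; 0; 0; 1; 1; 0]; [:: 0; 1; 1; 0; 1; 0; 1; 0; 1; 1; 1; 0]; [:: 0; 1; 1; 1; 1; 1]; [:: 1; 1; 1; 0; 1; 1; 0; 1; 1; 0]; [:: 0]; [:: 0; 1; 1; 0; 0; 1; 1]; [:: 0; 1; 1; 1; 0; 1]; [:: 0; 0; 0; 1]; [:: 1; 0; 0; 1; 0; 0; 1; 1; 1; 1; 0]; [:: 1; 0; 0; 1; 1; 0; 0; 1; 1]; [:: 0; 0; 0; 0; 0; 1; 0; 1; 0; 0]; [:: 0; 0; 1; 1; 1]; [:: 1; 1; 0; 1; 0; 1; 0; 1; 1; 1; 0]; [:: 0; 1; 0; 1; 0; 1; 0; 1; 0]; [:: 1; 0; 0; 1; 1; 0; 0]; [:: 1; 0; 0; 1; 1; 0; 1; 1; 1; 0]; [:: 1; 0; 1; 0; 0]; [:: 0; 1; 1; 1; 0; 1; 1; 1; 1; 0]; [:: 1; 0; 0; 1; 0; 1; 1; 1; 1; 0]; [:: 0; 1; 0; 1; 1; 0]; [:: 0; 1; 0; 1; 0; 0; 1; 0; 1; 0]; [:: 1; 1; 0; 1; 1; 0; 1; 1]; [:: 0; 1; 0; 1; 0; 0; 1; 0; 1; 0]; [:: 1; 0; 1; 0; 0; 1; 0]; [:: 0; 1; 1; 0]; [:: 0; 0; 0; 1; 0; 0;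 1; 0]; [:: 0; 1; 1; 1; 0; 1; 1; 0; 1; 1; 0]; [:: 1; 1; 0; 1; 1; 1; 0; 1; 1; 0]; [:: 0; 1; 1; 1; 1; 0; 1]; [:: 1; 1; 0]; [:: 1; 0; 1; 0; 0; 1]; [:: 0; 0; 0; 1; 0]; [:: 0; 1; 1; 0; 1; 0; 0]; [:: 0; 0; 1; 0; 1; 1; 1; 0]; [:: 0; 0; 0; 1; 1; 0; 0]; [:: 0; 0; 1; 1; 0; 0; 1; 1; 0]; [:: 1; 1; 1; 1; 0; 1; 0]; [:: 0; 0; 1; 1; 1; 1; 1; 0]; [:: 1; 1; 0; 1; 1; 1; 0; 1; 1]; [:: 0; 1; 0; 1; 0; 0; 1; 0; 0]; [:: 1; 1; 0; 1; 1; 1; 0; 1; 0; 1]; [:: 1; 1; 1; 1; 0; 1; 0; 1; 1; 0]; [:: 0; 1; 1; 0; 0; 1; 1; 0; 1; 1; 1; 0]; [:: 0; 0; 0; 0; 1; 0; 1; 0]; [:: 0; 0; 1; 1; 1; 1; 0]; [:: 1; 0; 0; 1; 0]; [:: 0; 0; 0; 0; 0; 0; 0]; [:: 0; 1; 1; 0; 1; 1; 1; 1; 0]; [:: 0; 1; 0; 0; 1; 0; 1; 0]; [:: 1; 1; 0; 1; 0; 0]; [:: 1; 0; 1; 0; 0; 1; 0]; [:: 0; 0; 0; 0; 0; 1]; [:: 1; 1; 1; 1; 0; 1]; [:: 1; 1; 0; 1; 0; 0; 1; 1; 0]; [:: 1; 1; 0; 1; 1; 0; 1; 1; 0]; [::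 1; 0; 1; 0; 1; 1]; [:: 0; 0; 1; 0; 1; 0; 1; 1; 0]; [:: 1; 0; 0]; [:: 0; 0; 0; 0; 0; 1; 0; 1]; [:: 1; 0; 1; 1]; [:: 1; 0; 1; 1; 1]; [:: 0; 1; 0; 1; 1; 1; 1; 0]; [:: 0; 1; 0; 1; 0; 1; 0; 0]; [:: 0; 1; 0; 0; 1; 1; 1; 1; 0]; [:: 1; 1; 1; 0; 1; 1; 1; 1]; [:: 0; 0; 0; 0; 0; 0; 1; 0]; [:: 1; 1; 0; 0; 1; 1; 0; 0; 1; 1; 0]; [:: 0; 1; 0]; [:: 1; 1; 0; 1; 0; 1; 0; 1; 1; 0]; [:: 0; 0; 1; 0; 1; 0; 1; 1; 1; 0]; [:: 0; 1; 1; 0; 1; 1; 1; 0]; [:: 0; 0; 0]; [:: 0; 0; 0; 0; 0; 0; 0; 0]; [:: 0; 1; 1; 0; 0; 1; 0]; [:: 1; 1; 0; 1; 0; 1; 0; 1; 0; 1; 1; 0]; [:: 1; 0; 1; 1; 1]; [:: 1; 0; 1; 1; 1; 1; 1; 0]; [:: 1; 0]; [:: 0; 1; 0; 0; 1]; [:: 1; 1; 1; 0; 0; 1]; [:: 1; 1; 1; 1; 0; 0]; [:: 1; 1; 0; 1; 0]; [:: 1; 1; 0; 1; 1]; [:: 1; 1; 0; 1; 1; 1; 1; 1; 0]; [:: 0; 0; 0; 0; 0; 1; 1; 0]; [:: 0; 1; 0; 1; 0; 1]; [:: 1; 0; 1; 0; 0; 1; 0; 0]; [:: 1; 1; 0;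 0]; [:: 1; 0; 1; 0; 1; 0; 1; 1; 1; 0]; [:: 0; 1; 0; 1; 0]; [:: 0; 0; 0; 0; 0; 0; 1; 0; 0]; [:: 1; 1; 1; 1; 0; 1; 1; 0]; [:: 0; 1; 1; 1; 1]; [:: 1; 0; 1; 1; 1; 0; 1]; [:: 1; 1; 0; 0; 1; 0; 1; 1; 1; 0]; [:: 0; 1; 1; 1]; [:: 0; 1; 1; 1; 1; 1; 0]; [:: 1; 0; 1; 0; 1; 0; 1; 0; 1; 1; 0]; [:: 0; 0; 1; 1; 1; 1; 0]; [:: 1; 0; 1; 1; 0; 1; 1; 1; 0]; [:: 1; 0; 0; 1; 0; 1; 0]; [:: 1; 1; 0; 1; 1; 0; 1; 0]; [:: 1; 1; 0; 0; 1; 0]; [:: 1; 0; 1; 0; 0]; [:: 0; 1; 0; 0; 1; 0]; [:: 0; 0; 0; 1; 0]; [:: 0; 1; 0; 0; 1; 1; 0]; [:: 1; 1; 0; 0; 1; 1; 0; 1; 1]; [:: 1; 0; 0; 1]; [:: 1; 1; 1; 1; 1; 0]; [:: 1; 1; 1; 0; 1; 0; 0; 1]; [:: 1; 1; 0; 1]; [:: 0; 0; 0; 0; 0; 1; 0]; [:: 1; 1; 1; 1; 0; 1; 1]; [:: 0; 1; 0; 0; 1; 1; 0; 0]; [:: 0; 1; 1; 0; 1; 0; 0]; [:: 0; 1]; [:: 0; 0; 0; 1; 0; 1]; [:: 0; 1; 1; 1; 0]; [:: 0; 1; 1; 1; 0; 1; 0; 1]; [:: 0; 1; 1; 1; 0;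 1; 1]; [:: 1; 1; 0; 1; 1; 1; 0; 1; 1]; [:: 0; 1; 0; 1; 0; 0; 1; 1; 0]; [:: 1; 1; 0; 1; 1; 0; 0]; [:: 1; 0; 1; 0; 1; 0; 1; 1; 0]; [:: 1; 0; 1; 0; 1; 0]; [:: 1; 0; 1; 0; 1]; [:: 0; 1; 1; 0; 1; 1]; [:: 1; 0; 1; 1; 1; 0; 1; 0]; [:: 0; 1; 1; 0; 0; 1; 1; 0]; [:: 1; 0; 1; 0; 1; 1; 1; 1; 1; 0]; [:: 1; 0; 1; 0; 0; 1; 1; 1; 1; 0]; [:: 1; 0; 1; 1; 1; 0; 1; 1; 0]; [:: 0; 1; 1; 0; 1; 1]; [:: 0; 1; 1; 0; 0; 1; 0; 1; 0]; [:: 1; 0; 0; 1; 1; 1; 1; 0; 0; 1]; [:: 0; 1; 0; 0; 1; 0; 1; 0; 0]; [:: 0; 0; 0; 1]; [:: 1; 0; 0]; [:: 0; 0; 0; 0]; [:: 1; 1; 0; 1; 1; 1; 0; 1; 0; 0; 1]; [:: 0; 0; 1; 0; 0; 1; 1; 1; 1; 0]; [:: 0; 0; 1; 1; 0; 0; 1; 1]; [:: 0; 0; 0; 1; 1; 0; 1]; [:: 0; 1; 1; 1; 0; 1; 1; 0; 1; 1]; [:: 1; 1; 1; 0; 1; 1; 1]; [:: 0; 1; 1; 1; 1; 0]; [:: 1; 1; 0; 1; 1; 1; 0]; [:: 1; 1; 0; 1]; [:: 1; 0; 1; 0; 1; 1; 0; 1; 0]; [:: 0; 0; 0; 1; 0;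 0; 1; 0]; [:: 1; 1; 1; 1; 0]; [:: 0; 1; 0; 0; 1; 0; 1; 0]; [:: 1; 0; 1; 0; 1; 0; 1; 0]; [:: 0; 1; 0; 1; 1; 0]; [:: 1; 0; 1; 1; 0]; [:: 1; 0]; [:: 0; 1; 0; 1; 0; 0; 1; 1; 0]; [:: 1; 0; 1; 1; 1; 0]; [:: 0; 1; 1; 1; 0]; [:: 0; 0; 0; 1; 1; 0]; [:: 1; 0; 1; 1; 0; 1; 1]; [:: 1; 0; 0; 1; 0; 0; 1; 0; 0]; [:: 1; 0; 0; 1; 0; 0; 1; 0; 0]; [:: 0; 1; 0; 1; 1; 1; 0]; [:: 0; 1; 1; 1; 1; 0; 1; 1; 1; 0]; [:: 0; 0; 0; 1; 0; 0]; [:: 0; 0; 0; 0; 0; 0]; [:: 1; 0; 1; 0; 1; 1; 0; 1; 1]; [:: 0; 1; 1; 0; 0; 1; 0; 0]; [:: 0; 1; 0; 1; 0; 0; 1; 0]; [:: 0; 0]; [:: 0; 1; 1; 0; 1; 1; 1; 0; 1; 1; 0]; [:: 1; 1; 0; 0; 1; 1]; [:: 1; 1; 0; 0; 1; 0; 1]; [:: 1; 1; 1; 1; 0; 0; 1; 1]; [:: 1; 0; 1; 1; 1; 1]; [:: 1; 1; 0; 1; 1; 1; 0; 1]; [:: 0; 0; 1; 1; 1; 1; 0; 1; 1; 1; 0]; [:: 1; 0; 1; 1; 1; 0; 1; 0; 1]; [:: 1; 0; 1; 1; 1; 0; 1; 1]; [:: 0; 0; 0; 0; 1; 0; 0; 1;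 0; 0]; [:: 1; 0; 1; 1; 1; 1; 0]; [:: 1; 1; 1; 0; 1; 1; 1; 0]; [:: 1; 1; 1; 0; 1]; [:: 0; 0; 1; 0; 0; 1; 0; 0]; [:: 0; 1; 1; 0; 1; 1]; [:: 0; 0; 1; 0; 0; 1; 0; 0]; [:: 0; 0; 1; 1; 0; 1; 1; 1; 0]; [:: 0; 1; 0; 0]; [:: 0; 0; 1; 1; 0; 0]; [:: 0; 1; 1; 0; 0; 1]; [:: 0; 0; 0; 0; 0; 1; 0; 1]; [:: 1; 1; 0; 1; 0; 1; 1; 0]; [:: 0; 1; 1; 0; 1; 1; 0]; [:: 0; 0; 0; 0; 1; 1]; [:: 0; 1; 0; 0; 1; 1; 0]; [:: 0; 1; 0; 0; 1; 0]; [:: 1; 1; 1; 1; 0; 1; 0; 0; 1]; [:: 1; 1; 1; 0; 1]; [:: 0; 1; 0]; [:: 0; 1; 1]; [:: 1; 1; 0; 0]; [:: 1; 1; 0; 1; 1; 1; 1]; [:: 0; 1; 1; 1; 0; 1; 1; 1; 1]; [:: 0; 0; 0; 1; 0; 0; 1; 0]; [:: 1; 1; 1; 0; 1; 1; 1; 1]; [:: 0; 0; 0; 1; 0; 1; 0; 0]; [:: 0; 1; 1; 0; 0; 1; 0]; [:: 0; 0; 1; 0; 0; 1]; [:: 0; 1; 1; 1; 0; 1; 0; 0; 1]; [:: 1; 0; 0; 1; 0; 0; 1; 0]; [:: 0; 1; 0; 1; 1; 0]; [:: 1; 1; 0; 1; 0; 0]; [:: 0; 1; 1; 0; 1; 1;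 1; 1; 0]; [:: 0; 0; 1; 0; 1; 1; 1; 1; 0]; [:: 0; 0; 0; 0; 1; 1; 0]; [:: 1; 1; 0; 1; 1; 1; 0; 1; 0]; [:: 1; 1; 0]; [:: 1; 0; 1; 0; 1; 0; 0; 1; 1; 0]; [:: 1; 1; 0; 1; 1; 0]; [:: 0; 1; 1; 1; 0; 0; 1]; [:: 0; 0; 1]; [:: 0; 0; 0; 0; 0; 0; 0; 1]; [:: 1; 0; 1; 0; 0; 1; 1; 0]; [:: 1; 0; 1; 1; 0; 1; 1; 0]; [:: 0; 1; 0; 1; 1]; [:: 0; 0; 1; 0; 1]; [:: 0; 1; 1; 1; 1; 1]; [:: 1; 0; 0; 1]; [:: 0; 0; 0; 0; 0; 0; 0; 0; 1]; [:: 0; 1; 1; 0; 0; 1; 0; 1]; [:: 0; 0; 1; 0; 0; 1; 0]; [:: 1; 1; 0; 0; 1; 1; 0]; [:: 1; 0; 0; 1; 0; 0; 1; 0]; [:: 1; 1; 1; 0; 1; 0]; [:: 1; 0; 1; 0; 1]; [:: 1; 1; 1; 0; 0; 1; 1; 0]; [:: 1; 0; 0; 1; 1; 0; 1; 1; 0]; [:: 1; 0; 1; 0; 0; 1; 1; 1; 1; 0]; [:: 0; 0; 0; 1; 1; 0; 0]; [:: 0; 1; 1; 0; 1; 0; 1]; [:: 1; 1; 0; 0; 1; 1; 0; 0; 1; 1]; [:: 0; 1; 0; 0; 1; 0; 1; 0; 0]; [:: 0; 0; 0; 0; 0; 0; 0; 0; 1; 0]; [:: 0; 0; 0; 0]; [::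 1; 0; 0; 1; 1; 1; 1; 1; 0]; [:: 1; 0; 0; 1; 1; 0; 0; 1; 1; 0]; [:: 0; 0; 0; 0; 1; 1]; [:: 0; 1; 0; 0; 1; 0; 1; 0]; [:: 0; 1; 0; 0; 1; 1; 1]; [:: 0; 0; 0; 0; 0; 0; 0; 0; 1; 0; 0]; [:: 0; 0; 0; 0; 0; 0; 0; 0; 1; 0; 0]; [:: 0; 1; 0; 1; 1; 0; 0]; [:: 0; 1; 0; 1; 0; 0; 1; 0]; [:: 1; 0; 1; 0; 0]; [:: 1; 1; 0; 1; 1; 0; 1; 0]; [:: 0; 0; 1; 1; 1; 1]; [:: 1; 1; 0; 1]; [:: 1; 0; 1; 0; 1; 1; 0; 1; 0]; [:: 0; 1; 0; 1; 1; 0; 1; 1]; [:: 0; 0; 0; 1; 0; 0; 1; 0; 0]; [:: 1; 1; 1; 1; 0; 0; 1]; [:: 0; 0; 0; 1; 1; 1; 1]; [:: 1; 1; 0; 1; 1; 0; 1; 1; 0]; [:: 1; 1; 1; 1; 1; 0]; [:: 1; 0; 1; 1; 1]; [:: 0; 1; 0; 1; 1]; [:: 0; 1; 0; 0; 1; 1; 1; 1]; [:: 1; 0; 0; 1; 1; 0]; [:: 0; 0; 1; 0; 0; 1; 0]; [:: 1; 1; 0; 1; 0]; [:: 1; 1; 0; 1; 0; 1; 0]; [:: 0; 1; 1]; [:: 0; 1; 1; 1]; [:: 0; 0; 1; 0; 1; 0; 0]; [:: 0; 1; 1; 0; 0]; [:: 1; 0; 1; 0; 1; 0; 0]; [:: 0;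 0; 0; 0; 0; 0; 1; 0; 0]; [:: 1; 0; 1; 0; 0; 1; 1; 0]; [:: 0; 0; 0; 0; 0]; [:: 0; 1; 0; 0; 1; 0; 1; 1; 1; 1; 0]; [:: 0; 1; 1; 1; 1; 0; 1; 0; 1; 1; 0]; [:: 1; 1; 1; 0; 1; 0; 1; 1; 0]; [:: 0; 1; 0; 1; 1; 1; 0; 1; 1; 0]; [:: 0; 1; 1; 0; 1; 1; 1; 1; 1; 0]; [:: 0; 1; 1; 1; 1; 1; 0]; [:: 1; 1; 1; 1; 1; 0; 0]; [:: 1; 1; 0; 1; 1; 0; 0; 1; 1; 0]; [:: 0; 0; 0; 0; 1; 0; 0; 1; 0]; [:: 0; 0; 0; 0; 1; 0; 0; 1]; [:: 0; 0; 0; 0; 0; 1; 1]; [:: 1; 0; 1; 1; 1; 1; 0; 1]; [:: 0; 0; 1; 1; 0; 0]; [:: 0; 1; 0]; [:: 0; 0; 1; 0; 1; 0]; [:: 0; 1; 0; 1]; [:: 1; 1; 0; 0; 1; 1; 0]; [:: 0; 0; 1; 1; 0; 1; 1; 0]; [:: 1; 1; 0; 1; 1; 1; 1]; [:: 0; 0; 0; 0; 1; 0; 1; 0; 0]; [:: 0; 1; 1; 0; 1; 0; 1; 0]; [:: 0; 0; 1; 0; 1; 1; 1; 0]; [:: 0]; [:: 0; 0; 1; 0; 0]; [:: 1; 0; 1; 0; 1; 1; 0]; [:: 0; 0; 0; 1; 0; 0; 1]; [:: 1; 1; 0; 0; 1; 0; 1; 1; 1; 1; 0]; [:: 0; 0;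 1; 0]; [:: 1; 0; 0; 1; 1; 1; 1; 0]; [:: 1; 1; 0; 0; 1; 0]; [:: 1; 1; 1]; [:: 0; 0; 0; 0; 1; 0; 0; 1; 0]; [:: 1; 0; 1; 0; 1; 0; 1; 1; 0]; [:: 1; 0; 0; 1; 0; 1]; [:: 1; 1; 1; 0; 0; 1; 1]; [:: 1; 0; 0; 1; 1]; [:: 1; 1; 1; 0; 0]; [:: 0; 1; 1; 0; 0; 1; 1; 0]; [:: 0; 1; 0; 1; 0; 0; 1; 1; 1; 1; 0]; [:: 1; 1; 1; 1; 0; 1; 1; 1]; [:: 0; 1; 1; 1; 0; 1]; [:: 0; 0; 0; 0; 1; 0; 1; 0; 0]; [:: 0; 0; 0; 1; 0]; [:: 1; 0; 1; 0; 1; 0]; [:: 0; 0; 1; 1; 0; 0]; [:: 1; 0; 1; 1; 1; 0]; [:: 1; 0; 1]; [:: 0; 1; 1; 0; 1]; [:: 0; 1; 0; 0]; [:: 0; 1; 0; 1; 0; 1; 1; 0; 1; 1; 0]; [:: 1; 1; 1; 0; 1; 1; 0]; [:: 1; 0; 1; 0; 1; 1; 1; 0]; [:: 0; 0; 0; 1; 0; 1; 0]; [:: 0; 1; 1; 0; 0]; [:: 0; 1; 1; 1; 0; 1; 0]; [:: 0; 1; 0; 0; 1; 0; 1]; [:: 0; 1; 0; 1; 1; 1; 1; 1; 0]; [:: 0; 1; 0; 1; 0; 0; 1; 0]; [:: 0; 1; 0; 1; 0; 1; 1; 1; 1; 0]; [:: 1; 1; 1; 1]; [:: 1; 1; 1;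 0; 1]; [:: 0; 0; 0; 0; 0; 0; 0; 0]; [:: 1; 0; 0; 1; 1; 1; 1]; [:: 0; 0; 0; 0; 1; 0; 1]; [:: 1; 0; 1; 1; 1; 1; 1; 0]; [:: 1; 0; 1; 0; 1; 1; 1; 0; 1; 1; 0]; [:: 1; 1; 0; 0; 1; 1; 0; 1; 1; 0]; [:: 1; 1; 0; 1; 0; 1]; [:: 1; 1; 1; 1; 0; 0; 1; 1; 0]; [:: 1; 1; 1; 1; 0; 1]; [:: 1; 1; 0; 1; 1; 1; 1; 0]; [:: 1; 1; 1; 1; 0; 1; 1; 1; 0]; [:: 0; 0; 1; 1; 0; 0; 1; 1; 0]; [:: 1; 0; 0; 1; 0; 0; 1]; [:: 1; 0; 1; 1; 1; 0; 1; 0; 0; 1]; [:: 1; 0; 0; 1; 0; 1; 1; 1; 0]; [:: 1; 0]; [:: 1; 0; 0; 1; 0; 0]; [:: 0; 1; 0; 1; 1]; [:: 1; 0; 1; 0; 0; 1; 0; 1; 0]; [:: 0; 0; 0; 0]; [:: 1; 0; 0; 1; 0; 1; 0; 0]; [:: 1; 0; 1; 1; 0; 0]; [:: 0; 1; 0; 1; 0; 1; 1; 0]; [:: 0; 0; 0; 0; 0; 0; 0; 0; 1]; [:: 0; 1; 1; 0; 0; 1; 0; 1]; [:: 0; 1; 0; 0; 1; 1; 0; 1; 1; 0]; [:: 1; 1; 1; 0; 1; 0]; [:: 0; 0; 0; 1; 1; 1]; [:: 1; 1; 1; 1; 1; 0; 0]; [:: 1; 1; 0; 0; 1]; [:: 0];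 [:: 0; 0; 0; 0; 0; 1]; [:: 1; 0; 0; 1; 0; 1; 0]; [:: 0; 0; 1; 0; 0]; [:: 1; 0; 1; 0]; [:: 0; 1; 1; 1; 1; 0; 0; 1]; [:: 0; 0; 1; 1; 0; 1; 1; 1; 1; 1; 0]; [:: 0; 1; 1; 1; 0; 0]; [:: 1; 0; 1; 0; 0; 1; 1; 1; 1]; [:: 1; 1; 0; 1; 1; 1]; [:: 1; 0; 1; 0; 1; 1]; [:: 1; 0; 1; 0; 0; 1; 0; 1; 0]; [:: 0; 1; 0; 1; 0; 1; 1; 1; 0]; [:: 1; 0; 1; 0; 1; 1; 0]; [:: 1; 0; 0; 1; 1; 1; 1; 0]; [:: 0; 0; 0; 1; 0; 0]; [:: 1; 1; 0; 0; 1; 0; 1; 0]; [:: 0; 1; 0; 1; 0]; [:: 0; 1; 0; 1]; [:: 0; 1; 1; 1; 1; 0; 1]; [:: 1; 0; 1; 1; 1; 1; 1]; [:: 1; 1; 0; 0; 1]; [:: 1; 0; 0; 1; 0; 1]; [:: 0; 0; 1; 1; 1; 1; 0; 1]; [:: 0; 0; 0; 0; 0; 0; 1]; [:: 1; 1; 1; 0; 0; 1; 1]; [:: 1; 0; 1; 1]; [:: 1; 1; 1; 0; 0]; [:: 1; 0; 1; 0]; [:: 1; 1; 0; 0; 1; 1; 0; 1; 1; 0]; [:: 1; 1; 0; 1; 0; 0; 1]; [:: 1; 0; 1]; [:: 1; 1; 0; 1; 1; 1; 1; 0]; [:: 0; 1; 0; 0; 1; 1; 0; 1; 1; 0]; [::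 1; 0; 1; 1; 1; 0; 1; 1; 0]; [:: 1; 0; 1; 0; 0; 1; 1; 0; 1; 1]; [:: 0; 1; 1; 0; 0; 1; 0; 1; 1; 1; 1; 0]; [:: 1; 0; 0; 1; 0; 0; 1]; [:: 0; 1; 1; 1; 0; 1]; [:: 1; 0; 0; 1; 0; 1; 1; 1; 0]; [:: 0; 1; 1; 1; 0; 0]; [:: 1; 1; 0; 1; 1]; [:: 1; 1; 0; 1; 1; 1]; [:: 1; 0; 1; 0; 1; 1; 1; 1; 0]; [:: 1; 0; 1; 1; 0; 0; 1; 1]; [:: 1; 0; 1; 1; 1; 0; 1]; [:: 0; 1; 1]; [:: 0; 1; 1; 0]; [:: 0]; [:: 1; 0; 0; 1; 0; 1; 0; 0]; [:: 0; 0; 1; 0; 1; 0; 0]; [:: 1; 0; 1; 0; 1; 1; 1; 0]; [:: 0; 0; 0; 1; 0; 1; 0]; [:: 1]; [:: 1; 0; 1; 0; 1]; [:: 1]; [:: 0; 1; 1; 0; 0; 1; 0]; [:: 0; 1; 0; 1; 0; 1; 0]; [:: 1; 0; 1; 1; 0]; [:: 0; 0; 0]; [:: 0; 0; 1; 1; 0; 1; 1; 0]; [:: 0; 1; 0; 0; 1]; [:: 0; 0; 0; 0; 1; 1; 0; 0]; [:: 0; 1; 1; 0; 1; 0; 1; 0]; [:: 1; 0; 1; 0; 0; 1; 1]; [:: 1; 0; 0]; [:: 0; 1; 0; 1; 0; 1; 1; 1; 0]; [:: 0; 1; 0; 0; 1; 0; 0]; [:: 0; 1; 1; 1; 0]; [::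 1; 0; 1; 0; 0; 1; 0; 1; 1; 1; 0]; [:: 1; 1; 0; 0; 1; 0; 1; 0]; [:: 0; 1; 0; 0; 1; 1; 0; 0]; [:: 0; 1; 0; 1; 0; 0; 1; 0; 0]; [:: 0; 1; 1; 1; 0; 1; 1]; [:: 0; 1; 0; 1; 1; 0; 1; 0]; [:: 0; 1; 0; 1; 1; 0; 1; 1; 1; 1; 0]; [:: 1; 1; 1; 0]; [:: 0; 1; 1; 1; 0; 1; 1; 1; 1; 0]; [:: 0; 1; 1; 0; 0; 1]; [:: 1; 0; 1; 1; 1; 0; 1; 0]; [:: 1; 1; 0; 1; 1; 0; 0]; [:: 0; 0; 0; 0; 0; 0; 0; 1; 0]; [:: 1; 0; 0; 1; 0]; [:: 1; 1; 1; 1; 0]; [:: 1; 0; 0; 1; 1; 0; 1; 1]; [:: 0; 0; 1]; [:: 0; 1; 1; 0; 1; 1; 0]; [:: 1; 1; 1; 0]; [:: 0; 0; 0; 1; 0; 0; 1; 0; 0]; [:: 0; 1; 0; 0; 1; 1]; [:: 0; 1; 1; 0; 1]; [:: 0; 0; 0; 0; 0; 1; 0; 0; 1]; [:: 1; 0; 1; 1; 0; 1; 0; 1; 1; 0]; [:: 1; 1; 1; 0; 1; 1; 0]; [:: 0; 0; 0; 0; 1; 0]; [:: 0; 1; 0; 0; 1; 0]; [:: 1; 1; 1; 1; 0; 1; 0; 1]; [:: 0; 0; 1; 1; 0]; [:: 1; 1; 0; 1; 1; 1; 0]; [:: 0; 1; 0; 0; 1; 0; 0]; [:: 1; 0; 1;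 0; 1; 1; 0; 1; 1; 0]; [:: 0; 0; 0; 0; 0; 1; 0; 1; 0]; [:: 0; 1; 0; 1; 0; 1; 0]; [:: 0; 0; 0; 0; 1; 1; 0]; [:: 1; 0; 0; 1; 0; 1; 0; 1; 1; 1; 0]; [:: 0; 1; 1; 1; 1; 0; 1; 1; 0]; [:: 0; 0; 0; 0; 1; 0; 0]; [:: 1; 1; 0; 0; 1; 1; 0; 1; 1; 1; 0]; [:: 0; 0; 1; 1; 0]; [:: 1; 1; 0; 0; 1; 1; 0; 0]; [:: 1; 0; 0]; [:: 1; 1; 0; 0]; [:: 0; 0]; [:: 1; 0; 1; 1; 0; 1; 0]; [:: 1; 0; 0; 1; 0]; [:: 0; 1; 0; 0]; [:: 0; 1; 0; 1; 1; 1; 1]; [:: 1; 1; 1]; [:: 1; 1; 1]; [:: 1; 1; 1; 1; 0; 1]; [:: 0; 0; 1; 0; 0]; [:: 0; 0; 0; 0; 0; 0]; [:: 1; 1; 1; 1; 0; 1; 0]; [:: 0; 1; 1; 1; 1]; [:: 0; 0]; [:: 1; 0; 0; 1; 1; 1; 1; 0; 1]; [:: 0; 0; 1; 1]; [:: 1; 1; 1; 1; 0; 0; 1; 1]; [:: 1; 1; 0; 1; 1; 1; 0; 1]; [:: 1; 0; 1; 1]; [:: 1; 1; 0; 1; 1; 0; 0; 1; 1]; [:: 0; 0; 0; 1; 1; 0; 1; 1]; [:: 1; 0; 1; 1; 1; 0; 1; 1]; [:: 0; 1; 1; 0; 0; 1; 1]; [:: 1; 0; 1; 0; 0; 1; 0;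 0]; [:: 0; 0; 0; 0; 0; 0; 0; 1; 0]; [:: 1; 1; 1; 0; 1; 1; 1; 0]; [:: 0; 0; 1; 0]; [:: 0; 0; 0; 0; 0]; [:: 0; 1; 1; 0; 1; 0]; [:: 0; 1; 0]; [:: 1; 0; 1; 0; 1; 1]; [:: 0; 1; 0; 1; 0; 1; 0; 1; 1; 0]; [:: 0; 1; 0; 1; 1; 0; 1; 1; 0]; [:: 0; 0; 0; 0; 0; 0; 0]; [:: 0; 1; 1; 0; 0]; [:: 0; 1; 1; 1; 0; 1; 1; 0; 0; 1; 1]; [:: 0; 0; 0; 0; 0; 1; 0; 0; 1]; [:: 1; 1; 0; 0; 1; 0; 0; 1]; [:: 0; 1; 0; 1; 1; 0; 0]; [:: 0; 1; 0; 0; 1; 1; 1; 1; 0]; [:: 0; 1; 1; 1; 0; 1; 1; 0]; [:: 1; 0; 1; 0; 0; 1; 1]; [:: 0; 1; 1; 1; 1; 0]; [:: 0; 1; 0; 0; 1; 0; 0; 1]; [:: 1; 1; 0; 1; 1]; [:: 1; 1; 1; 0; 1; 1; 0; 0; 1; 1]; [:: 1; 1; 1; 0; 1; 1; 1; 0; 1]; [:: 0; 0; 0; 0; 0; 1; 1; 0; 0]; [:: 0; 0; 0; 1; 0; 1; 0; 0]; [:: 1; 1; 1; 0; 1; 1]; [:: 1; 1; 0; 0; 1; 1; 0; 0]; [:: 1; 0; 1; 1; 0]; [:: 0; 1; 0; 1; 1; 1; 1; 0]; [:: 1; 1]; [:: 1; 1]; [:: 1; 1; 0; 1; 0; 1];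 [:: 1; 1; 0; 0; 1; 0]; [:: 0; 1; 1; 0; 1; 1; 1; 0]; [:: 0; 0; 1; 0; 1; 0]; [:: 0; 1; 1; 0; 1; 0; 1; 1; 0]; [:: 0; 0; 0; 0; 0; 1; 1; 0]; [:: 1; 0; 0; 1; 1; 0]; [:: 0; 0; 0]; [:: 1; 0; 0; 1; 0; 0]; [:: 0; 0; 1]; [:: 0; 0; 0; 0; 0; 1; 0; 1; 0; 0]; [:: 0; 1; 0; 0; 1; 0; 0; 1]; [:: 0; 0; 1; 1; 1; 1; 0; 0; 1]; [:: 0; 1]; [:: 1; 1; 0; 0; 1; 0; 0]; [:: 1; 0; 0; 1]; [:: 1; 1; 0; 1; 0; 1; 0]; [:: 1; 0; 0; 1; 1; 0; 0]; [:: 0; 1; 1; 0]; [:: 1; 1; 1; 0; 1; 1; 1; 1; 0]; [:: 0; 0; 0; 1; 1; 0]; [:: 0; 0; 0]; [:: 0; 0; 0; 0; 1; 0; 0; 1]; [:: 0; 1; 1; 1; 1]; [:: 1; 0; 1; 1; 1; 1; 0; 0; 1]].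

Definition gA k := if k is 0 then GA0 else GA1.
Definition gAi k := if k is 0 then GAi0 else GAi1.
Definition gL k := if k is 0 then GL0 else GL1.
Definition gLi k := if k is 0 then GLi0 else GLi1.
Definition actF (k : nat) (a : V) : V := ft (linW (gLi k)) a.
Definition actU (k : nat) (u : V) : V := linW (gA k) u.
Definition applyF (w : seq nat) (a : V) : V := foldl (fun a k => actF k a) a w.
Definition applyU (w : seq nat) (u : V) : V := foldl (fun u k => actU k u) u w.
Definition wordF (a : V) := nth [::] wordFlist (code a).
Definition wordU (a : V) := nth [::] wordUlist (code a).
Definition gtab := [seq gm Tab1 b | b <- allV].

Definition all6 (P : nat -> bool) := all P (iota 0 6).
Lemma all6P P : all6 P -> forall i, (i < 6)%N -> P i.
Proof. by move/allP=> H i hi; apply: H; rewrite mem_iota. Qed.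
Lemma chk_Cm : all6 (fun i => all6 (fun j => Cm i j == cvec (i + j))).
Proof. by vm_compute. Qed.
Lemma chk_field : forallV (fun w => (w == vzero) || (vmul w (vinv w) == e 0)).
Proof. by vm_compute. Qed.
Lemma chk_lam : lamV == vpow (e 1) 91.
Proof. by vm_compute. Qed.
Lemma chk_T1 : all6 (fun i => all6 (fun j => Tab1 i j == psfV (dofV lV1) (e i) (e j))).
Proof. by vm_compute. Qed.
Lemma chk_T2 : all6 (fun i => all6 (fun j =>
  Tab2 i j == vmul (vpow lamV 3) (psfV (dofV lV2) (e i) (e j)))).
Proof. by vm_compute. Qed.
Lemma chk_rel : all6 (fun i => all6 (fun j => Tab2 i j == BV Tab1 (BV Tab1 lamV (e i)) (e j))).
Proof. by vm_compute. Qed.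
Lemma chk_iso : all6 (fun i => BV Tab1 lamV (PV (e i)) == e i).
Proof. by vm_compute. Qed.
Lemma chk_W1 : all6 (fun j => gcol Tab2 a0 (X2 (e j)) == gcol Tab2 b0 (e j)).
Proof. by vm_compute. Qed.
Lemma chk_W2 : forallV (fun y => peval X2 y == vzero).
Proof. by vm_compute. Qed.
Lemma chk_W3 : Zc Tab2 a0 == 261.
Proof. by vm_compute. Qed.
Lemma chk_uniq : uniq allV. Proof. by vm_compute. Qed.
Lemma chk_size : size allV = 729%N. Proof. by vm_compute. Qed.
Lemma chk_gen : all (fun k =>
  [&& all6 (fun i => all6 (fun j => BV Tab1 (linW (gA k) (e i)) (linW (gA k) (e j)) ==
                                     linW (gL k) (BV Tab1 (e i) (e j)))),
      all6 (fun i => linW (gAi k) (linW (gA k) (e i)) == e i),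
      all6 (fun i => linW (gA k) (linW (gAi k) (e i)) == e i),
      all6 (fun i => linW (gLi k) (linW (gL k) (e i)) == e i) &
      all6 (fun i => linW (gL k) (linW (gLi k) (e i)) == e i)]) [:: 0; 1]%N.
Proof. by vm_compute. Qed.
Lemma chk_orbF : forallV (fun a => applyF (wordF a) a \in repsF).
Proof. by vm_compute. Qed.
Lemma chk_orbU : forallV (fun u => applyU (wordU u) u \in repsU).
Proof. by vm_compute. Qed.
Lemma chk_zdR : all (fun r => (r == vzero) ||
   forallV (fun v => (lin v (at6 (BVrow Tab1 r)) == vzero) ==> (v == vzero))) repsU.
Proof. by vm_compute. Qed.
Lemma chk_repsF : all (fun r => (Zc Tab1 r == 261) ==> checkA gtab r) repsF.
Proof. by vm_compute. Qed.
Lemma checkA_spec a : checkA gtab a ->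
  [/\ all (fun p => (p.2 == vzero) ==> (p.1 == vzero)) (zip allV [seq lin w (at6 (gm Tab1 a)) | w <- allV]),
      all6 (fun k => lin (at6 (Hof a) k) (at6 (gm Tab1 a)) == e k) &
      all (fun Gb => peval (fun v => lin v (at6 (mk6 (fun j => lin (at6 Gb j) (at6 (Hof a)))))) (e 0) != vzero) gtab].
Proof. by case/and3P. Qed.

Import GRing.Theory.
Local Open Scope ring_scope.

Lemma co_add u v k : co (vadd u v) k = add3 (co u k) (co v k).
Proof. by do 5 (case: k => [|k] //). Qed.
Lemma co_opp u k : co (vopp u) k = opp3 (co u k).
Proof. by do 5 (case: k => [|k] //). Qed.
Lemma co_scale a u k : co (vscale a u) k = mul3 a (co u k).
Proof. by do 5 (case: k => [|k] //). Qed.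
Lemma co_zero k : co vzero k = Z0.
Proof. by do 5 (case: k => [|k] //). Qed.

Section Fsec.
Variables (F : finFieldType) (xi : F).
Hypothesis HF3 : 3%N \in [pchar F].

Lemma three0 : 3%:R = 0 :> F. Proof. exact: pcharf0 HF3. Qed.
Lemma two_m1 : 2%:R = -1 :> F.
Proof. by apply/eqP; rewrite -subr_eq0 opprK -(natrD F 2 1) three0. Qed.
Lemma one_neq_m1 : (1 : F) != -1.
Proof. by rewrite -subr_eq0 opprK -(natrD F 1 1) two_m1 oppr_eq0 oner_eq0. Qed.

Definition inj (t : t3) : F := match t with Z0 => 0 | Z1 => 1 | Z2 => -1 end.
Lemma inj_add a b : inj (add3 a b) = inj a + inj b.
Proof.
have h1 : (1 : F) + 1 = -1 by rewrite -(natrD F 1 1) two_m1.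
have h2 : (-1 : F) + -1 = 1 by rewrite -opprD h1 opprK.
by case: a; case: b; rewrite /= ?addr0 ?add0r ?subrr ?addNr ?h1 ?h2.
Qed.
Lemma inj_opp a : inj (opp3 a) = - inj a.
Proof. by case: a; rewrite /= ?oppr0 ?opprK. Qed.
Lemma inj_mul a b : inj (mul3 a b) = inj a * inj b.
Proof. by case: a; case: b; rewrite /= ?mul0r ?mulr0 ?mul1r ?mulr1 ?oppr0 ?mulrNN ?mulr1. Qed.
Lemma inj_inj : injective inj.
Proof.
have h := one_neq_m1.
have h0 : (-1 : F) != 0 by rewrite oppr_eq0 oner_eq0.
case; case => //= /eqP; rewrite ?(negbTE h) ?(negbTE h0) ?oner_eq0 //.
- by rewrite eq_sym oner_eq0.
- by rewrite eq_sym (negbTE h0).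
- by rewrite eq_sym (negbTE h).
Qed.

Definition phi (v : V) : F := \sum_(k < 6) inj (co v k) * xi ^+ k.
Lemma phi_add u v : phi (vadd u v) = phi u + phi v.
Proof. by rewrite /phi -big_split; apply: eq_bigr => k _; rewrite co_add inj_add mulrDl. Qed.
Lemma phi_opp u : phi (vopp u) = - phi u.
Proof. by rewrite /phi -sumrN; apply: eq_bigr => k _; rewrite co_opp inj_opp mulNr. Qed.
Lemma phi_scale a u : phi (vscale a u) = inj a * phi u.
Proof. by rewrite /phi mulr_sumr; apply: eq_bigr => k _; rewrite co_scale inj_mul mulrA. Qed.
Lemma phi_zero : phi vzero = 0.
Proof. by rewrite /phi big1 // => k _; rewrite co_zero mul0r. Qed.
Lemma phi_lin c w : phi (lin c w) = \sum_(k < 6) inj (co c k) * phi (w k).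
Proof.
rewrite /lin !phi_add !phi_scale.
by rewrite !big_ord_recl big_ord0 addr0 /=.
Qed.
Lemma phi_e k : (k < 6)%N -> phi (e k) = xi ^+ k.
Proof.
rewrite /phi; case: k => [|[|[|[|[|[|k]]]]]] // _;
 rewrite !big_ord_recl big_ord0 /= ?mul0r ?mul1r ?add0r ?addr0 //.
Qed.

Lemma phi_BV T u v : phi (BV T u v) =
  \sum_(j < 6) inj (co v j) * \sum_(i < 6) inj (co u i) * phi (T i j).
Proof. by rewrite /BV phi_lin; apply: eq_bigr => j _; rewrite phi_lin. Qed.

Definition biadd (m : F -> F -> F) :=
  (forall x y z, m (x + y) z = m x z + m y z) /\ (forall x y z, m x (y + z) = m x y + m x z).

Lemma self_dbl0 (x : F) : x = x + x -> x = 0.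
Proof. by move/(congr1 (fun z => z - x)); rewrite subrr addrK. Qed.

Lemma biadd_scalel m t x y : biadd m -> m (inj t * x) y = inj t * m x y.
Proof.
case=> Hl _; have m0 : m 0 y = 0 by apply: self_dbl0; rewrite -Hl addr0.
case: t => /=; rewrite ?mul0r ?mul1r // !mulN1r.
by apply/eqP; rewrite -addr_eq0 -Hl addNr m0.
Qed.
Lemma biadd_scaler m t x y : biadd m -> m x (inj t * y) = inj t * m x y.
Proof.
case=> _ Hr; have m0 : m x 0 = 0 by apply: self_dbl0; rewrite -Hr addr0.
case: t => /=; rewrite ?mul0r ?mul1r // !mulN1r.
by apply/eqP; rewrite -addr_eq0 -Hr addNr m0.
Qed.
Lemma biadd_suml m (I : finType) (g : I -> F) y : biadd m ->
  m (\sum_i g i) y = \sum_i m (g i) y.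
Proof.
move=> Hm; case: (Hm) => Hl _.
have m0 : m 0 y = 0 by apply: self_dbl0; rewrite -Hl addr0.
exact: (big_morph (fun x => m x y) (fun a b => Hl a b y) m0).
Qed.
Lemma biadd_sumr m (I : finType) (g : I -> F) x : biadd m ->
  m x (\sum_i g i) = \sum_i m x (g i).
Proof.
move=> Hm; case: (Hm) => _ Hr.
have m0 : m x 0 = 0 by apply: self_dbl0; rewrite -Hr addr0.
exact: (big_morph (fun y => m x y) (fun a b => Hr x a b) m0).
Qed.

Lemma phi_BV_bi T m : biadd m ->
  (forall i j, (i < 6)%N -> (j < 6)%N -> phi (T i j) = m (xi ^+ i) (xi ^+ j)) ->
  forall u v, phi (BV T u v) = m (phi u) (phi v).
Proof.
move=> Hm HT u v; rewrite phi_BV /phi (biadd_sumr _ _ Hm).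
apply: eq_bigr => j _; rewrite (biadd_scaler _ _ _ Hm) (biadd_suml _ _ Hm); congr (_ * _).
apply: eq_bigr => i _; rewrite (biadd_scalel _ _ _ Hm) -/(phi (T i j)) HT //.
Qed.

Lemma phiE v : phi v = inj (c0 v) + inj (c1 v) * xi + inj (c2 v) * xi ^+ 2 +
  inj (c3 v) * xi ^+ 3 + inj (c4 v) * xi ^+ 4 + inj (c5 v) * xi ^+ 5.
Proof. by rewrite /phi !big_ord_recr big_ord0 /= add0r expr0 mulr1 expr1. Qed.

Hypothesis Hxi : xi ^+ 6 - xi ^+ 4 + xi ^+ 2 - xi - 1 = 0.
Lemma xi6 : xi ^+ 6 = 1 + xi - xi ^+ 2 + xi ^+ 4.
Proof.
move/eqP: Hxi; rewrite GRing.subr_eq add0r GRing.subr_eq eq_sym -GRing.subr_eq eq_sym GRing.subr_eq => /eqP //.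
Qed.

Lemma phiE' v : phi v = inj (c0 v) * xi ^+ 0 + inj (c1 v) * xi ^+ 1 + inj (c2 v) * xi ^+ 2 +
  inj (c3 v) * xi ^+ 3 + inj (c4 v) * xi ^+ 4 + inj (c5 v) * xi ^+ 5.
Proof. by rewrite /phi !big_ord_recr big_ord0 /= add0r. Qed.
Lemma hm (c : F) k : (c * xi ^+ k) * xi = c * xi ^+ k.+1.
Proof. by rewrite -mulrA -exprSr. Qed.
Lemma phi_shift v : phi (shift v) = phi v * xi.
Proof.
rewrite /shift phi_add phi_scale !phiE' /= !mulrDl !hm xi6.
by rewrite ?mulr1 ?mul1r ?mulN1r ?mul0r ?addr0 ?add0r ?expr0 ?expr1.
Qed.

Lemma phi_e0 : phi (e 0) = 1. Proof. by rewrite phi_e. Qed.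
Lemma phi_cvec k : phi (cvec k) = xi ^+ k.
Proof.
elim: k => [|k IH]; first by rewrite phi_e0.
by rewrite /cvec iterS -/(cvec k) phi_shift IH exprSr.
Qed.
Lemma biadd_mul : biadd (fun x y : F => x * y).
Proof. by split=> x y z; rewrite ?mulrDl ?mulrDr. Qed.
Lemma phi_vmul u v : phi (vmul u v) = phi u * phi v.
Proof.
apply: (phi_BV_bi biadd_mul) => i j hi hj.
move: (all6P chk_Cm hi) => /all6P /(_ j hj) /eqP ->.
by rewrite phi_cvec exprD.
Qed.
Lemma phi_vpow u n : phi (vpow u n) = phi u ^+ n.
Proof.
elim: n => [|n IH]; first by rewrite phi_e0 expr0.
by rewrite /vpow iterS -/(vpow u n) phi_vmul IH exprS.
Qed.
Lemma phi_sub u v : phi (vsub u v) = phi u - phi v.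
Proof. by rewrite /vsub phi_add phi_opp. Qed.
Lemma vsub_eq0 u v : vsub u v = vzero -> u = v.
Proof.
case: u => a b c d e f; case: v => a' b' c' d' e' f'.
rewrite /vsub /vadd /vopp /= => -[].
by case: a; case: a' => //; case: b; case: b' => //; case: c; case: c' => //;
  case: d; case: d' => //; case: e; case: e' => //; case: f; case: f' => //.
Qed.
Lemma phi_inj : injective phi.
Proof.
move=> u v H; apply: vsub_eq0.
have H0 : phi (vsub u v) = 0 by rewrite phi_sub H subrr.
move: (forallV_spec chk_field (vsub u v)); case/orP => [/eqP //|/eqP Hw].
have := congr1 phi Hw; rewrite phi_vmul H0 mul0r phi_e0 => /esym/eqP.
by rewrite oner_eq0.
Qed.

Hypothesis Hcard : #|F| = (3 ^ 6)%N.
Lemma phi_all x : x \in map phi allV.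
Proof.
have Hu : uniq (map phi allV) by rewrite (map_inj_uniq phi_inj) chk_uniq.
have Hc : #|map phi allV| = #|F| by move/card_uniqP: Hu => ->; rewrite size_map chk_size Hcard.
have /(subset_cardP Hc) Heq : map phi allV \subset F by apply/subsetP.
by rewrite Heq.
Qed.
Lemma psi_sig : { psi : F -> V | forall x, phi (psi x) = x }.
Proof.
exists (fun x => nth vzero allV (index x (map phi allV))) => x.
rewrite -(nth_map _ 0); last by rewrite -(size_map phi) index_mem phi_all.
by rewrite nth_index // phi_all.
Qed.
Definition psi := sval psi_sig.
Lemma psiK x : phi (psi x) = x.
Proof. exact: (svalP psi_sig). Qed.
Lemma phiK u : psi (phi u) = u.
Proof. by apply: phi_inj; rewrite psiK. Qed.

Lemma frob3 (x y : F) : (x + y) ^+ 3 = x ^+ 3 + y ^+ 3.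
Proof. exact: (rmorphD (pFrobenius_aut HF3) x y). Qed.
Lemma frobD k (x y : F) : (x + y) ^+ (3 ^ k) = x ^+ (3 ^ k) + y ^+ (3 ^ k).
Proof. by elim: k => [|k IH]; rewrite ?expn0 ?expr1 // expnSr !exprM IH frob3. Qed.
Definition dof (l : seq (F * nat * nat)) (x : F) :=
  \sum_(t <- l) t.1.1 * (x ^+ (3 ^ t.1.2) * x ^+ (3 ^ t.2)).
Definition bdo (l : seq (F * nat * nat)) (x y : F) :=
  \sum_(t <- l) t.1.1 * (x ^+ (3 ^ t.1.2) * y ^+ (3 ^ t.2) + y ^+ (3 ^ t.1.2) * x ^+ (3 ^ t.2)).
Lemma dof_add l x y : dof l (x + y) = dof l x + dof l y + bdo l x y.
Proof.
rewrite /dof /bdo -!big_split /=; apply: eq_bigr => t _.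
rewrite !frobD mulrDl !mulrDr -!mulrDr; congr (_ * _).
by rewrite !mulrDr [X in _ + X = _]addrC addrACA.
Qed.
Lemma bdoC l x y : bdo l x y = bdo l y x.
Proof. by apply: eq_bigr => t _; rewrite addrC. Qed.
Lemma bdo_addl l x x' y : bdo l (x + x') y = bdo l x y + bdo l x' y.
Proof.
rewrite /bdo -big_split /=; apply: eq_bigr => t _.
by rewrite !frobD mulrDl !mulrDr addrACA.
Qed.
Lemma div2 (z : F) : z / 2%:R = - z.
Proof. by rewrite two_m1 invrN1 mulrN1. Qed.
Lemma psf_dof l x y : psf_mul (dof l) x y = - bdo l x y.
Proof.
rewrite /psf_mul div2 dof_add; congr (- _).
by rewrite -(addrA (dof l x)) (addrC (dof l x)) addrK [dof l y + _]addrC addrK.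
Qed.
Lemma psf_scale (c : F) g x y : psf_mul (fun z => c * g z) x y = c * psf_mul g x y.
Proof. by rewrite /psf_mul -!mulrBr mulrA. Qed.

Definition l1 : seq (F * nat * nat) := [:: (1, 5%N, 3%N); (-1, 5%N, 1%N); (1, 4%N, 2%N); (-1, 4%N, 0%N);
  (-1, 3%N, 3%N); (1, 3%N, 1%N); (-1, 2%N, 0%N); (-1, 0%N, 0%N)].
Lemma f1_dof x : f1 x = dof l1 x.
Proof.
rewrite /f1 /dof !big_cons big_nil /= !mul1r !mulN1r addr0 -!exprD !addrA.
by [].
Qed.
Definition lam := xi ^+ 91.
Definition l2 : seq (F * nat * nat) := [:: (1, 5%N, 3%N); (-1, 5%N, 1%N); (- lam ^+ 2, 4%N, 2%N); (lam ^+ 2, 4%N, 0%N);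
  (-1, 3%N, 3%N); (1, 3%N, 1%N); (lam ^+ 2, 2%N, 0%N); (lam ^+ 2, 0%N, 0%N)].
Lemma f2_dof x : f2 lam x = lam ^+ 3 * dof l2 x.
Proof.
rewrite /f2 /dof !big_cons big_nil /= !mul1r !mulN1r !mulNr addr0 -!exprD !addrA.
by [].
Qed.
Definition mul1 := psf_mul (@f1 F).
Definition mul2 := psf_mul (f2 lam).
Lemma mul1E x y : mul1 x y = - bdo l1 x y.
Proof. by rewrite -psf_dof /mul1 /psf_mul !f1_dof. Qed.
Lemma mul2E x y : mul2 x y = lam ^+ 3 * - bdo l2 x y.
Proof.
rewrite -psf_dof -psf_scale /mul2 /psf_mul !f2_dof //.
Qed.
Lemma biadd_bdo l (c : F) : biadd (fun x y => c * - bdo l x y).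
Proof.
split=> x y z; first by rewrite bdo_addl opprD mulrDr.
by rewrite !(bdoC l x) bdo_addl opprD mulrDr.
Qed.
Lemma biadd1 : biadd mul1.
Proof.
have [H1 H2] := biadd_bdo l1 1.
by split=> x y z; rewrite !mul1E; move: (H1 x y z) (H2 x y z); rewrite !mul1r.
Qed.
Lemma biadd2 : biadd mul2.
Proof.
have [H1 H2] := biadd_bdo l2 (lam ^+ 3).
by split=> x y z; rewrite !mul2E.
Qed.


Lemma phi_vfr i u : phi (vfr i u) = phi u ^+ (3 ^ i).
Proof.
elim: i => [|i IH]; first by rewrite expn0 expr1.
by rewrite /vfr iterS -/(vfr i u) phi_vpow IH expnSr exprM.
Qed.
Lemma dofV_cons t l x : dofV (t :: l) x = vadd (vmul t.1.1 (vmul (vfr t.1.2 x) (vfr t.2 x))) (dofV l x).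
Proof. by []. Qed.
Lemma phi_dofV l x : phi (dofV l x) = dof [seq (phi t.1.1, t.1.2, t.2) | t <- l] (phi x).
Proof.
elim: l => [|t l IH]; first by rewrite /dof big_nil phi_zero.
by rewrite dofV_cons phi_add IH !phi_vmul !phi_vfr /dof map_cons big_cons.
Qed.
Lemma phi_vm1 : phi vm1 = -1. Proof. by rewrite /vm1 phi_opp phi_e0. Qed.
Lemma phi_psfV f g : (forall w, phi (f w) = g (phi w)) ->
  forall x y, phi (psfV f x y) = psf_mul g (phi x) (phi y).
Proof. by move=> Hf x y; rewrite /psfV phi_opp !phi_sub !Hf phi_add /psf_mul div2. Qed.
Lemma lam_phi : lam = phi lamV.
Proof. by rewrite (eqP chk_lam) phi_vpow phi_e. Qed.
Arguments vpow : simpl never.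
Lemma map_lV1 : [seq (phi t.1.1, t.1.2, t.2) | t <- lV1] = l1.
Proof. by rewrite /lV1 /= phi_e0 phi_vm1. Qed.
Lemma map_lV2 : [seq (phi t.1.1, t.1.2, t.2) | t <- lV2] = l2.
Proof. by rewrite /lV2 /= phi_e0 phi_vm1 phi_opp phi_vpow -lam_phi. Qed.
Lemma phi_BV1 u v : phi (BV Tab1 u v) = mul1 (phi u) (phi v).
Proof.
apply: (phi_BV_bi biadd1) => {u v} i j hi hj.
move: (all6P chk_T1 hi) => /all6P /(_ j hj) /eqP ->.
have Hf : forall w, phi (dofV lV1 w) = dof l1 (phi w) by move=> w; rewrite phi_dofV map_lV1.
by rewrite (phi_psfV Hf) !phi_e // /mul1 /psf_mul !f1_dof.
Qed.
Lemma phi_BV2 u v : phi (BV Tab2 u v) = mul2 (phi u) (phi v).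
Proof.
apply: (phi_BV_bi biadd2) => {u v} i j hi hj.
move: (all6P chk_T2 hi) => /all6P /(_ j hj) /eqP ->.
have Hf : forall w, phi (dofV lV2 w) = dof l2 (phi w) by move=> w; rewrite phi_dofV map_lV2.
rewrite phi_vmul phi_vpow -lam_phi (phi_psfV Hf) !phi_e // /mul2 -psf_scale.
by rewrite /psf_mul !f2_dof.
Qed.
Lemma BV_row T u v : BV T u v = lin v (at6 (BVrow T u)).
Proof. by []. Qed.
Lemma phi_eq0 u : phi u = 0 -> u = vzero.
Proof. by move=> H; apply: phi_inj; rewrite H phi_zero. Qed.
Definition vadditive (g : V -> V) := forall x y, g (vadd x y) = vadd (g x) (g y).
Lemma vscale0 x : vscale Z0 x = vzero.
Proof. by []. Qed.
Lemma vscale1 x : vscale Z1 x = x.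
Proof. by case: x. Qed.
Lemma vscale2 x : vscale Z2 x = vopp x.
Proof. by []. Qed.
Lemma vadd0 : vadd vzero vzero = vzero. Proof. by []. Qed.
Lemma add_zero g : vadditive g -> g vzero = vzero.
Proof.
move=> Hg; apply: phi_inj; rewrite phi_zero; apply: self_dbl0.
by rewrite -phi_add -Hg vadd0.
Qed.
Lemma add_opp g x : vadditive g -> g (vopp x) = vopp (g x).
Proof.
move=> Hg; apply: phi_inj; rewrite phi_opp; apply/eqP; rewrite -addr_eq0 -!phi_add -Hg.
have -> : vadd (vopp x) x = vzero by apply: phi_inj; rewrite phi_add phi_opp addNr phi_zero.
by rewrite add_zero // phi_zero.
Qed.
Lemma add_scale g t x : vadditive g -> g (vscale t x) = vscale t (g x).
Proof.
move=> Hg; case: t; rewrite ?vscale0 ?vscale1 ?vscale2 ?add_zero //.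
exact: add_opp.
Qed.
Lemma add_lin g c w : vadditive g -> g (lin c w) = lin c (fun j => g (w j)).
Proof. by move=> Hg; rewrite /lin !Hg !(add_scale _ _ Hg). Qed.
Lemma lin_e c : lin c e = c.
Proof.
apply: phi_inj; rewrite phi_lin /phi; apply: eq_bigr => k _.
by rewrite -/(phi (e k)) phi_e.
Qed.
Lemma lin_addc c c' w : lin (vadd c c') w = vadd (lin c w) (lin c' w).
Proof.
apply: phi_inj; rewrite phi_add !phi_lin -big_split; apply: eq_bigr => k _.
by rewrite co_add inj_add mulrDl.
Qed.
Lemma lin_addw c w w' : lin c (fun j => vadd (w j) (w' j)) = vadd (lin c w) (lin c w').
Proof.
apply: phi_inj; rewrite phi_add !phi_lin -big_split; apply: eq_bigr => k _.
by rewrite phi_add mulrDr.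
Qed.
Lemma lin_eqw c w w' : (forall j, (j < 6)%N -> w j = w' j) -> lin c w = lin c w'.
Proof. by move=> H; rewrite /lin !H. Qed.
Lemma lin_additive w : vadditive (fun c => lin c w).
Proof. by move=> x y; rewrite lin_addc. Qed.
Lemma agree_basis g h : vadditive g -> vadditive h ->
  (forall j, (j < 6)%N -> g (e j) = h (e j)) -> forall v, g v = h v.
Proof.
move=> Hg Hh H v; rewrite -(lin_e v) (add_lin _ _ Hg) (add_lin _ _ Hh).
exact: lin_eqw.
Qed.
Lemma inj_dot a z : inj (dot a z) = \sum_(k < 6) inj (co a k) * inj (co z k).
Proof. by rewrite /dot !inj_add !inj_mul !big_ord_recl big_ord0 addr0. Qed.
Lemma dotC a z : dot a z = dot z a.
Proof. by apply: inj_inj; rewrite !inj_dot; apply: eq_bigr => k _; rewrite mulrC. Qed.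
Lemma dot_add a x y : dot a (vadd x y) = add3 (dot a x) (dot a y).
Proof.
apply: inj_inj; rewrite inj_add !inj_dot -big_split; apply: eq_bigr => k _.
by rewrite co_add inj_add mulrDr.
Qed.
Lemma dot_scale a t x : dot a (vscale t x) = mul3 t (dot a x).
Proof.
apply: inj_inj; rewrite inj_mul !inj_dot mulr_sumr; apply: eq_bigr => k _.
by rewrite co_scale inj_mul mulrCA.
Qed.
Lemma dot_lin a c U : dot a (lin c U) =
  dot c (mkV (dot a (U 0)) (dot a (U 1)) (dot a (U 2)) (dot a (U 3)) (dot a (U 4)) (dot a (U 5))).
Proof. by rewrite /lin !dot_add !dot_scale. Qed.
Lemma BV_addl T u u' v : BV T (vadd u u') v = vadd (BV T u v) (BV T u' v).
Proof.
rewrite /BV -lin_addw; apply: lin_eqw => j _; exact: lin_addc.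
Qed.
Lemma BV_addr T u v v' : BV T u (vadd v v') = vadd (BV T u v) (BV T u v').
Proof. by rewrite /BV lin_addc. Qed.
Lemma gcol_add T a : vadditive (gcol T a).
Proof. by move=> x y; rewrite /gcol !BV_addr !dot_add. Qed.
Lemma dot_BV T a x w : dot a (BV T x w) = dot x (gcol T a w).
Proof.
have Hg : vadditive (fun u => BV T u w) by move=> u u'; rewrite BV_addl.
by rewrite -{1}(lin_e x) (add_lin _ _ Hg) dot_lin dotC.
Qed.
Lemma gcol_gm T a w : gcol T a w = lin w (at6 (gm T a)).
Proof.
rewrite -{1}(lin_e w) (add_lin _ _ (gcol_add T a)); by apply: lin_eqw => -[|[|[|[|[|[|j]]]]]].
Qed.

Lemma count_bij (g : V -> V) (P : pred V) : bijective g ->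
  count P allV = count (fun x => P (g x)) allV.
Proof.
case=> gi gK giK.
have Hperm : perm_eq (map g allV) allV.
  apply: uniq_perm; first by rewrite (map_inj_uniq (can_inj gK)) chk_uniq.
    exact: chk_uniq.
  move=> x; rewrite mem_allV; apply/mapP; exists (gi x); [exact: mem_allV | by rewrite giK].
by rewrite -(permP Hperm P) count_map.
Qed.
Lemma ft_spec LV a z : vadditive LV -> dot a (LV z) = dot (ft LV a) z.
Proof. by move=> HL; rewrite -{1}(lin_e z) (add_lin _ _ HL) dot_lin dotC. Qed.

Lemma X2_add : vadditive X2.
Proof. by move=> x y; rewrite /X2 lin_addc. Qed.
Lemma W1ext v : gcol Tab2 a0 (X2 v) = gcol Tab2 b0 v.
Proof.
apply: (agree_basis (g := fun v => gcol Tab2 a0 (X2 v))) => //.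
- by move=> x y; rewrite X2_add gcol_add.
- exact: gcol_add.
- by move=> j hj; apply/eqP; apply: (all6P chk_W1 hj).
Qed.
Lemma zip_map_all (s : seq V) (f : V -> V) (P : pred (V * V)) :
  all P (zip s (map f s)) -> forall x, x \in s -> P (x, f x).
Proof.
elim: s => //= y s IH /andP [Hy Hs] x; rewrite inE => /orP [/eqP -> //|].
exact: IH.
Qed.
Lemma peval_conj (AV Ai X : V -> V) : vadditive AV -> cancel AV Ai -> cancel Ai AV ->
  forall v, peval (fun w => AV (X (Ai w))) v = AV (peval X (Ai v)).
Proof.
move=> HA AK AiK v; rewrite /peval.
have H : forall (l : seq t3) r1 r2, r1 = AV r2 ->
    foldl (fun r c => vadd (AV (X (Ai r))) (vscale c v)) r1 l =
    AV (foldl (fun r c => vadd (X r) (vscale c (Ai v))) r2 l).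
  elim=> [|c l IH] r1 r2 -> //=; apply: IH.
  by rewrite AK HA (add_scale _ _ HA) AiK.
by apply: H; rewrite add_zero.
Qed.
Lemma vsubrr x : vadd x (vopp x) = vzero.
Proof. by apply: phi_inj; rewrite phi_add phi_opp subrr phi_zero. Qed.
Lemma peval_ext (Y Z : V -> V) : (forall v, Y v = Z v) -> forall v, peval Y v = peval Z v.
Proof. by move=> H v; rewrite (functional_extensionality _ _ H). Qed.

Lemma linW_add W : vadditive (linW W).
Proof. exact: lin_additive. Qed.
Lemma linW_cancel W W' : all6 (fun i => linW W' (linW W (e i)) == e i) -> cancel (linW W) (linW W').
Proof.
move=> H v; apply: (agree_basis (g := fun v => linW W' (linW W v)) (h := id)) => //.
- by move=> x y; rewrite !linW_add.
- by move=> j hj; apply/eqP; apply: (all6P H hj).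
Qed.
Lemma gen_spec k : [/\ cancel (linW (gA k)) (linW (gAi k)), cancel (linW (gAi k)) (linW (gA k)),
  cancel (linW (gL k)) (linW (gLi k)), cancel (linW (gLi k)) (linW (gL k)) &
  forall u v, BV Tab1 (linW (gA k) u) (linW (gA k) v) = linW (gL k) (BV Tab1 u v)].
Proof.
have Hk : exists2 k', k' \in [:: 0; 1]%N & [/\ gA k = gA k', gAi k = gAi k', gL k = gL k' & gLi k = gLi k'].
  by case: k => [|k]; [exists 0%N | exists 1%N].
case: Hk => k' /(allP chk_gen) /and5P [H1 H2 H3 H4 H5] [-> -> -> ->].
split; try exact: linW_cancel.
have Hb : forall i, (i < 6)%N -> forall v,
    BV Tab1 (linW (gA k') (e i)) (linW (gA k') v) = linW (gL k') (BV Tab1 (e i) v).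
  move=> i hi; apply: (agree_basis (g := fun v => BV Tab1 (linW (gA k') (e i)) (linW (gA k') v))
                                   (h := fun v => linW (gL k') (BV Tab1 (e i) v))).
  - by move=> x y; rewrite linW_add BV_addr.
  - by move=> x y; rewrite BV_addr linW_add.
  - by move=> j hj; apply/eqP; move: (all6P H1 hi) => /all6P /(_ j hj).
move=> u v; apply: (agree_basis (g := fun u => BV Tab1 (linW (gA k') u) (linW (gA k') v))
                                (h := fun u => linW (gL k') (BV Tab1 u v))) => //.
- by move=> x y; rewrite linW_add BV_addl.
- by move=> x y; rewrite BV_addl linW_add.
- by move=> i hi; apply: Hb.
Qed.
Lemma gen_bwd k u v : BV Tab1 u v = linW (gLi k) (BV Tab1 (linW (gA k) u) (linW (gA k) v)).
Proof. by case: (gen_spec k) => _ _ HL _ Hf; rewrite Hf HL. Qed.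

Definition Wit (T : nat -> nat -> V) (a : V) := exists b (X : V -> V),
  [/\ vadditive X, (forall v, gcol T a (X v) = gcol T b v) & (forall v, peval X v = vzero)].

Lemma transfer T T' (AV LV : V -> V) : vadditive AV -> vadditive LV -> bijective AV ->
  (forall u v, BV T u v = LV (BV T' (AV u) (AV v))) ->
  forall a, Wit T a -> Wit T' (ft LV a).
Proof.
move=> HA HL [Ai AK AiK] Hrel a [b [X [HX Hg Hp]]].
have HAi : vadditive Ai by move=> x y; apply: (can_inj AK); rewrite HA !AiK.
exists (ft LV b), (fun v => AV (X (Ai v))); split.
- by move=> x y; rewrite HAi HX HA.
- move=> v; rewrite /gcol.
  have key : forall i, dot (ft LV a) (BV T' (e i) (AV (X (Ai v)))) = dot (ft LV b) (BV T' (e i) v).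
    move=> i; rewrite -[e i]AiK -[v in RHS]AiK -!ft_spec //.
    by rewrite -!Hrel !dot_BV Hg.
  by rewrite !key.
- by move=> v; rewrite (peval_conj _ HA AK AiK) Hp add_zero.
Qed.
Lemma transferZ T T' (AV LV : V -> V) : vadditive AV -> vadditive LV -> bijective AV ->
  (forall u v, BV T u v = LV (BV T' (AV u) (AV v))) ->
  forall a, Zc T' (ft LV a) = Zc T a.
Proof.
move=> HA HL HB Hrel a.
rewrite /Zc (count_bij (fun y => dot (ft LV a) (BV T' y y) == Z0) HB).
by apply: eq_count => x /=; rewrite Hrel (ft_spec _ _ HL).
Qed.

Lemma witF w a : Wit Tab1 a -> Wit Tab1 (applyF w a) /\ Zc Tab1 (applyF w a) = Zc Tab1 a.
Proof.
elim: w a => [|k w IH] a Ha //=.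
case: (gen_spec k) => AK AiK _ _ _.
have Hb : bijective (linW (gA k)) by exists (linW (gAi k)).
have [H1 H2] := IH _ (transfer (linW_add _) (linW_add _) Hb (gen_bwd k) Ha).
split=> //; rewrite H2 /actF.
exact: (transferZ (linW_add _) (linW_add _) Hb (gen_bwd k)).
Qed.

Lemma nowit a : checkA gtab a -> ~ Wit Tab1 a.
Proof.
move=> /checkA_spec [HK HH HP] [b [X [HX Hg Hp]]].
set Ga := at6 (gm Tab1 a); set H := at6 (Hof a).
have Kw : forall w, lin w Ga = vzero -> w = vzero.
  move=> w Hw; move: (zip_map_all HK (mem_allV w)) => /=.
  by rewrite Hw eqxx /= => /eqP.
have HH' : forall k, (k < 6)%N -> lin (H k) Ga = e k.
  by move=> k hk; apply/eqP; apply: (all6P HH hk).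
have Hsol : forall c, lin (lin c H) Ga = c.
  move=> c; rewrite (add_lin _ _ (lin_additive _)) -{2}(lin_e c); exact: lin_eqw.
have HW : forall j, (j < 6)%N -> X (e j) = lin (at6 (gm Tab1 b) j) H.
  move=> j hj; apply: vsub_eq0; apply: Kw.
  rewrite /vsub lin_addc (add_opp _ (lin_additive _)) Hsol.
  rewrite /Ga -gcol_gm Hg.
  have -> : at6 (gm Tab1 b) j = gcol Tab1 b (e j).
    by move: hj; case: j => [|[|[|[|[|[|j]]]]]].
  exact: vsubrr.
have HXlin : forall v, X v = lin v (at6 (mk6 (fun j => lin (at6 (gm Tab1 b) j) H))).
  move=> v; rewrite -{1}(lin_e v) (add_lin _ _ HX).
  by apply: lin_eqw => j hj; rewrite HW //; move: hj; case: j => [|[|[|[|[|[|j]]]]]].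
move: HP; rewrite /gtab all_map => /allP /(_ b (mem_allV _)) /negP; apply.
cbv beta; apply/eqP; rewrite -(Hp (e 0)); apply: peval_ext => v.
by rewrite HXlin.
Qed.

Lemma coreV (AV LV : V -> V) : vadditive AV -> vadditive LV -> bijective AV ->
  (forall u v, BV Tab2 u v = LV (BV Tab1 (AV u) (AV v))) -> False.
Proof.
move=> HA HL HB Hrel.
have W2 : Wit Tab2 a0.
  exists b0, X2; split; [exact: X2_add | exact: W1ext | ].
  by move=> v; apply/eqP; apply: (forallV_spec chk_W2).
have W1 := transfer HA HL HB Hrel W2.
have Z1 : Zc Tab1 (ft LV a0) = 261%N by rewrite (transferZ HA HL HB Hrel) (eqP chk_W3).
set a1 := ft LV a0 in W1 Z1.
have [Wr Zr] := witF (wordF a1) W1.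
move: (forallV_spec chk_orbF a1) => /(allP chk_repsF).
by rewrite Zr Z1 eqxx implyTb => /nowit.
Qed.

Lemma applyU_zero w u : applyU w u = vzero -> u = vzero.
Proof.
elim: w u => [|k w IH] u //= /IH; rewrite /actU => H.
case: (gen_spec k) => AK _ _ _ _; rewrite -(AK u) H.
exact: (add_zero (linW_add _)).
Qed.
Lemma applyU_mul w u v : BV Tab1 u v = vzero -> BV Tab1 (applyU w u) (applyU w v) = vzero.
Proof.
elim: w u v => [|k w IH] u v //= H; apply: IH.
case: (gen_spec k) => _ _ _ _ Hf; rewrite /actU Hf H.
exact: (add_zero (linW_add _)).
Qed.
Lemma mul1_zd x y : mul1 x y = 0 -> x = 0 \/ y = 0.
Proof.
rewrite -(psiK x) -(psiK y) -phi_BV1 => /phi_eq0 H.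
set u := psi x in H *; set v := psi y in H *.
have Hr := applyU_mul (wordU u) H.
move: (forallV_spec chk_orbU u) => /(allP chk_zdR) /orP [/eqP /applyU_zero ->|].
  by left; rewrite phi_zero.
move=> /forallV_spec /(_ (applyU (wordU u) v)) /implyP Hi.
right; rewrite (applyU_zero (eqP (Hi _))) ?phi_zero //.
by rewrite -BV_row Hr.
Qed.
Lemma mul_rel x y : mul2 x y = mul1 (mul1 lam x) y.
Proof.
have Hm : biadd (fun x y => mul1 (mul1 lam x) y).
  case: biadd1 => Hl Hr; split=> a b c; first by rewrite Hr Hl.
  by rewrite Hr.
have H2 : forall u v, phi (BV Tab2 u v) = mul1 (mul1 lam (phi u)) (phi v).
  apply: (phi_BV_bi Hm) => i j hi hj.
  move: (all6P chk_rel hi) => /all6P /(_ j hj) /eqP ->.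
  by rewrite !phi_BV1 lam_phi !phi_e.
by rewrite -(psiK x) -(psiK y) -phi_BV2 H2.
Qed.
Lemma xi_neq0 : xi != 0.
Proof.
apply/negP=> /eqP H; move: Hxi; rewrite H !expr0n /= !subr0 add0r sub0r => /eqP.
by rewrite oppr_eq0 oner_eq0.
Qed.
Lemma lam_neq0 : lam != 0. Proof. by rewrite /lam expf_neq0 // xi_neq0. Qed.
Lemma mul2_zd x y : mul2 x y = 0 -> x = 0 \/ y = 0.
Proof.
rewrite mul_rel => /mul1_zd [/mul1_zd [H|H]|H]; [| by left | by right].
by move: lam_neq0; rewrite H eqxx.
Qed.
Lemma biadd_opp m x y : biadd m -> m (- x) y = - m x y.
Proof. by move=> Hm; have := biadd_scalel Z2 x y Hm; rewrite /= !mulN1r. Qed.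
Lemma planar_of f : biadd (psf_mul f) ->
  (forall x y, psf_mul f x y = 0 -> x = 0 \/ y = 0) -> planar f.
Proof.
move=> Hb Hz a Ha; apply: injF_bij => x y /= H.
have H2 : psf_mul f x a = psf_mul f y a by rewrite /psf_mul H.
have : psf_mul f (x - y) a = 0 by case: (Hb) => Hl _; rewrite Hl (biadd_opp _ _ Hb) H2 subrr.
case/Hz => [/eqP|/eqP]; last by rewrite (negbTE Ha).
by rewrite subr_eq0 => /eqP.
Qed.
Definition fadd (g : F -> F) := forall x y, g (x + y) = g x + g y.
Lemma psi_add x y : psi (x + y) = vadd (psi x) (psi y).
Proof. by apply: phi_inj; rewrite phi_add !psiK. Qed.
Lemma coreF (A L : F -> F) : fadd A -> fadd L -> bijective A ->
  (forall x y, mul2 x y = L (mul1 (A x) (A y))) -> False.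
Proof.
move=> HA HL [Ai AK AiK] H.
pose AV := fun v => psi (A (phi v)).
pose LV := fun v => psi (L (phi v)).
apply: (@coreV AV LV).
- by move=> x y; rewrite /AV phi_add HA psi_add.
- by move=> x y; rewrite /LV phi_add HL psi_add.
- exists (fun v => psi (Ai (phi v))) => v; by rewrite /AV psiK ?AK ?AiK phiK.
- move=> u v; apply: phi_inj; rewrite phi_BV2 H /LV psiK phi_BV1 /AV !psiK //.
Qed.
Lemma linfun_add (L : F -> F) : linearized_fun 3 L -> fadd L.
Proof.
case=> a Ha x y; rewrite !Ha -big_split; apply: eq_bigr => i _.
by rewrite frobD mulrDr.
Qed.
Lemma fadd_inv (M Mi : F -> F) : fadd M -> cancel M Mi -> cancel Mi M -> fadd Mi.
Proof. by move=> HM MK MiK x y; apply: (can_inj MK); rewrite HM !MiK. Qed.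
Lemma not_strong : ~ strongly_isotopic 3 mul1 mul2.
Proof.
case=> L [M] [[HLl _] [HMl [Mi MK MiK]] H].
have HM := linfun_add HMl.
apply: (@coreF Mi L (fadd_inv HM MK MiK) (linfun_add HLl) (Bijective MiK MK)).
by move=> x y; rewrite -H !MiK.
Qed.

Definition Dd (f : F -> F) x y := f (x + y) - f x - f y.
Lemma psfD (f : F -> F) (x y : F) : psf_mul f x y = - Dd f x y.
Proof. by rewrite /psf_mul div2. Qed.
Lemma Dd_add g h x y : Dd (fun z => g z + h z) x y = Dd g x y + Dd h x y.
Proof. by rewrite /Dd !opprD (addrACA (g (x + y))) (addrACA (g (x + y) - g x)). Qed.
Lemma Dd_fadd g x y : fadd g -> Dd g x y = 0.
Proof. by move=> Hg; rewrite /Dd Hg [g x + _]addrC addrK subrr. Qed.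
Lemma fadd0 g : fadd g -> g 0 = 0.
Proof. by move=> Hg; apply: self_dbl0; rewrite -Hg addr0. Qed.
Lemma faddN g x : fadd g -> g (- x) = - g x.
Proof.
move=> Hg; apply/eqP; rewrite -addr_eq0 -Hg addNr fadd0 //.
Qed.
Lemma Dd_lin (L g : F -> F) x y : fadd L -> Dd (fun z => L (g z)) x y = L (Dd g x y).
Proof. by move=> HL; rewrite /Dd !HL !(faddN _ HL). Qed.
Lemma psf_expand (f : F -> F) (x y : F) : f (x + y) = f x + f y - psf_mul f x y.
Proof.
rewrite psfD opprK /Dd -[f (x + y) - f x - f y]addrA -opprD.
by rewrite [RHS]addrC subrK.
Qed.
Lemma z0n n : (0 < n)%N -> (0 : F) ^+ n = 0.
Proof. by move=> hn; rewrite expr0n eqn0Ngt hn. Qed.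
Lemma f1_0 : f1 (0 : F) = 0.
Proof. by rewrite /f1 !z0n // !subr0 !addr0. Qed.
Lemma f2_0 : f2 lam 0 = 0.
Proof. by rewrite /f2 !z0n // !mulr0 !subr0 !addr0 mulr0. Qed.
Lemma not_affine : ~ affine_equiv 3 (@f1 F) (f2 lam).
Proof.
case=> l1 [l2] [[[c1 [L1 [HL1 Hl1]]] Hb1] [[[c2 [L2 [HL2 Hl2]]] Hb2] H]].
have HA1 := linfun_add HL1; have HA2 := linfun_add HL2.
have HB2 : bijective L2.
  apply: injF_bij => x y Hxy; apply: (bij_inj Hb2).
  by rewrite !Hl2 Hxy.
pose ell := fun z => L1 (mul1 c2 (L2 z)).
have Hell : fadd ell.
  move=> x y; rewrite /ell HA2; case: biadd1 => _ Hr; by rewrite Hr HA1.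
have Hf2 : forall z, f2 lam z = (c1 + L1 (f1 c2)) + L1 (f1 (L2 z)) - ell z.
  move=> z; rewrite H Hl1 Hl2 psf_expand -/mul1 /ell.
  by rewrite HA1 faddN // HA1 !addrA.
have HK : c1 + L1 (f1 c2) = 0.
  have := Hf2 0; rewrite f2_0 (fadd0 HA2) f1_0 (fadd0 HA1) addr0 (fadd0 Hell) subr0.
  by move=> <-.
apply: (@coreF L2 L1 HA2 HA1 HB2) => x y.
rewrite /mul2 psfD.
have -> : Dd (f2 lam) x y = Dd (fun z => L1 (f1 (L2 z)) + - ell z) x y.
  by rewrite /Dd !Hf2 HK !add0r.
rewrite Dd_add (Dd_fadd x y (g := fun z => - ell z)); last first.
  by move=> u v; rewrite Hell opprD.
rewrite addr0 Dd_lin // /mul1 psfD /Dd HA2.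
by rewrite (faddN _ HA1).
Qed.

Definition aF := map phi aVlist.
Definition Pf (x : F) := \sum_(i < size aF) aF`_i * x ^+ (3 ^ i).
Lemma phi_PVgen f : phi (PVgen f) = \sum_(i < 6) phi (f i).
Proof. by rewrite /PVgen !phi_add !big_ord_recl big_ord0 addr0. Qed.
Lemma Pf_phi u : Pf (phi u) = phi (PV u).
Proof.
rewrite /Pf; have -> : size aF = 6%N by rewrite /aF size_map.
rewrite /PV phi_PVgen; apply: eq_bigr => i _.
by rewrite phi_vmul phi_vfr /aF (nth_map vzero).
Qed.
Lemma fadd_scale g t y : fadd g -> g (inj t * y) = inj t * g y.
Proof.
move=> Hg; case: t => /=; rewrite ?mul0r ?mul1r ?fadd0 // !mulN1r.
exact: faddN.
Qed.
Lemma agree_F g h : fadd g -> fadd h -> (forall i, (i < 6)%N -> g (xi ^+ i) = h (xi ^+ i)) ->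
  forall x, g x = h x.
Proof.
move=> Hg Hh H x; rewrite -(psiK x) /phi.
rewrite (big_morph g Hg (fadd0 Hg)) (big_morph h Hh (fadd0 Hh)).
by apply: eq_bigr => i _; rewrite !fadd_scale // H.
Qed.
Lemma RP : cancel Pf (mul1 lam).
Proof.
have HP : fadd Pf by apply: linfun_add; exists aF.
apply: (agree_F (g := fun x => mul1 lam (Pf x)) (h := id)) => //.
- by move=> x y; rewrite HP; case: biadd1 => _ ->.
- move=> i hi; rewrite -(phi_e hi) Pf_phi lam_phi -phi_BV1.
  by rewrite (eqP (all6P chk_iso hi)).
Qed.
Lemma linperm_id : linperm 3 (@id F).
Proof.
split; last by exists id.
by exists [:: 1] => x; rewrite big_ord_recl big_ord0 /= mul1r expn0 expr1 addr0.
Qed.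
Lemma iso : isotopic 3 mul1 mul2.
Proof.
exists id, Pf, id; split; try exact: linperm_id.
- split; first by exists aF.
  by apply: injF_bij; exact: (can_inj RP).
- by move=> x y; rewrite mul_rel RP.
Qed.
Lemma main_aux :
  (presemifield mul1 /\ presemifield mul2) /\
  (isotopic 3 mul1 mul2 /\ ~ strongly_isotopic 3 mul1 mul2) /\
  (planar (@f1 F) /\ planar (f2 lam) /\ ~ affine_equiv 3 (@f1 F) (f2 lam)) /\
  (forall x y, mul2 x y = mul1 (mul1 lam x) y).
Proof.
have [b11 b12] := biadd1; have [b21 b22] := biadd2.
split; [split; split=> //; split=> //; [exact: mul1_zd | exact: mul2_zd] |].
split; [split; [exact: iso | exact: not_strong] |].
split; last exact: mul_rel.
split; first exact: (planar_of biadd1 mul1_zd).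
split; first exact: (planar_of biadd2 mul2_zd).
exact: not_affine.
Qed.
End Fsec.

Theorem mainTheorem3 (F : finFieldType) (xi : F) :
  3%N \in [pchar F] -> #|F| = (3 ^ 6)%N ->
  xi ^+ 6 - xi ^+ 4 + xi ^+ 2 - xi - 1 = 0 ->
  let lam := xi ^+ 91 in
  let mul1 := psf_mul (@f1 F) in
  let mul2 := psf_mul (f2 lam) in
  (presemifield mul1 /\ presemifield mul2) /\
  (isotopic 3 mul1 mul2 /\ ~ strongly_isotopic 3 mul1 mul2) /\
  (planar (@f1 F) /\ planar (f2 lam) /\ ~ affine_equiv 3 (@f1 F) (f2 lam)) /\
  (forall x y, mul2 x y = mul1 (mul1 lam x) y).
Proof.
move=> H3 Hc Hx; exact: (main_aux H3 Hx Hc).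
Qed.
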